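(* There exist a finite group $G$ of order $2^7$ (namely $\texttt{SmallGroup}(128,560)$) and a core-free elementary abelian subgroup $H$ of $G$ of order $8$ such that $d_G(H)=3$ but $b(G,H)=4$; in particular there are no $x,y\in G$ with $H\cap H^x\cap H^y=1$.
   Context: Depth: for a finite group $G$, a subgroup $H$ and $m\geqslant 1$, let $(\mathbb{C}G)^{\otimes m}=\mathbb{C}G\otimes_{\mathbb{C}H}\cdots\otimes_{\mathbb{C}H}\mathbb{C}G$ ($m$ factors). For $n\geqslant 1$, the inclusion $\mathbb{C}H\subseteq\mathbb{C}G$ has depth $2n$ if $(\mathbb{C}G)^{\otimes(n+1)}$ is isomorphic, as a $(\mathbb{C}G,\mathbb{C}H)$-bimodule, to a direct summand of $\bigoplus_{i=1}^k(\mathbb{C}G)^{\otimes n}$ for some $k\geqslant 1$; it has depth $2n+1$ if the same holds for $(\mathbb{C}H,\mathbb{C}H)$-bimodules; it has depth $1$ if $\mathbb{C}G$ is isomorphic as a $(\mathbb{C}H,\mathbb{C}H)$-bimodule to a direct summand of $\bigoplus_{i=1}^k\mathbb{C}H$ for some $k\geqslant1$. The depth $d_G(H)$ is the least positive integer $n$ such that the inclusion has depth $n$. For core-free $H$ (i.e. $\bigcap_{g\in G}H^g=1$), $b(G,H)$ is the least $b$ such that there exist $x_1,\dots,x_b\in G$ with $\bigcap_{i=1}^b H^{x_i}=1$. $\texttt{SmallGroup}(128,560)$ refers to the group with that identifier in the GAP/Magma small groups library. *)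

(* Defs.v *)
From HB Require Import structures.
From mathcomp Require Import all_boot all_order all_algebra all_fingroup all_solvable all_field.
Set Implicit Arguments. Unset Strict Implicit. Unset Printing Implicit Defensive.
Import GRing.Theory.

(* The (CG,CH)-bimodule (CG)^{(x)m} = CG (x)_{CH} ... (x)_{CH} CG (m factors) *)
(* is modelled by its standard permutation basis: the set of orbits of         *)
(* H^{m-1} on the m-tuples of elements of G, where (h_1,...,h_{m-1}) sends     *)
(* (g_1,...,g_m) to (g_1 h_1, h_1^-1 g_2 h_2, ..., h_{m-1}^-1 g_m), i.e. the   *)
(* classes of the relation  x h (x) y = x (x) h y.  The left action of G       *)
(* multiplies the first entry on the left, the right action of H multiplies    *)
(* the last entry on the right.  Modules are over algC (algebraic complex      *)
(* numbers), matrices act on row vectors.                                      *)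

Section TensorBimodule.
Variable gT : finGroupType.
Local Open Scope group_scope.

Definition tens_rel (H : {set gT}) m (s t : m.-tuple gT) : bool :=
  [exists h : (m.-1).-tuple gT,
     all (fun x => x \in H) h &&
     [forall i : 'I_m,
        tnth t i == (if val i is k.+1 then nth 1 h k else 1)^-1
                      * tnth s i * nth 1 h i]].

Definition tens_basis (G H : {set gT}) m : {set {set m.-tuple gT}} :=
  [set [set t | tens_rel H s t] | s in [set s : m.-tuple gT | all (fun x => x \in G) s]].

Definition lact m (g : gT) (t : m.-tuple gT) : m.-tuple gT :=
  [tuple (if val i == 0%N then g * tnth t i else tnth t i) | i < m].
Definition ract m (h : gT) (t : m.-tuple gT) : m.-tuple gT :=
  [tuple (if (val i).+1 == m then tnth t i * h else tnth t i) | i < m].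

Definition tens_dim (G H : {set gT}) m := #|tens_basis G H m|.

Definition basis_perm_mx (G H : {set gT}) m
    (f : {set m.-tuple gT} -> {set m.-tuple gT}) : 'M[algC]_(tens_dim G H m) :=
  \matrix_(i, j) ((f (@enum_val _ (mem (tens_basis G H m)) i)
                    == @enum_val _ (mem (tens_basis G H m)) j)%:R)%R.

Definition tensL (G H : {set gT}) m (g : gT) : 'M[algC]_(tens_dim G H m) :=
  basis_perm_mx G H (fun O => lact g @: O).
Definition tensR (G H : {set gT}) m (h : gT) : 'M[algC]_(tens_dim G H m) :=
  basis_perm_mx G H (fun O => ract h @: O).

(* P (left action PL, right action PR) is isomorphic, as an (A,B)-bimodule   *)
(* (i.e. a (CA,CB)-bimodule), to a direct summand of Q^k for some k >= 1:    *)
(* there are bimodule maps F_i : P -> Q, E_i : Q -> P (i < k) with           *)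
(* sum_i E_i o F_i = id_P (split mono P -> Q^k).                             *)
Definition bimod_summand (A B : {set gT}) p q
    (PL PR : gT -> 'M[algC]_p) (QL QR : gT -> 'M[algC]_q) : Prop :=
  exists k : nat, (0 < k)%N /\
  exists (F : 'I_k -> 'M[algC]_(p, q)) (E : 'I_k -> 'M[algC]_(q, p)),
    (forall i x, x \in A ->
       (PL x *m F i = F i *m QL x)%R /\ (QL x *m E i = E i *m PL x)%R) /\
    (forall i y, y \in B ->
       (PR y *m F i = F i *m QR y)%R /\ (QR y *m E i = E i *m PR y)%R) /\
    (\sum_(i < k) F i *m E i = 1%:M)%R.

Definition has_depth (G H : {set gT}) (n : nat) : Prop :=
  match n with
  | 0 => False
  | 1 => bimod_summand H H (tensL G H 1) (tensR G H 1)
                           (tensL H H 1) (tensR H H 1)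
  | _ => let j := n./2 in
         if odd n then
           bimod_summand H H (tensL G H j.+1) (tensR G H j.+1)
                             (tensL G H j) (tensR G H j)
         else
           bimod_summand G H (tensL G H j.+1) (tensR G H j.+1)
                             (tensL G H j) (tensR G H j)
  end.

Definition depth_is (G H : {set gT}) (d : nat) : Prop :=
  has_depth G H d /\ forall n, (0 < n < d)%N -> ~ has_depth G H n.

Definition base_ok (G H : {set gT}) (b : nat) : Prop :=
  exists xs : b.-tuple gT,
    all (fun x => x \in G) xs /\ \bigcap_(x <- xs) (H :^ x) = [1 gT].

Definition base_size_is (G H : {set gT}) (b : nat) : Prop :=
  base_ok G H b /\ forall c, (0 < c < b)%N -> ~ base_ok G H c.

End TensorBimodule.

(* Main.v *)
Require Import Defs.
From HB Require Import structures.
From mathcomp Require Import all_boot all_order all_algebra all_fingroup all_solvable all_field.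
From mathcomp.algebra_tactics Require Import ring.
Set Implicit Arguments. Unset Strict Implicit. Unset Printing Implicit Defensive.
Import GRing.Theory Num.Theory.

Section Tens.
Variable gT : finGroupType.
Local Open Scope group_scope.
Implicit Types (G H : {group gT}).

Lemma lactM m (x y : gT) (t : m.-tuple gT) : lact (x * y) t = lact x (lact y t).
Proof.
apply: eq_from_tnth => i; rewrite !tnth_mktuple.
by case: ifP => _; rewrite ?mulgA.
Qed.

Lemma lact1 m (t : m.-tuple gT) : lact 1 t = t.
Proof. by apply: eq_from_tnth => i; rewrite !tnth_mktuple; case: ifP; rewrite ?mul1g. Qed.

Lemma ractM m (x y : gT) (t : m.-tuple gT) : Defs.ract (x * y) t = Defs.ract y (Defs.ract x t).
Proof.
apply: eq_from_tnth => i; rewrite !tnth_mktuple.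
by case: ifP => _; rewrite ?mulgA.
Qed.

Lemma ract1 m (t : m.-tuple gT) : Defs.ract 1 t = t.
Proof. by apply: eq_from_tnth => i; rewrite !tnth_mktuple; case: ifP; rewrite ?mulg1. Qed.

Lemma lract m (x y : gT) (t : m.-tuple gT) : lact x (Defs.ract y t) = Defs.ract y (lact x t).
Proof.
apply: eq_from_tnth => i; rewrite !tnth_mktuple.
by case: ifP => _; case: ifP => _; rewrite ?mulgA.
Qed.

Lemma rel_lact H m (g : gT) (s t : m.-tuple gT) :
  tens_rel H (lact g s) (lact g t) = tens_rel H s t.
Proof.
apply: eq_existsb => h; congr (_ && _); apply: eq_forallb => i.
rewrite !tnth_mktuple; case: ifP => // /eqP i0.
case: i i0 => [[|k] ki] //= _.
by rewrite invg1 !mul1g -mulgA (inj_eq (mulgI g)).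
Qed.

Lemma rel_ract H m (g : gT) (s t : m.-tuple gT) :
  tens_rel H (Defs.ract g s) (Defs.ract g t) = tens_rel H s t.
Proof.
apply/existsP/existsP => [] [h /andP [hH /forallP hf]]; exists h; rewrite hH /=;
  apply/forallP => i; have := hf i; rewrite !tnth_mktuple; case: ifP => // /eqP im;
  (have e : nth 1 h i = 1 by rewrite nth_default // size_tuple -(congr1 predn im));
  rewrite e !mulg1 !mulgA.
  by move/eqP/mulIg/eqP.
by move/eqP => ->.
Qed.

Definition cls H m (s : m.-tuple gT) := [set t | tens_rel H s t].

Lemma cls_lact H m g (s : m.-tuple gT) : lact g @: cls H s = cls H (lact g s).
Proof.
apply/setP => t; rewrite inE; apply/imsetP/idP => [[t' ht' ->]|ht].
  by rewrite rel_lact -inE.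
exists (lact g^-1 t); last by rewrite -lactM mulgV lact1.
by rewrite inE -(rel_lact H g) -lactM mulgV lact1.
Qed.

Lemma cls_ract H m g (s : m.-tuple gT) : Defs.ract g @: cls H s = cls H (Defs.ract g s).
Proof.
apply/setP => t; rewrite inE; apply/imsetP/idP => [[t' ht' ->]|ht].
  by rewrite rel_ract -inE.
exists (Defs.ract g^-1 t); last by rewrite -ractM mulVg ract1.
by rewrite inE -(rel_ract H g) -ractM mulVg ract1.
Qed.

Lemma tens_basisP G H m (X : {set m.-tuple gT}) :
  reflect (exists2 s : m.-tuple gT, all (fun x => x \in G) s & X = cls H s) (X \in tens_basis G H m).
Proof.
apply: (iffP imsetP) => [[s hs ->]|[s hs ->]]; exists s => //; first by move: hs; rewrite inE.
by rewrite inE.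
Qed.

Lemma basis_lact G H m g (X : {set m.-tuple gT}) :
  g \in G -> X \in tens_basis G H m -> lact g @: X \in tens_basis G H m.
Proof.
move=> gG /tens_basisP [s hs ->]; apply/tens_basisP; exists (lact g s); last by rewrite cls_lact.
apply/all_tnthP => i; rewrite tnth_mktuple; move/all_tnthP: hs => hs.
by case: ifP => _; rewrite ?groupM ?hs.
Qed.

Lemma basis_ract G H m g (X : {set m.-tuple gT}) :
  g \in G -> X \in tens_basis G H m -> Defs.ract g @: X \in tens_basis G H m.
Proof.
move=> gG /tens_basisP [s hs ->]; apply/tens_basisP; exists (Defs.ract g s); last by rewrite cls_ract.
apply/all_tnthP => i; rewrite tnth_mktuple; move/all_tnthP: hs => hs.
by case: ifP => _; rewrite ?groupM ?hs.
Qed.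

Definition sl m g (X : {set m.-tuple gT}) := lact g @: X.
Definition sr m g (X : {set m.-tuple gT}) := Defs.ract g @: X.

Lemma slM m x y (X : {set m.-tuple gT}) : sl x (sl y X) = sl (x * y) X.
Proof. by rewrite /sl -imset_comp; apply: eq_imset => t /=; rewrite lactM. Qed.
Lemma srM m x y (X : {set m.-tuple gT}) : sr y (sr x X) = sr (x * y) X.
Proof. by rewrite /sr -imset_comp; apply: eq_imset => t /=; rewrite ractM. Qed.
Lemma sl1 m (X : {set m.-tuple gT}) : sl 1 X = X.
Proof. by rewrite /sl (eq_imset _ (@lact1 m)) imset_id. Qed.
Lemma sr1 m (X : {set m.-tuple gT}) : sr 1 X = X.
Proof. by rewrite /sr (eq_imset _ (@ract1 m)) imset_id. Qed.
Lemma slr m x y (X : {set m.-tuple gT}) : sl x (sr y X) = sr y (sl x X).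
Proof. by rewrite /sl /sr -!imset_comp; apply: eq_imset => t /=; rewrite lract. Qed.

End Tens.
Section Mk.
Local Open Scope ring_scope.

Definition mk (T1 T2 : finType) (B1 : {set {set T1}}) (B2 : {set {set T2}})
   (phi : {set T1} -> {set T2} -> algC) : 'M[algC]_(#|B1|, #|B2|) :=
  \matrix_(i, j) phi (enum_val i) (enum_val j).

Definition pmx (T : finType) (B : {set {set T}}) (f : {set T} -> {set T}) : 'M[algC]_#|B| :=
  mk B B (fun X Y => (f X == Y)%:R).

Lemma sum_ev (T : finType) (B : {set {set T}}) (g : {set T} -> algC) :
  \sum_(k < #|B|) g (enum_val k) = \sum_(X in B) g X.
Proof.
have [B0|/card_gt0P[x0 x0A]] := posnP #|B|.
  rewrite [RHS]big_pred0 => [|X]; last by have := card0_eq B0 X; rewrite !inE.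
  by rewrite big1 // => i; have := ltn_ord i; rewrite {2}B0.
rewrite (reindex (enum_val : 'I_#|B| -> _)).
  by apply: eq_bigl => i; rewrite enum_valP.
by apply: subon_bij (enum_val_bij_in x0A) => y.
Qed.

Lemma mk_mul (T1 T2 T3 : finType) (B1 : {set {set T1}}) (B2 : {set {set T2}}) (B3 : {set {set T3}}) phi psi :
  mk B1 B2 phi *m mk B2 B3 psi = mk B1 B3 (fun X Z => \sum_(Y in B2) phi X Y * psi Y Z).
Proof.
apply/matrixP => i j; rewrite !mxE -sum_ev; apply: eq_bigr => k _; by rewrite !mxE.
Qed.

Lemma mk_eq (T1 T2 : finType) (B1 : {set {set T1}}) (B2 : {set {set T2}}) phi psi :
  (forall X Y, X \in B1 -> Y \in B2 -> phi X Y = psi X Y) -> mk B1 B2 phi = mk B1 B2 psi.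
Proof. by move=> h; apply/matrixP => i j; rewrite !mxE h // enum_valP. Qed.

Lemma mk1 (T : finType) (B : {set {set T}}) : mk B B (fun X Y => (X == Y)%:R) = 1%:M.
Proof.
apply/matrixP => i j; rewrite !mxE.
by rewrite (inj_eq enum_val_inj).
Qed.

Lemma sum_delta_l (T : finType) (B : {set {set T}}) X0 (g : {set T} -> algC) :
  X0 \in B -> \sum_(Y in B) (X0 == Y)%:R * g Y = g X0.
Proof.
move=> h; rewrite (bigD1 X0) //= eqxx mul1r big1 ?addr0 // => Y /andP [_ ne].
by rewrite eq_sym (negbTE ne) mul0r.
Qed.

Lemma sum_delta_r (T : finType) (B : {set {set T}}) X0 (g : {set T} -> algC) :
  X0 \in B -> \sum_(Y in B) g Y * (Y == X0)%:R = g X0.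
Proof.
move=> h; rewrite (bigD1 X0) //= eqxx mulr1 big1 ?addr0 // => Y /andP [_ ne].
by rewrite (negbTE ne) mulr0.
Qed.

Lemma pmx_mull (T T2 : finType) (B : {set {set T}}) (B2 : {set {set T2}}) f phi :
  {in B, forall X, f X \in B} ->
  pmx B f *m mk B B2 phi = mk B B2 (fun X Y => phi (f X) Y).
Proof.
move=> hf; rewrite mk_mul; apply: mk_eq => X Y hX hY.
by rewrite sum_delta_l // hf.
Qed.

Lemma pmx_mulr (T T1 : finType) (B : {set {set T}}) (B1 : {set {set T1}}) f f' phi :
  {in B, forall X, f' X \in B} -> (forall X Y, (f X == Y) = (X == f' Y)) ->
  mk B1 B phi *m pmx B f = mk B1 B (fun X Y => phi X (f' Y)).
Proof.
move=> hf' hff; rewrite mk_mul; apply: mk_eq => X Y hX hY.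
under eq_bigr => Z _ do rewrite hff.
by rewrite sum_delta_r // hf'.
Qed.

Lemma mk_scale (T1 T2 : finType) (B1 : {set {set T1}}) (B2 : {set {set T2}}) c phi :
  c *: mk B1 B2 phi = mk B1 B2 (fun X Y => c * phi X Y).
Proof. by apply/matrixP => i j; rewrite !mxE. Qed.

Lemma mk_sum (I : finType) (P : pred I) (T1 T2 : finType) (B1 : {set {set T1}}) (B2 : {set {set T2}}) phi :
  \sum_(i | P i) mk B1 B2 (phi i) = mk B1 B2 (fun X Y => \sum_(i | P i) phi i X Y).
Proof. by apply/matrixP => i j; rewrite !mxE summxE; apply: eq_bigr => k _; rewrite mxE. Qed.

End Mk.
Section Pos.
Local Open Scope ring_scope.
Variable gT : finGroupType.
Variable H : {group gT}.
Variable beta : gT -> gT -> bool.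
Hypothesis bl : forall a a' x, a \in H -> a' \in H -> x \in H ->
  beta (a * a')%g x = beta a x (+) beta a' x.
Hypothesis br : forall a x x', a \in H -> x \in H -> x' \in H ->
  beta a (x * x')%g = beta a x (+) beta a x'.
Hypothesis bnd : forall x x', x \in H -> x' \in H -> x != x' ->
  exists2 a, a \in H & beta a x != beta a x'.
Hypothesis Hinv : forall x, x \in H -> (x^-1 = x)%g.

Definition sgb (b : bool) : algC := if b then -1 else 1.
Lemma sgb_xor u v : sgb (u (+) v) = sgb u * sgb v.
Proof. by case: u; case: v; rewrite /= ?mulN1r ?opprK ?mul1r. Qed.
Lemma sgb_real u : sgb u \is Num.real.
Proof. by case: u; rewrite /= ?rpredN rpred1. Qed.

Definition HH (w : gT * gT) := (w.1 \in H) && (w.2 \in H).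
Definition chiw (a w : gT * gT) : algC := sgb (beta a.1 w.1) * sgb (beta a.2 w.2).

Lemma sum_flip (I : finType) (P : pred I) (f : I -> algC) (h : I -> I) :
  injective h -> (forall i, P (h i) = P i) -> (forall i, P i -> f (h i) = - f i) ->
  \sum_(i | P i) f i = 0.
Proof.
move=> hi hP hf; set S := \sum_(i | P i) f i.
have e : S = - S.
  rewrite {1}/S (reindex_inj hi) /= /S -sumrN; apply: eq_big => [i|i Pi]; first by rewrite hP.
  by rewrite hf // -hP.
have : S *+ 2 == 0 by rewrite mulr2n {1}e addNr.
by rewrite mulrn_eq0 /= => /eqP.
Qed.

Lemma orth1 x x' : x \in H -> x' \in H ->
  \sum_(a in H) sgb (beta a x) * sgb (beta a x') = #|H|%:R * (x == x')%:R.
Proof.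
move=> hx hx'; have [<-|ne] := eqVneq x x'.
  rewrite mulr1 -sumr_const; apply: eq_bigr => a _.
  by case: (beta a x); rewrite ?mulrNN mulr1.
rewrite mulr0; have [a0 ha0 hne] := bnd hx hx' ne.
apply: (sum_flip (h := fun a => (a0 * a)%g)) => [|a|a ha]; first exact: mulgI.
  by rewrite /= groupMl.
rewrite /= !bl // -!sgb_xor; move: hne.
by case: (beta a0 x); case: (beta a0 x'); case: (beta a x); case: (beta a x'); rewrite //= ?opprK.
Qed.

Lemma orth w w' : HH w -> HH w' ->
  \sum_(a | HH a) chiw a w * chiw a w' = (#|H| ^ 2)%:R * (w == w')%:R.
Proof.
case: w w' => [x y] [x' y'] /andP [/= hx hy] /andP [/= hx' hy'].
rewrite /HH -(pair_big_dep (fun a => a \in H) (fun _ a => a \in H) (fun a1 a2 => chiw (a1, a2) (x, y) * chiw (a1, a2) (x', y'))) /=.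
have -> : \sum_(i in H) \sum_(j in H) chiw (i, j) (x, y) * chiw (i, j) (x', y') =
   (\sum_(i in H) sgb (beta i x) * sgb (beta i x')) * (\sum_(j in H) sgb (beta j y) * sgb (beta j y')).
  rewrite big_distrlr; apply: eq_bigr => i _; apply: eq_bigr => j _.
  by rewrite /chiw /=; rewrite !mulrA; congr (_ * _); rewrite -!mulrA; congr (_ * _); rewrite mulrC.
rewrite !orth1 // xpair_eqE; case: (x == x'); case: (y == y');
  by rewrite /= ?mulr1 ?mulr0 ?mul0r ?natrX ?expr2.
Qed.

Lemma chiw_real a w : chiw a w \is Num.real.
Proof. by rewrite rpredM ?sgb_real. Qed.

Section Side.
Variables (T : finType) (l r : gT -> {set T} -> {set T}).
Hypotheses (l1 : forall X, l 1%g X = X) (r1 : forall X, r 1%g X = X)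
  (lM : forall x y X, l x (l y X) = l (x * y)%g X)
  (rM : forall x y X, r y (r x X) = r (x * y)%g X)
  (lr : forall x y X, l x (r y X) = r y (l x X)).

Definition act (w : gT * gT) X := r w.2 (l w.1 X).

Lemma l_eq x X Y : (l x X == Y) = (X == l x^-1 Y).
Proof.
apply/eqP/eqP => [<-|->]; first by rewrite lM mulVg l1.
by rewrite lM mulgV l1.
Qed.

Lemma r_eq y X Y : (r y X == Y) = (X == r y^-1 Y).
Proof.
apply/eqP/eqP => [<-|->]; first by rewrite rM mulgV r1.
by rewrite rM mulVg r1.
Qed.

Lemma act_eq w O X : (act w O == X) = (O == l w.1^-1 (r w.2^-1 X)).
Proof. by rewrite /act r_eq l_eq. Qed.

Definition cf (a : gT * gT) (b X : {set T}) : algC :=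
  \sum_(w | HH w) chiw a w * (act w b == X)%:R.

Lemma cf_l a b X x0 : HH a -> x0 \in H -> cf a b (l x0 X) = sgb (beta a.1 x0) * cf a b X.
Proof.
move=> /andP [ha1 ha2] hx0; rewrite /cf mulr_sumr.
rewrite (reindex_inj (h := fun w => ((x0 * w.1)%g, w.2))); last first.
  by move=> [x y] [x' y'] /= [/mulgI -> ->].
apply: eq_big => [[x y]|[x y] /andP [/= hx hy]]; first by rewrite /HH /= groupMl.
have hx' : x \in H by rewrite -(groupMl x hx0).
have e : (l x0 (r y (l x b)) == l x0 X) = (r y (l x b) == X) by rewrite l_eq lM mulVg l1.
by rewrite /chiw /act /= br // sgb_xor -lM -lr e !mulrA.
Qed.

Lemma cf_r a b X y0 : HH a -> y0 \in H -> cf a b (r y0 X) = sgb (beta a.2 y0) * cf a b X.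
Proof.
move=> /andP [ha1 ha2] hy0; rewrite /cf mulr_sumr.
rewrite (reindex_inj (h := fun w => (w.1, (w.2 * y0)%g))); last first.
  by move=> [x y] [x' y'] /= [-> /mulIg ->].
apply: eq_big => [[x y]|[x y] /andP [/= hx hy]]; first by rewrite /HH /= groupMr.
have hy' : y \in H by rewrite -(groupMr y hy0).
have e : (r y0 (r y (l x b)) == r y0 X) = (r y (l x b) == X) by rewrite r_eq rM mulgV r1.
rewrite /chiw /act /= br // sgb_xor -rM e.
by rewrite !mulrA; congr (_ * _); rewrite mulrC mulrA.
Qed.

Lemma cf_real a b X : cf a b X \is Num.real.
Proof. by rewrite rpred_sum // => w _; rewrite rpredM ?chiw_real ?realn. Qed.

End Side.

Variables (TP TQ : finType) (BP : {set {set TP}}) (BQ : {set {set TQ}}).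
Variables (lP rP : gT -> {set TP} -> {set TP}) (lQ rQ : gT -> {set TQ} -> {set TQ}).
Hypotheses (lP1 : forall X, lP 1%g X = X) (rP1 : forall X, rP 1%g X = X)
  (lPM : forall x y X, lP x (lP y X) = lP (x * y)%g X)
  (rPM : forall x y X, rP y (rP x X) = rP (x * y)%g X)
  (lrP : forall x y X, lP x (rP y X) = rP y (lP x X)).
Hypotheses (lQ1 : forall X, lQ 1%g X = X) (rQ1 : forall X, rQ 1%g X = X)
  (lQM : forall x y X, lQ x (lQ y X) = lQ (x * y)%g X)
  (rQM : forall x y X, rQ y (rQ x X) = rQ (x * y)%g X)
  (lrQ : forall x y X, lQ x (rQ y X) = rQ y (lQ x X)).
Hypotheses (hlP : forall x X, x \in H -> X \in BP -> lP x X \in BP)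
  (hrP : forall x X, x \in H -> X \in BP -> rP x X \in BP)
  (hlQ : forall x X, x \in H -> X \in BQ -> lQ x X \in BQ)
  (hrQ : forall x X, x \in H -> X \in BQ -> rQ x X \in BQ).
Variable d : gT * gT -> {set TQ}.
Hypothesis dB : forall a, HH a -> d a \in BQ.
Hypothesis dst : forall a w, HH a -> HH w -> act lQ rQ w (d a) = d a -> chiw a w = 1.
Hypothesis BP0 : (0 < #|BP|)%N.

Let cP a b X := cf lP rP a b X.
Let cQ a Y := cf lQ rQ a (d a) Y.
Let Nq a := \sum_(Y in BQ) cQ a Y * cQ a Y.
Let Kc : algC := (#|H| ^ 4)%:R.

Lemma cP_l a b X x0 : HH a -> x0 \in H -> cP a b (lP x0 X) = sgb (beta a.1 x0) * cP a b X.
Proof. by move=> ha hx; apply: cf_l. Qed.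
Lemma cP_r a b X x0 : HH a -> x0 \in H -> cP a b (rP x0 X) = sgb (beta a.2 x0) * cP a b X.
Proof. by move=> ha hx; apply: cf_r. Qed.
Lemma cQ_l a X x0 : HH a -> x0 \in H -> cQ a (lQ x0 X) = sgb (beta a.1 x0) * cQ a X.
Proof. by move=> ha hx; apply: cf_l. Qed.
Lemma cQ_r a X x0 : HH a -> x0 \in H -> cQ a (rQ x0 X) = sgb (beta a.2 x0) * cQ a X.
Proof. by move=> ha hx; apply: cf_r. Qed.

Lemma HH11 : HH (1%g, 1%g). Proof. by rewrite /HH /= group1. Qed.

Lemma cQd_neq0 a : HH a -> cQ a (d a) != 0.
Proof.
move=> ha; have -> : cQ a (d a) = \sum_(w | HH w) ((act lQ rQ w (d a) == d a)%:R : algC).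
  apply: eq_bigr => w hw; case: eqP => [e|_]; last by rewrite mulr0.
  by rewrite dst // mul1r.
rewrite -natr_sum pnatr_eq0 -lt0n (bigD1 (1%g, 1%g)) ?HH11 //=.
by rewrite /act /= lQ1 rQ1 eqxx.
Qed.

Lemma Nq_neq0 a : HH a -> Nq a != 0.
Proof.
move=> ha; apply/eqP => N0.
have nn : forall Y, Y \in BQ -> 0 <= cQ a Y * cQ a Y.
  move=> Y _; rewrite -expr2 -real_normK ?cf_real //.
  by rewrite exprn_ge0 // normr_ge0.
have := psumr_eq0P nn N0 (dB ha).
by move/eqP; rewrite mulf_eq0 orbb (negbTE (cQd_neq0 ha)).
Qed.

Lemma Kc_neq0 : Kc != 0.
Proof. by rewrite /Kc pnatr_eq0 -lt0n expn_gt0 cardG_gt0. Qed.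

Lemma sum_HH1 : \sum_(w | HH w) (1 : algC) = (#|H| ^ 2)%:R.
Proof.
rewrite /HH -(pair_big_dep (fun x => x \in H) (fun _ y => y \in H) (fun _ _ => (1 : algC))).
by rewrite !sumr_const -mulrnA mulnn.
Qed.

Lemma actP_sum w X : HH w -> X \in BP ->
  \sum_(k < #|BP|) ((act lP rP w (enum_val k) == X)%:R : algC) = 1.
Proof.
move=> /andP [h1 h2] hX.
rewrite (sum_ev BP (fun O => ((act lP rP w O == X)%:R : algC))).
under eq_bigr => O _ do rewrite act_eq // -[(_ == _)%:R]mul1r.
by rewrite sum_delta_r // hlP ?groupV // hrP ?groupV.
Qed.

Lemma sum_pick (f : gT * gT -> algC) w : HH w ->
  \sum_(w' | HH w') f w' * (w == w')%:R = f w.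
Proof.
move=> hw; rewrite (bigD1 w) //= eqxx mulr1 big1 ?addr0 // => w' /andP [_ ne].
by rewrite eq_sym (negbTE ne) mulr0.
Qed.

Lemma core1 b X X' :
  \sum_(a | HH a) cP a b X * cP a b X' =
  (#|H| ^ 2)%:R * \sum_(w | HH w) (act lP rP w b == X)%:R * (act lP rP w b == X')%:R.
Proof.
have e1 a : cP a b X * cP a b X' = \sum_(w | HH w) \sum_(w' | HH w')
    (chiw a w * (act lP rP w b == X)%:R) * (chiw a w' * (act lP rP w' b == X')%:R).
  by rewrite /cP /cf big_distrlr.
under eq_bigr => a _ do rewrite e1.
rewrite exchange_big /= mulr_sumr; apply: eq_bigr => w hw.
rewrite exchange_big /=.
have e2 a w' : (chiw a w * (act lP rP w b == X)%:R) * (chiw a w' * (act lP rP w' b == X')%:R)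
   = ((act lP rP w b == X)%:R * (act lP rP w' b == X')%:R) * (chiw a w * chiw a w').
  by rewrite mulrACA mulrC.
under eq_bigr => w' hw' do under eq_bigr => a _ do rewrite e2.
under eq_bigr => w' hw' do rewrite -mulr_sumr orth // mulrA.
by rewrite sum_pick // mulrC.
Qed.

Lemma core X X' : X \in BP -> X' \in BP ->
  \sum_(k < #|BP|) \sum_(a | HH a) cP a (enum_val k) X * cP a (enum_val k) X' = Kc * (X == X')%:R.
Proof.
move=> hX hX'.
under eq_bigr => k _ do rewrite core1.
rewrite -mulr_sumr exchange_big /=.
have e w k : ((act lP rP w (enum_val k) == X)%:R * (act lP rP w (enum_val k) == X')%:R : algC)
    = (act lP rP w (enum_val k) == X)%:R * (X == X')%:R.
  by case: eqP => [->|_]; rewrite ?mul0r.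
under eq_bigr => w _ do under eq_bigr => k _ do rewrite e.
have e3 w : HH w -> \sum_(k < #|BP|) ((act lP rP w (enum_val k) == X)%:R * (X == X')%:R : algC) = (X == X')%:R.
  by move=> hw; rewrite -big_distrl /= actP_sum // mul1r.
rewrite (eq_bigr _ e3).
have -> : \sum_(w | HH w) ((X == X')%:R : algC) = (#|H|^2)%:R * (X == X')%:R.
  by rewrite -sum_HH1 big_distrl /=; apply: eq_bigr => w _; rewrite mul1r.
by rewrite mulrA -natrM -expnD /Kc.
Qed.


Lemma sum_ev2 (R : nmodType) (T : finType) (B : {set T}) (g : T -> R) :
  \sum_(k < #|B|) g (enum_val k) = \sum_(X in B) g X.
Proof.
have [B0|/card_gt0P[x0 x0A]] := posnP #|B|.
  rewrite [RHS]big_pred0 => [|X]; last by have := card0_eq B0 X; rewrite !inE.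
  by rewrite big1 // => i; have := ltn_ord i; rewrite {2}B0.
rewrite (reindex (enum_val : 'I_#|B| -> _)).
  by apply: eq_bigl => i; rewrite enum_valP.
by apply: subon_bij (enum_val_bij_in x0A) => y.
Qed.

Theorem summand_thm :
  bimod_summand H H (fun x => pmx BP (lP x)) (fun y => pmx BP (rP y))
                    (fun x => pmx BQ (lQ x)) (fun y => pmx BQ (rQ y)).
Proof.
pose IT := ('I_#|BP| * (gT * gT))%type.
pose Fk (t : IT) : 'M_(#|BP|, #|BQ|) :=
  if HH t.2 then mk BP BQ (fun X Y => cP t.2 (enum_val t.1) X * cQ t.2 Y) else 0.
pose Ek (t : IT) : 'M_(#|BQ|, #|BP|) :=
  if HH t.2 then mk BQ BP (fun Y X => cQ t.2 Y * cP t.2 (enum_val t.1) X / (Nq t.2 * Kc)) else 0.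
exists #|[set: IT]|; split.
  have g0 : (0 < #|gT|)%N by apply/card_gt0P; exists 1%g.
  by rewrite cardsT !card_prod card_ord !muln_gt0 BP0 g0.
exists (fun i => Fk (enum_val i)), (fun i => Ek (enum_val i)).
split; [|split].
- move=> i x hx; rewrite /Fk /Ek; case: ifP => ha; last by split; rewrite mulmx0 mul0mx.
  split.
    rewrite pmx_mull => [|X hX]; last exact: hlP.
    rewrite (@pmx_mulr _ _ BQ BP (lQ x) (lQ x^-1)) => [|Y hY|Y Z]; [|exact: hlQ (groupVr hx) hY|exact: l_eq].
    apply: mk_eq => X Y hX hY.
    by rewrite cP_l // cQ_l ?groupV // Hinv // mulrCA mulrA.
  rewrite pmx_mull => [|X hX]; last exact: hlQ.
  rewrite (@pmx_mulr _ _ BP BQ (lP x) (lP x^-1)) => [|Y hY|Y Z]; [|exact: hlP (groupVr hx) hY|exact: l_eq].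
  apply: mk_eq => X Y hX hY.
  rewrite cQ_l // cP_l ?groupV // Hinv //; congr (_ * _).
  by rewrite mulrCA mulrA.
- move=> i y hy; rewrite /Fk /Ek; case: ifP => ha; last by split; rewrite mulmx0 mul0mx.
  split.
    rewrite pmx_mull => [|X hX]; last exact: hrP.
    rewrite (@pmx_mulr _ _ BQ BP (rQ y) (rQ y^-1)) => [|Y hY|Y Z]; [|exact: hrQ (groupVr hy) hY|exact: r_eq].
    apply: mk_eq => X Y hX hY.
    by rewrite cP_r // cQ_r ?groupV // Hinv // mulrCA mulrA.
  rewrite pmx_mull => [|X hX]; last exact: hrQ.
  rewrite (@pmx_mulr _ _ BP BQ (rP y) (rP y^-1)) => [|Y hY|Y Z]; [|exact: hrP (groupVr hy) hY|exact: r_eq].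
  apply: mk_eq => X Y hX hY.
  rewrite cQ_r // cP_r ?groupV // Hinv //; congr (_ * _).
  by rewrite mulrCA mulrA.
have e t : Fk t *m Ek t = mk BP BP (fun X X' =>
    if HH t.2 then cP t.2 (enum_val t.1) X * cP t.2 (enum_val t.1) X' / Kc else 0).
  rewrite /Fk /Ek; case: ifP => ha.
    rewrite mk_mul; apply: mk_eq => X X' _ _.
    set p := cP _ _ X; set p' := cP _ _ X'.
    have hN := Nq_neq0 ha.
    have e4 Y : (p * cQ t.2 Y) * (cQ t.2 Y * p' / (Nq t.2 * Kc)) =
       (p * p' / (Nq t.2 * Kc)) * (cQ t.2 Y * cQ t.2 Y).
      by ring.
    under eq_bigr => Y _ do rewrite e4.
    rewrite -mulr_sumr -/(Nq t.2).
    by field; rewrite hN pnatr_eq0 -lt0n cardG_gt0.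
  by rewrite mulmx0; apply/matrixP => i j; rewrite !mxE.
rewrite (sum_ev2 _ (fun t => Fk t *m Ek t)).
rewrite (eq_bigl xpredT) => [|t]; last by rewrite in_setT.
rewrite (eq_bigr _ (fun t _ => e t)) mk_sum -mk1; apply: mk_eq => X X' hX hX'.
rewrite -(pair_bigA _ (fun k a => if HH a then cP a (enum_val k) X * cP a (enum_val k) X' / Kc else 0)) /=.
under eq_bigr => k _ do rewrite -big_mkcond /= -mulr_suml.
by rewrite -mulr_suml core // mulrC mulKf // Kc_neq0.
Qed.

End Pos.

Section Neg.
Local Open Scope ring_scope.
Variable gT : finGroupType.

Lemma no_summand (A B : {set gT}) p q (PL PR : gT -> 'M[algC]_p) (QL QR : gT -> 'M[algC]_q)
    (c : gT -> gT -> algC) :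
  \sum_(x in A) \sum_(y in B) c x y *: (QL x *m QR y) = 0 ->
  \sum_(x in A) \sum_(y in B) c x y *: (PL x *m PR y) != 0 ->
  ~ bimod_summand A B PL PR QL QR.
Proof.
move=> hQ hP [k [_ [F [E [hl [hr hs]]]]]].
set MP := \sum_(x in A) _ in hP; set MQ := \sum_(x in A) _ in hQ.
have hF i : MP *m F i = F i *m MQ.
  rewrite /MP /MQ mulmx_suml mulmx_sumr; apply: eq_bigr => x hx.
  rewrite mulmx_suml mulmx_sumr; apply: eq_bigr => y hy.
  rewrite -scalemxAl -scalemxAr; congr (_ *: _).
  by rewrite -mulmxA (hr i y hy).1 mulmxA (hl i x hx).1 -mulmxA.
move/eqP: hP; apply; rewrite -[MP]mulmx1 -hs mulmx_sumr big1 // => i _.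
by rewrite mulmxA hF -mulmxA hQ mul0mx mulmx0.
Qed.

Lemma Mform (T : finType) (B : {set {set T}}) (A1 A2 : {set gT}) (l r : gT -> {set T} -> {set T})
    (c : gT -> gT -> algC) :
  (forall x X, x \in A1 -> X \in B -> l x X \in B) ->
  \sum_(x in A1) \sum_(y in A2) c x y *: (pmx B (l x) *m pmx B (r y)) =
  mk B B (fun X Z => \sum_(x in A1) \sum_(y in A2) c x y * (r y (l x X) == Z)%:R).
Proof.
move=> hl.
have e x : x \in A1 -> \sum_(y in A2) c x y *: (pmx B (l x) *m pmx B (r y)) =
    mk B B (fun X Z => \sum_(y in A2) c x y * (r y (l x X) == Z)%:R).
  move=> hx; rewrite -mk_sum; apply: eq_bigr => y _.
  by rewrite pmx_mull ?mk_scale // => X; apply: hl.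
by rewrite (eq_bigr _ e) mk_sum.
Qed.

Lemma mk0 (T1 T2 : finType) (B1 : {set {set T1}}) (B2 : {set {set T2}}) phi :
  (forall X Y, X \in B1 -> Y \in B2 -> phi X Y = 0) -> mk B1 B2 phi = 0.
Proof. by move=> h; apply/matrixP => i j; rewrite !mxE h // enum_valP. Qed.

Lemma mk_neq0 (T : finType) (B : {set {set T}}) phi X0 :
  X0 \in B -> phi X0 X0 != 0 -> mk B B phi != 0.
Proof.
move=> hX hne; apply/eqP => /matrixP /(_ (enum_rank_in hX X0) (enum_rank_in hX X0)).
by rewrite !mxE enum_rankK_in // => e; move: hne; rewrite e eqxx.
Qed.

Lemma sum_eq1 (T : finType) (A : {pred T}) x0 :
  x0 \in A -> \sum_(x in A) ((x == x0)%:R : algC) = 1.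
Proof.
move=> h; rewrite (bigD1 x0) //= eqxx big1 ?addr0 // => x /andP [_ ne].
by rewrite (negbTE ne).
Qed.

Local Open Scope group_scope.
Lemma rel1 (H : {group gT}) (s t : 1.-tuple gT) : tens_rel H s t = (t == s).
Proof.
apply/existsP/eqP => [[h /andP [_ /forallP hf]]|->].
  apply: eq_from_tnth => i; rewrite (ord1 i); move/eqP: (hf ord0) => /= ->.
  rewrite invg1 mul1g; case: h {hf} => [[|? ?] hh] //=; first by rewrite mulg1.
exists [tuple]; rewrite /=; apply/forallP => i; rewrite (ord1 i) /=.
by rewrite invg1 mul1g ?mulg1.
Qed.

Lemma cls1 (H : {group gT}) (s : 1.-tuple gT) : cls H s = [set s].
Proof. by apply/setP => t; rewrite !inE rel1. Qed.

Lemma lact1t (x g : gT) : lact x [tuple g] = [tuple x * g].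
Proof. by apply: eq_from_tnth => i; rewrite (ord1 i) tnth_mktuple. Qed.
Lemma ract1t (y g : gT) : Defs.ract y [tuple g] = [tuple g * y].
Proof. by apply: eq_from_tnth => i; rewrite (ord1 i) tnth_mktuple. Qed.

Lemma act1 (x y g : gT) :
  sr y (sl x [set [tuple g]]) = [set [tuple x * g * y]].
Proof. by rewrite /sl /sr !imset_set1 lact1t ract1t. Qed.

Lemma set1t_eq (a b : gT) : ([set [tuple a]] == [set [tuple b]]) = (a == b).
Proof.
apply/eqP/eqP => [e|->] //.
have : [tuple a] \in [set [tuple b]] by rewrite -e set11.
by move/set1P/(congr1 (fun t => tnth t ord0)).
Qed.

Lemma basis1P (G H : {group gT}) (X : {set 1.-tuple gT}) :
  X \in tens_basis G H 1 -> exists2 g, g \in G & X = [set [tuple g]].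
Proof.
case/tens_basisP => s hs ->; exists (tnth s ord0).
  by move/all_tnthP: hs; apply.
rewrite cls1; congr [set _]; apply: eq_from_tnth => i; by rewrite (ord1 i).
Qed.

Lemma basis1_mem (G H : {group gT}) g : g \in G -> [set [tuple g]] \in tens_basis G H 1.
Proof.
move=> hg; apply/tens_basisP; exists [tuple g]; last by rewrite cls1.
by rewrite /= hg.
Qed.

Lemma rel2P (H : {group gT}) (s t : 2.-tuple gT) :
  reflect (exists2 h, h \in H & tnth t ord0 = tnth s ord0 * h /\ tnth t (lift ord0 ord0) = h^-1 * tnth s (lift ord0 ord0))
          (tens_rel H s t).
Proof.
apply: (iffP existsP) => [[h /andP [hH /forallP hf]]|[h hH [e0 e1]]].
  exists (nth 1 h 0); first by move/allP: hH; apply; rewrite mem_nth // size_tuple.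
  split; first by rewrite (eqP (hf ord0)) /= invg1 mul1g.
  rewrite (eqP (hf (lift ord0 ord0))) /=.
  case: h {hf hH} => [[|h0 [|? ?]] hh] //=; by rewrite mulg1.
exists [tuple h]; rewrite /= hH /=; apply/forallP => i.
case: i => [[|[|k]] ki] //=.
  by rewrite invg1 mul1g (_ : Ordinal ki = ord0) ?e0 //; apply: val_inj.
by rewrite mulg1 (_ : Ordinal ki = lift ord0 ord0) ?e1 //; apply: val_inj.
Qed.

Definition t2 (a b : gT) : 2.-tuple gT := [tuple a; b].

Lemma t2E (s : 2.-tuple gT) : s = t2 (tnth s ord0) (tnth s (lift ord0 ord0)).
Proof.
apply: eq_from_tnth => i; case: i => [[|[|k]] ki] //=.
  by congr tnth; apply: val_inj.
by congr tnth; apply: val_inj.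
Qed.

Lemma rel2E (H : {group gT}) a b c e :
  tens_rel H (t2 a b) (t2 c e) = [exists h in H, (c == a * h) && (e == h^-1 * b)].
Proof.
apply/idP/existsP => [/rel2P [h hH [e0 e1]]|[h /and3P [hH /eqP e0 /eqP e1]]].
  by exists h; rewrite hH /=; move: e0 e1; rewrite !(tnth_nth 1) /= => -> ->; rewrite !eqxx.
by apply/rel2P; exists h => //; rewrite !(tnth_nth 1) /=.
Qed.

Lemma cls2_eq (H : {group gT}) (s t : 2.-tuple gT) : (cls H s == cls H t) = tens_rel H s t.
Proof.
have refl (u : 2.-tuple gT) : tens_rel H u u by apply/rel2P; exists 1; rewrite ?group1 ?mulg1 ?invg1 ?mul1g.
have sym (u v : 2.-tuple gT) : tens_rel H u v -> tens_rel H v u.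
  case/rel2P => h hH [e0 e1]; apply/rel2P; exists h^-1; rewrite ?groupV //.
  by rewrite e0 e1 invgK mulgK mulKVg.
have trans (u v w : 2.-tuple gT) : tens_rel H u v -> tens_rel H v w -> tens_rel H u w.
  case/rel2P => h hH [e0 e1] /rel2P [h' hH' [e0' e1']]; apply/rel2P; exists (h * h'); rewrite ?groupM //.
  by rewrite e0' e0 e1' e1 invMg !mulgA.
apply/eqP/idP => [e|r].
  have : t \in cls H s by rewrite e inE refl.
  by rewrite inE.
apply/setP => u; rewrite !inE; apply/idP/idP => hu; first exact: trans (sym _ _ r) hu.
exact: trans r hu.
Qed.

Lemma lact2 x a b : lact x (t2 a b) = t2 (x * a) b.
Proof. by apply: eq_from_tnth => i; rewrite tnth_mktuple; case: i => [[|[|k]] ki]. Qed.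
Lemma ract2 y a b : Defs.ract y (t2 a b) = t2 a (b * y).
Proof. by apply: eq_from_tnth => i; rewrite tnth_mktuple; case: i => [[|[|k]] ki]. Qed.

Lemma act2 (H : {group gT}) x y a b : sr y (sl x (cls H (t2 a b))) = cls H (t2 (x * a) (b * y)).
Proof. by rewrite /sl /sr cls_lact lact2 cls_ract ract2. Qed.

Lemma basis2_mem (G H : {group gT}) a b : a \in G -> b \in G -> cls H (t2 a b) \in tens_basis G H 2.
Proof. by move=> ha hb; apply/tens_basisP; exists (t2 a b) => //=; rewrite ha hb. Qed.

End Neg.
Definition Ltab : seq (seq nat) := [:: [:: 0; 1; 2; 3; 4; 5; 6; 7; 8; 9; 10; 11; 12; 13; 14; 15];
 [:: 0; 1; 2; 3; 4; 5; 6; 7; 9; 8; 11; 10; 13; 12; 15; 14];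
 [:: 0; 1; 2; 3; 5; 4; 7; 6; 8; 9; 10; 11; 13; 12; 15; 14];
 [:: 0; 1; 2; 3; 5; 4; 7; 6; 9; 8; 11; 10; 12; 13; 14; 15];
 [:: 0; 1; 3; 2; 4; 5; 7; 6; 8; 9; 11; 10; 13; 12; 14; 15];
 [:: 0; 1; 3; 2; 4; 5; 7; 6; 9; 8; 10; 11; 12; 13; 15; 14];
 [:: 0; 1; 3; 2; 5; 4; 6; 7; 8; 9; 11; 10; 12; 13; 15; 14];
 [:: 0; 1; 3; 2; 5; 4; 6; 7; 9; 8; 10; 11; 13; 12; 14; 15];
 [:: 1; 0; 2; 3; 4; 5; 7; 6; 8; 9; 11; 10; 12; 13; 15; 14];
 [:: 1; 0; 2; 3; 4; 5; 7; 6; 9; 8; 10; 11; 13; 12; 14; 15];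
 [:: 1; 0; 2; 3; 5; 4; 6; 7; 8; 9; 11; 10; 13; 12; 14; 15];
 [:: 1; 0; 2; 3; 5; 4; 6; 7; 9; 8; 10; 11; 12; 13; 15; 14];
 [:: 1; 0; 3; 2; 4; 5; 6; 7; 8; 9; 10; 11; 13; 12; 15; 14];
 [:: 1; 0; 3; 2; 4; 5; 6; 7; 9; 8; 11; 10; 12; 13; 14; 15];
 [:: 1; 0; 3; 2; 5; 4; 7; 6; 8; 9; 10; 11; 12; 13; 14; 15];
 [:: 1; 0; 3; 2; 5; 4; 7; 6; 9; 8; 11; 10; 13; 12; 15; 14];
 [:: 2; 3; 0; 1; 6; 7; 4; 5; 10; 11; 8; 9; 15; 14; 13; 12];
 [:: 2; 3; 0; 1; 6; 7; 4; 5; 11; 10; 9; 8; 14; 15; 12; 13];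
 [:: 2; 3; 0; 1; 7; 6; 5; 4; 10; 11; 8; 9; 14; 15; 12; 13];
 [:: 2; 3; 0; 1; 7; 6; 5; 4; 11; 10; 9; 8; 15; 14; 13; 12];
 [:: 2; 3; 1; 0; 6; 7; 5; 4; 10; 11; 9; 8; 14; 15; 13; 12];
 [:: 2; 3; 1; 0; 6; 7; 5; 4; 11; 10; 8; 9; 15; 14; 12; 13];
 [:: 2; 3; 1; 0; 7; 6; 4; 5; 10; 11; 9; 8; 15; 14; 12; 13];
 [:: 2; 3; 1; 0; 7; 6; 4; 5; 11; 10; 8; 9; 14; 15; 13; 12];
 [:: 3; 2; 0; 1; 6; 7; 5; 4; 10; 11; 9; 8; 15; 14; 12; 13];
 [:: 3; 2; 0; 1; 6; 7; 5; 4; 11; 10; 8; 9; 14; 15; 13; 12];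
 [:: 3; 2; 0; 1; 7; 6; 4; 5; 10; 11; 9; 8; 14; 15; 13; 12];
 [:: 3; 2; 0; 1; 7; 6; 4; 5; 11; 10; 8; 9; 15; 14; 12; 13];
 [:: 3; 2; 1; 0; 6; 7; 4; 5; 10; 11; 8; 9; 14; 15; 12; 13];
 [:: 3; 2; 1; 0; 6; 7; 4; 5; 11; 10; 9; 8; 15; 14; 13; 12];
 [:: 3; 2; 1; 0; 7; 6; 5; 4; 10; 11; 8; 9; 15; 14; 13; 12];
 [:: 3; 2; 1; 0; 7; 6; 5; 4; 11; 10; 9; 8; 14; 15; 12; 13];
 [:: 4; 5; 6; 7; 0; 1; 2; 3; 12; 13; 14; 15; 8; 9; 10; 11];
 [:: 4; 5; 6; 7; 0; 1; 2; 3; 13; 12; 15; 14; 9; 8; 11; 10];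
 [:: 4; 5; 6; 7; 1; 0; 3; 2; 12; 13; 14; 15; 9; 8; 11; 10];
 [:: 4; 5; 6; 7; 1; 0; 3; 2; 13; 12; 15; 14; 8; 9; 10; 11];
 [:: 4; 5; 7; 6; 0; 1; 3; 2; 12; 13; 15; 14; 9; 8; 10; 11];
 [:: 4; 5; 7; 6; 0; 1; 3; 2; 13; 12; 14; 15; 8; 9; 11; 10];
 [:: 4; 5; 7; 6; 1; 0; 2; 3; 12; 13; 15; 14; 8; 9; 11; 10];
 [:: 4; 5; 7; 6; 1; 0; 2; 3; 13; 12; 14; 15; 9; 8; 10; 11];
 [:: 5; 4; 6; 7; 0; 1; 3; 2; 12; 13; 15; 14; 8; 9; 11; 10];
 [:: 5; 4; 6; 7; 0; 1; 3; 2; 13; 12; 14; 15; 9; 8; 10; 11];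
 [:: 5; 4; 6; 7; 1; 0; 2; 3; 12; 13; 15; 14; 9; 8; 10; 11];
 [:: 5; 4; 6; 7; 1; 0; 2; 3; 13; 12; 14; 15; 8; 9; 11; 10];
 [:: 5; 4; 7; 6; 0; 1; 2; 3; 12; 13; 14; 15; 9; 8; 11; 10];
 [:: 5; 4; 7; 6; 0; 1; 2; 3; 13; 12; 15; 14; 8; 9; 10; 11];
 [:: 5; 4; 7; 6; 1; 0; 3; 2; 12; 13; 14; 15; 8; 9; 10; 11];
 [:: 5; 4; 7; 6; 1; 0; 3; 2; 13; 12; 15; 14; 9; 8; 11; 10];
 [:: 6; 7; 4; 5; 2; 3; 0; 1; 14; 15; 12; 13; 11; 10; 9; 8];
 [:: 6; 7; 4; 5; 2; 3; 0; 1; 15; 14; 13; 12; 10; 11; 8; 9];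
 [:: 6; 7; 4; 5; 3; 2; 1; 0; 14; 15; 12; 13; 10; 11; 8; 9];
 [:: 6; 7; 4; 5; 3; 2; 1; 0; 15; 14; 13; 12; 11; 10; 9; 8];
 [:: 6; 7; 5; 4; 2; 3; 1; 0; 14; 15; 13; 12; 10; 11; 9; 8];
 [:: 6; 7; 5; 4; 2; 3; 1; 0; 15; 14; 12; 13; 11; 10; 8; 9];
 [:: 6; 7; 5; 4; 3; 2; 0; 1; 14; 15; 13; 12; 11; 10; 8; 9];
 [:: 6; 7; 5; 4; 3; 2; 0; 1; 15; 14; 12; 13; 10; 11; 9; 8];
 [:: 7; 6; 4; 5; 2; 3; 1; 0; 14; 15; 13; 12; 11; 10; 8; 9];
 [:: 7; 6; 4; 5; 2; 3; 1; 0; 15; 14; 12; 13; 10; 11; 9; 8];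
 [:: 7; 6; 4; 5; 3; 2; 0; 1; 14; 15; 13; 12; 10; 11; 9; 8];
 [:: 7; 6; 4; 5; 3; 2; 0; 1; 15; 14; 12; 13; 11; 10; 8; 9];
 [:: 7; 6; 5; 4; 2; 3; 0; 1; 14; 15; 12; 13; 10; 11; 8; 9];
 [:: 7; 6; 5; 4; 2; 3; 0; 1; 15; 14; 13; 12; 11; 10; 9; 8];
 [:: 7; 6; 5; 4; 3; 2; 1; 0; 14; 15; 12; 13; 11; 10; 9; 8];
 [:: 7; 6; 5; 4; 3; 2; 1; 0; 15; 14; 13; 12; 10; 11; 8; 9];
 [:: 8; 9; 10; 11; 12; 13; 14; 15; 6; 7; 5; 4; 3; 2; 0; 1];
 [:: 8; 9; 10; 11; 12; 13; 14; 15; 7; 6; 4; 5; 2; 3; 1; 0];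
 [:: 8; 9; 10; 11; 13; 12; 15; 14; 6; 7; 5; 4; 2; 3; 1; 0];
 [:: 8; 9; 10; 11; 13; 12; 15; 14; 7; 6; 4; 5; 3; 2; 0; 1];
 [:: 8; 9; 11; 10; 12; 13; 15; 14; 6; 7; 4; 5; 2; 3; 0; 1];
 [:: 8; 9; 11; 10; 12; 13; 15; 14; 7; 6; 5; 4; 3; 2; 1; 0];
 [:: 8; 9; 11; 10; 13; 12; 14; 15; 6; 7; 4; 5; 3; 2; 1; 0];
 [:: 8; 9; 11; 10; 13; 12; 14; 15; 7; 6; 5; 4; 2; 3; 0; 1];
 [:: 9; 8; 10; 11; 12; 13; 15; 14; 6; 7; 4; 5; 3; 2; 1; 0];
 [:: 9; 8; 10; 11; 12; 13; 15; 14; 7; 6; 5; 4; 2; 3; 0; 1];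
 [:: 9; 8; 10; 11; 13; 12; 14; 15; 6; 7; 4; 5; 2; 3; 0; 1];
 [:: 9; 8; 10; 11; 13; 12; 14; 15; 7; 6; 5; 4; 3; 2; 1; 0];
 [:: 9; 8; 11; 10; 12; 13; 14; 15; 6; 7; 5; 4; 2; 3; 1; 0];
 [:: 9; 8; 11; 10; 12; 13; 14; 15; 7; 6; 4; 5; 3; 2; 0; 1];
 [:: 9; 8; 11; 10; 13; 12; 15; 14; 6; 7; 5; 4; 3; 2; 0; 1];
 [:: 9; 8; 11; 10; 13; 12; 15; 14; 7; 6; 4; 5; 2; 3; 1; 0];
 [:: 10; 11; 8; 9; 14; 15; 12; 13; 4; 5; 7; 6; 0; 1; 3; 2];
 [:: 10; 11; 8; 9; 14; 15; 12; 13; 5; 4; 6; 7; 1; 0; 2; 3];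
 [:: 10; 11; 8; 9; 15; 14; 13; 12; 4; 5; 7; 6; 1; 0; 2; 3];
 [:: 10; 11; 8; 9; 15; 14; 13; 12; 5; 4; 6; 7; 0; 1; 3; 2];
 [:: 10; 11; 9; 8; 14; 15; 13; 12; 4; 5; 6; 7; 1; 0; 3; 2];
 [:: 10; 11; 9; 8; 14; 15; 13; 12; 5; 4; 7; 6; 0; 1; 2; 3];
 [:: 10; 11; 9; 8; 15; 14; 12; 13; 4; 5; 6; 7; 0; 1; 2; 3];
 [:: 10; 11; 9; 8; 15; 14; 12; 13; 5; 4; 7; 6; 1; 0; 3; 2];
 [:: 11; 10; 8; 9; 14; 15; 13; 12; 4; 5; 6; 7; 0; 1; 2; 3];
 [:: 11; 10; 8; 9; 14; 15; 13; 12; 5; 4; 7; 6; 1; 0; 3; 2];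
 [:: 11; 10; 8; 9; 15; 14; 12; 13; 4; 5; 6; 7; 1; 0; 3; 2];
 [:: 11; 10; 8; 9; 15; 14; 12; 13; 5; 4; 7; 6; 0; 1; 2; 3];
 [:: 11; 10; 9; 8; 14; 15; 12; 13; 4; 5; 7; 6; 1; 0; 2; 3];
 [:: 11; 10; 9; 8; 14; 15; 12; 13; 5; 4; 6; 7; 0; 1; 3; 2];
 [:: 11; 10; 9; 8; 15; 14; 13; 12; 4; 5; 7; 6; 0; 1; 3; 2];
 [:: 11; 10; 9; 8; 15; 14; 13; 12; 5; 4; 6; 7; 1; 0; 2; 3];
 [:: 12; 13; 14; 15; 8; 9; 10; 11; 2; 3; 1; 0; 7; 6; 4; 5];
 [:: 12; 13; 14; 15; 8; 9; 10; 11; 3; 2; 0; 1; 6; 7; 5; 4];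
 [:: 12; 13; 14; 15; 9; 8; 11; 10; 2; 3; 1; 0; 6; 7; 5; 4];
 [:: 12; 13; 14; 15; 9; 8; 11; 10; 3; 2; 0; 1; 7; 6; 4; 5];
 [:: 12; 13; 15; 14; 8; 9; 11; 10; 2; 3; 0; 1; 6; 7; 4; 5];
 [:: 12; 13; 15; 14; 8; 9; 11; 10; 3; 2; 1; 0; 7; 6; 5; 4];
 [:: 12; 13; 15; 14; 9; 8; 10; 11; 2; 3; 0; 1; 7; 6; 5; 4];
 [:: 12; 13; 15; 14; 9; 8; 10; 11; 3; 2; 1; 0; 6; 7; 4; 5];
 [:: 13; 12; 14; 15; 8; 9; 11; 10; 2; 3; 0; 1; 7; 6; 5; 4];
 [:: 13; 12; 14; 15; 8; 9; 11; 10; 3; 2; 1; 0; 6; 7; 4; 5];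
 [:: 13; 12; 14; 15; 9; 8; 10; 11; 2; 3; 0; 1; 6; 7; 4; 5];
 [:: 13; 12; 14; 15; 9; 8; 10; 11; 3; 2; 1; 0; 7; 6; 5; 4];
 [:: 13; 12; 15; 14; 8; 9; 10; 11; 2; 3; 1; 0; 6; 7; 5; 4];
 [:: 13; 12; 15; 14; 8; 9; 10; 11; 3; 2; 0; 1; 7; 6; 4; 5];
 [:: 13; 12; 15; 14; 9; 8; 11; 10; 2; 3; 1; 0; 7; 6; 4; 5];
 [:: 13; 12; 15; 14; 9; 8; 11; 10; 3; 2; 0; 1; 6; 7; 5; 4];
 [:: 14; 15; 12; 13; 10; 11; 8; 9; 0; 1; 3; 2; 4; 5; 7; 6];
 [:: 14; 15; 12; 13; 10; 11; 8; 9; 1; 0; 2; 3; 5; 4; 6; 7];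
 [:: 14; 15; 12; 13; 11; 10; 9; 8; 0; 1; 3; 2; 5; 4; 6; 7];
 [:: 14; 15; 12; 13; 11; 10; 9; 8; 1; 0; 2; 3; 4; 5; 7; 6];
 [:: 14; 15; 13; 12; 10; 11; 9; 8; 0; 1; 2; 3; 5; 4; 7; 6];
 [:: 14; 15; 13; 12; 10; 11; 9; 8; 1; 0; 3; 2; 4; 5; 6; 7];
 [:: 14; 15; 13; 12; 11; 10; 8; 9; 0; 1; 2; 3; 4; 5; 6; 7];
 [:: 14; 15; 13; 12; 11; 10; 8; 9; 1; 0; 3; 2; 5; 4; 7; 6];
 [:: 15; 14; 12; 13; 10; 11; 9; 8; 0; 1; 2; 3; 4; 5; 6; 7];
 [:: 15; 14; 12; 13; 10; 11; 9; 8; 1; 0; 3; 2; 5; 4; 7; 6];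
 [:: 15; 14; 12; 13; 11; 10; 8; 9; 0; 1; 2; 3; 5; 4; 7; 6];
 [:: 15; 14; 12; 13; 11; 10; 8; 9; 1; 0; 3; 2; 4; 5; 6; 7];
 [:: 15; 14; 13; 12; 10; 11; 8; 9; 0; 1; 3; 2; 5; 4; 6; 7];
 [:: 15; 14; 13; 12; 10; 11; 8; 9; 1; 0; 2; 3; 4; 5; 7; 6];
 [:: 15; 14; 13; 12; 11; 10; 9; 8; 0; 1; 3; 2; 4; 5; 7; 6];
 [:: 15; 14; 13; 12; 11; 10; 9; 8; 1; 0; 2; 3; 5; 4; 6; 7]].
Definition Ttab : seq (seq nat) := [:: [:: 0; 1; 2; 3; 4; 5; 6; 7; 8; 9; 10; 11; 12; 13; 14; 15; 16; 17; 18; 19; 20; 21; 22; 23; 24; 25; 26; 27; 28; 29; 30; 31; 32; 33; 34; 35; 36; 37; 38; 39; 40; 41; 42; 43; 44; 45; 46; 47; 48; 49; 50; 51; 52; 53; 54; 55; 56; 57; 58; 59; 60; 61; 62; 63; 64; 65; 66; 67; 68; 69; 70; 71; 72; 73; 74; 75; 76; 77; 78; 79; 80; 81; 82; 83; 84; 85; 86; 87; 88; 89; 90; 91; 92; 93; 94; 95; 96; 97; 98; 99; 100; 101; 102; 103; 104; 105; 106; 107; 108; 109; 110; 111; 112; 113; 114; 115; 116; 117; 118; 119; 120; 121; 122; 123; 124; 125; 126; 127];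
 [:: 1; 0; 3; 2; 5; 4; 7; 6; 9; 8; 11; 10; 13; 12; 15; 14; 17; 16; 19; 18; 21; 20; 23; 22; 25; 24; 27; 26; 29; 28; 31; 30; 33; 32; 35; 34; 37; 36; 39; 38; 41; 40; 43; 42; 45; 44; 47; 46; 49; 48; 51; 50; 53; 52; 55; 54; 57; 56; 59; 58; 61; 60; 63; 62; 65; 64; 67; 66; 69; 68; 71; 70; 73; 72; 75; 74; 77; 76; 79; 78; 81; 80; 83; 82; 85; 84; 87; 86; 89; 88; 91; 90; 93; 92; 95; 94; 97; 96; 99; 98; 101; 100; 103; 102; 105; 104; 107; 106; 109; 108; 111; 110; 113; 112; 115; 114; 117; 116; 119; 118; 121; 120; 123; 122; 125; 124; 127; 126];
 [:: 2; 3; 0; 1; 6; 7; 4; 5; 10; 11; 8; 9; 14; 15; 12; 13; 18; 19; 16; 17; 22; 23; 20; 21; 26; 27; 24; 25; 30; 31; 28; 29; 34; 35; 32; 33; 38; 39; 36; 37; 42; 43; 40; 41; 46; 47; 44; 45; 50; 51; 48; 49; 54; 55; 52; 53; 58; 59; 56; 57; 62; 63; 60; 61; 66; 67; 64; 65; 70; 71; 68; 69; 74; 75; 72; 73; 78; 79; 76; 77; 82; 83; 80; 81; 86; 87; 84; 85; 90; 91; 88; 89; 94; 95; 92; 93; 98; 99; 96; 97; 102; 103; 100; 101; 106; 107; 104; 105; 110; 111; 108; 109; 114; 115; 112; 113; 118; 119; 116; 117; 122; 123; 120; 121; 126; 127; 124; 125];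
 [:: 3; 2; 1; 0; 7; 6; 5; 4; 11; 10; 9; 8; 15; 14; 13; 12; 19; 18; 17; 16; 23; 22; 21; 20; 27; 26; 25; 24; 31; 30; 29; 28; 35; 34; 33; 32; 39; 38; 37; 36; 43; 42; 41; 40; 47; 46; 45; 44; 51; 50; 49; 48; 55; 54; 53; 52; 59; 58; 57; 56; 63; 62; 61; 60; 67; 66; 65; 64; 71; 70; 69; 68; 75; 74; 73; 72; 79; 78; 77; 76; 83; 82; 81; 80; 87; 86; 85; 84; 91; 90; 89; 88; 95; 94; 93; 92; 99; 98; 97; 96; 103; 102; 101; 100; 107; 106; 105; 104; 111; 110; 109; 108; 115; 114; 113; 112; 119; 118; 117; 116; 123; 122; 121; 120; 127; 126; 125; 124];
 [:: 4; 5; 6; 7; 0; 1; 2; 3; 12; 13; 14; 15; 8; 9; 10; 11; 20; 21; 22; 23; 16; 17; 18; 19; 28; 29; 30; 31; 24; 25; 26; 27; 36; 37; 38; 39; 32; 33; 34; 35; 44; 45; 46; 47; 40; 41; 42; 43; 52; 53; 54; 55; 48; 49; 50; 51; 60; 61; 62; 63; 56; 57; 58; 59; 68; 69; 70; 71; 64; 65; 66; 67; 76; 77; 78; 79; 72; 73; 74; 75; 84; 85; 86; 87; 80; 81; 82; 83; 92; 93; 94; 95; 88; 89; 90; 91; 100; 101; 102; 103; 96; 97; 98; 99; 108; 109; 110; 111; 104; 105; 106; 107; 116; 117; 118; 119; 112; 113; 114; 115; 124; 125; 126; 127; 120; 121; 122; 123];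
 [:: 5; 4; 7; 6; 1; 0; 3; 2; 13; 12; 15; 14; 9; 8; 11; 10; 21; 20; 23; 22; 17; 16; 19; 18; 29; 28; 31; 30; 25; 24; 27; 26; 37; 36; 39; 38; 33; 32; 35; 34; 45; 44; 47; 46; 41; 40; 43; 42; 53; 52; 55; 54; 49; 48; 51; 50; 61; 60; 63; 62; 57; 56; 59; 58; 69; 68; 71; 70; 65; 64; 67; 66; 77; 76; 79; 78; 73; 72; 75; 74; 85; 84; 87; 86; 81; 80; 83; 82; 93; 92; 95; 94; 89; 88; 91; 90; 101; 100; 103; 102; 97; 96; 99; 98; 109; 108; 111; 110; 105; 104; 107; 106; 117; 116; 119; 118; 113; 112; 115; 114; 125; 124; 127; 126; 121; 120; 123; 122];
 [:: 6; 7; 4; 5; 2; 3; 0; 1; 14; 15; 12; 13; 10; 11; 8; 9; 22; 23; 20; 21; 18; 19; 16; 17; 30; 31; 28; 29; 26; 27; 24; 25; 38; 39; 36; 37; 34; 35; 32; 33; 46; 47; 44; 45; 42; 43; 40; 41; 54; 55; 52; 53; 50; 51; 48; 49; 62; 63; 60; 61; 58; 59; 56; 57; 70; 71; 68; 69; 66; 67; 64; 65; 78; 79; 76; 77; 74; 75; 72; 73; 86; 87; 84; 85; 82; 83; 80; 81; 94; 95; 92; 93; 90; 91; 88; 89; 102; 103; 100; 101; 98; 99; 96; 97; 110; 111; 108; 109; 106; 107; 104; 105; 118; 119; 116; 117; 114; 115; 112; 113; 126; 127; 124; 125; 122; 123; 120; 121];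
 [:: 7; 6; 5; 4; 3; 2; 1; 0; 15; 14; 13; 12; 11; 10; 9; 8; 23; 22; 21; 20; 19; 18; 17; 16; 31; 30; 29; 28; 27; 26; 25; 24; 39; 38; 37; 36; 35; 34; 33; 32; 47; 46; 45; 44; 43; 42; 41; 40; 55; 54; 53; 52; 51; 50; 49; 48; 63; 62; 61; 60; 59; 58; 57; 56; 71; 70; 69; 68; 67; 66; 65; 64; 79; 78; 77; 76; 75; 74; 73; 72; 87; 86; 85; 84; 83; 82; 81; 80; 95; 94; 93; 92; 91; 90; 89; 88; 103; 102; 101; 100; 99; 98; 97; 96; 111; 110; 109; 108; 107; 106; 105; 104; 119; 118; 117; 116; 115; 114; 113; 112; 127; 126; 125; 124; 123; 122; 121; 120];
 [:: 8; 9; 10; 11; 12; 13; 14; 15; 0; 1; 2; 3; 4; 5; 6; 7; 24; 25; 26; 27; 28; 29; 30; 31; 16; 17; 18; 19; 20; 21; 22; 23; 40; 41; 42; 43; 44; 45; 46; 47; 32; 33; 34; 35; 36; 37; 38; 39; 56; 57; 58; 59; 60; 61; 62; 63; 48; 49; 50; 51; 52; 53; 54; 55; 72; 73; 74; 75; 76; 77; 78; 79; 64; 65; 66; 67; 68; 69; 70; 71; 88; 89; 90; 91; 92; 93; 94; 95; 80; 81; 82; 83; 84; 85; 86; 87; 104; 105; 106; 107; 108; 109; 110; 111; 96; 97; 98; 99; 100; 101; 102; 103; 120; 121; 122; 123; 124; 125; 126; 127; 112; 113; 114; 115; 116; 117; 118; 119];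
 [:: 9; 8; 11; 10; 13; 12; 15; 14; 1; 0; 3; 2; 5; 4; 7; 6; 25; 24; 27; 26; 29; 28; 31; 30; 17; 16; 19; 18; 21; 20; 23; 22; 41; 40; 43; 42; 45; 44; 47; 46; 33; 32; 35; 34; 37; 36; 39; 38; 57; 56; 59; 58; 61; 60; 63; 62; 49; 48; 51; 50; 53; 52; 55; 54; 73; 72; 75; 74; 77; 76; 79; 78; 65; 64; 67; 66; 69; 68; 71; 70; 89; 88; 91; 90; 93; 92; 95; 94; 81; 80; 83; 82; 85; 84; 87; 86; 105; 104; 107; 106; 109; 108; 111; 110; 97; 96; 99; 98; 101; 100; 103; 102; 121; 120; 123; 122; 125; 124; 127; 126; 113; 112; 115; 114; 117; 116; 119; 118];
 [:: 10; 11; 8; 9; 14; 15; 12; 13; 2; 3; 0; 1; 6; 7; 4; 5; 26; 27; 24; 25; 30; 31; 28; 29; 18; 19; 16; 17; 22; 23; 20; 21; 42; 43; 40; 41; 46; 47; 44; 45; 34; 35; 32; 33; 38; 39; 36; 37; 58; 59; 56; 57; 62; 63; 60; 61; 50; 51; 48; 49; 54; 55; 52; 53; 74; 75; 72; 73; 78; 79; 76; 77; 66; 67; 64; 65; 70; 71; 68; 69; 90; 91; 88; 89; 94; 95; 92; 93; 82; 83; 80; 81; 86; 87; 84; 85; 106; 107; 104; 105; 110; 111; 108; 109; 98; 99; 96; 97; 102; 103; 100; 101; 122; 123; 120; 121; 126; 127; 124; 125; 114; 115; 112; 113; 118; 119; 116; 117];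
 [:: 11; 10; 9; 8; 15; 14; 13; 12; 3; 2; 1; 0; 7; 6; 5; 4; 27; 26; 25; 24; 31; 30; 29; 28; 19; 18; 17; 16; 23; 22; 21; 20; 43; 42; 41; 40; 47; 46; 45; 44; 35; 34; 33; 32; 39; 38; 37; 36; 59; 58; 57; 56; 63; 62; 61; 60; 51; 50; 49; 48; 55; 54; 53; 52; 75; 74; 73; 72; 79; 78; 77; 76; 67; 66; 65; 64; 71; 70; 69; 68; 91; 90; 89; 88; 95; 94; 93; 92; 83; 82; 81; 80; 87; 86; 85; 84; 107; 106; 105; 104; 111; 110; 109; 108; 99; 98; 97; 96; 103; 102; 101; 100; 123; 122; 121; 120; 127; 126; 125; 124; 115; 114; 113; 112; 119; 118; 117; 116];
 [:: 12; 13; 14; 15; 8; 9; 10; 11; 4; 5; 6; 7; 0; 1; 2; 3; 28; 29; 30; 31; 24; 25; 26; 27; 20; 21; 22; 23; 16; 17; 18; 19; 44; 45; 46; 47; 40; 41; 42; 43; 36; 37; 38; 39; 32; 33; 34; 35; 60; 61; 62; 63; 56; 57; 58; 59; 52; 53; 54; 55; 48; 49; 50; 51; 76; 77; 78; 79; 72; 73; 74; 75; 68; 69; 70; 71; 64; 65; 66; 67; 92; 93; 94; 95; 88; 89; 90; 91; 84; 85; 86; 87; 80; 81; 82; 83; 108; 109; 110; 111; 104; 105; 106; 107; 100; 101; 102; 103; 96; 97; 98; 99; 124; 125; 126; 127; 120; 121; 122; 123; 116; 117; 118; 119; 112; 113; 114; 115];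
 [:: 13; 12; 15; 14; 9; 8; 11; 10; 5; 4; 7; 6; 1; 0; 3; 2; 29; 28; 31; 30; 25; 24; 27; 26; 21; 20; 23; 22; 17; 16; 19; 18; 45; 44; 47; 46; 41; 40; 43; 42; 37; 36; 39; 38; 33; 32; 35; 34; 61; 60; 63; 62; 57; 56; 59; 58; 53; 52; 55; 54; 49; 48; 51; 50; 77; 76; 79; 78; 73; 72; 75; 74; 69; 68; 71; 70; 65; 64; 67; 66; 93; 92; 95; 94; 89; 88; 91; 90; 85; 84; 87; 86; 81; 80; 83; 82; 109; 108; 111; 110; 105; 104; 107; 106; 101; 100; 103; 102; 97; 96; 99; 98; 125; 124; 127; 126; 121; 120; 123; 122; 117; 116; 119; 118; 113; 112; 115; 114];
 [:: 14; 15; 12; 13; 10; 11; 8; 9; 6; 7; 4; 5; 2; 3; 0; 1; 30; 31; 28; 29; 26; 27; 24; 25; 22; 23; 20; 21; 18; 19; 16; 17; 46; 47; 44; 45; 42; 43; 40; 41; 38; 39; 36; 37; 34; 35; 32; 33; 62; 63; 60; 61; 58; 59; 56; 57; 54; 55; 52; 53; 50; 51; 48; 49; 78; 79; 76; 77; 74; 75; 72; 73; 70; 71; 68; 69; 66; 67; 64; 65; 94; 95; 92; 93; 90; 91; 88; 89; 86; 87; 84; 85; 82; 83; 80; 81; 110; 111; 108; 109; 106; 107; 104; 105; 102; 103; 100; 101; 98; 99; 96; 97; 126; 127; 124; 125; 122; 123; 120; 121; 118; 119; 116; 117; 114; 115; 112; 113];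
 [:: 15; 14; 13; 12; 11; 10; 9; 8; 7; 6; 5; 4; 3; 2; 1; 0; 31; 30; 29; 28; 27; 26; 25; 24; 23; 22; 21; 20; 19; 18; 17; 16; 47; 46; 45; 44; 43; 42; 41; 40; 39; 38; 37; 36; 35; 34; 33; 32; 63; 62; 61; 60; 59; 58; 57; 56; 55; 54; 53; 52; 51; 50; 49; 48; 79; 78; 77; 76; 75; 74; 73; 72; 71; 70; 69; 68; 67; 66; 65; 64; 95; 94; 93; 92; 91; 90; 89; 88; 87; 86; 85; 84; 83; 82; 81; 80; 111; 110; 109; 108; 107; 106; 105; 104; 103; 102; 101; 100; 99; 98; 97; 96; 127; 126; 125; 124; 123; 122; 121; 120; 119; 118; 117; 116; 115; 114; 113; 112];
 [:: 16; 17; 18; 19; 27; 26; 25; 24; 23; 22; 21; 20; 28; 29; 30; 31; 0; 1; 2; 3; 11; 10; 9; 8; 7; 6; 5; 4; 12; 13; 14; 15; 48; 49; 50; 51; 59; 58; 57; 56; 55; 54; 53; 52; 60; 61; 62; 63; 32; 33; 34; 35; 43; 42; 41; 40; 39; 38; 37; 36; 44; 45; 46; 47; 81; 80; 83; 82; 90; 91; 88; 89; 86; 87; 84; 85; 93; 92; 95; 94; 65; 64; 67; 66; 74; 75; 72; 73; 70; 71; 68; 69; 77; 76; 79; 78; 113; 112; 115; 114; 122; 123; 120; 121; 118; 119; 116; 117; 125; 124; 127; 126; 97; 96; 99; 98; 106; 107; 104; 105; 102; 103; 100; 101; 109; 108; 111; 110];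
 [:: 17; 16; 19; 18; 26; 27; 24; 25; 22; 23; 20; 21; 29; 28; 31; 30; 1; 0; 3; 2; 10; 11; 8; 9; 6; 7; 4; 5; 13; 12; 15; 14; 49; 48; 51; 50; 58; 59; 56; 57; 54; 55; 52; 53; 61; 60; 63; 62; 33; 32; 35; 34; 42; 43; 40; 41; 38; 39; 36; 37; 45; 44; 47; 46; 80; 81; 82; 83; 91; 90; 89; 88; 87; 86; 85; 84; 92; 93; 94; 95; 64; 65; 66; 67; 75; 74; 73; 72; 71; 70; 69; 68; 76; 77; 78; 79; 112; 113; 114; 115; 123; 122; 121; 120; 119; 118; 117; 116; 124; 125; 126; 127; 96; 97; 98; 99; 107; 106; 105; 104; 103; 102; 101; 100; 108; 109; 110; 111];
 [:: 18; 19; 16; 17; 25; 24; 27; 26; 21; 20; 23; 22; 30; 31; 28; 29; 2; 3; 0; 1; 9; 8; 11; 10; 5; 4; 7; 6; 14; 15; 12; 13; 50; 51; 48; 49; 57; 56; 59; 58; 53; 52; 55; 54; 62; 63; 60; 61; 34; 35; 32; 33; 41; 40; 43; 42; 37; 36; 39; 38; 46; 47; 44; 45; 83; 82; 81; 80; 88; 89; 90; 91; 84; 85; 86; 87; 95; 94; 93; 92; 67; 66; 65; 64; 72; 73; 74; 75; 68; 69; 70; 71; 79; 78; 77; 76; 115; 114; 113; 112; 120; 121; 122; 123; 116; 117; 118; 119; 127; 126; 125; 124; 99; 98; 97; 96; 104; 105; 106; 107; 100; 101; 102; 103; 111; 110; 109; 108];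
 [:: 19; 18; 17; 16; 24; 25; 26; 27; 20; 21; 22; 23; 31; 30; 29; 28; 3; 2; 1; 0; 8; 9; 10; 11; 4; 5; 6; 7; 15; 14; 13; 12; 51; 50; 49; 48; 56; 57; 58; 59; 52; 53; 54; 55; 63; 62; 61; 60; 35; 34; 33; 32; 40; 41; 42; 43; 36; 37; 38; 39; 47; 46; 45; 44; 82; 83; 80; 81; 89; 88; 91; 90; 85; 84; 87; 86; 94; 95; 92; 93; 66; 67; 64; 65; 73; 72; 75; 74; 69; 68; 71; 70; 78; 79; 76; 77; 114; 115; 112; 113; 121; 120; 123; 122; 117; 116; 119; 118; 126; 127; 124; 125; 98; 99; 96; 97; 105; 104; 107; 106; 101; 100; 103; 102; 110; 111; 108; 109];
 [:: 20; 21; 22; 23; 31; 30; 29; 28; 19; 18; 17; 16; 24; 25; 26; 27; 4; 5; 6; 7; 15; 14; 13; 12; 3; 2; 1; 0; 8; 9; 10; 11; 52; 53; 54; 55; 63; 62; 61; 60; 51; 50; 49; 48; 56; 57; 58; 59; 36; 37; 38; 39; 47; 46; 45; 44; 35; 34; 33; 32; 40; 41; 42; 43; 85; 84; 87; 86; 94; 95; 92; 93; 82; 83; 80; 81; 89; 88; 91; 90; 69; 68; 71; 70; 78; 79; 76; 77; 66; 67; 64; 65; 73; 72; 75; 74; 117; 116; 119; 118; 126; 127; 124; 125; 114; 115; 112; 113; 121; 120; 123; 122; 101; 100; 103; 102; 110; 111; 108; 109; 98; 99; 96; 97; 105; 104; 107; 106];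
 [:: 21; 20; 23; 22; 30; 31; 28; 29; 18; 19; 16; 17; 25; 24; 27; 26; 5; 4; 7; 6; 14; 15; 12; 13; 2; 3; 0; 1; 9; 8; 11; 10; 53; 52; 55; 54; 62; 63; 60; 61; 50; 51; 48; 49; 57; 56; 59; 58; 37; 36; 39; 38; 46; 47; 44; 45; 34; 35; 32; 33; 41; 40; 43; 42; 84; 85; 86; 87; 95; 94; 93; 92; 83; 82; 81; 80; 88; 89; 90; 91; 68; 69; 70; 71; 79; 78; 77; 76; 67; 66; 65; 64; 72; 73; 74; 75; 116; 117; 118; 119; 127; 126; 125; 124; 115; 114; 113; 112; 120; 121; 122; 123; 100; 101; 102; 103; 111; 110; 109; 108; 99; 98; 97; 96; 104; 105; 106; 107];
 [:: 22; 23; 20; 21; 29; 28; 31; 30; 17; 16; 19; 18; 26; 27; 24; 25; 6; 7; 4; 5; 13; 12; 15; 14; 1; 0; 3; 2; 10; 11; 8; 9; 54; 55; 52; 53; 61; 60; 63; 62; 49; 48; 51; 50; 58; 59; 56; 57; 38; 39; 36; 37; 45; 44; 47; 46; 33; 32; 35; 34; 42; 43; 40; 41; 87; 86; 85; 84; 92; 93; 94; 95; 80; 81; 82; 83; 91; 90; 89; 88; 71; 70; 69; 68; 76; 77; 78; 79; 64; 65; 66; 67; 75; 74; 73; 72; 119; 118; 117; 116; 124; 125; 126; 127; 112; 113; 114; 115; 123; 122; 121; 120; 103; 102; 101; 100; 108; 109; 110; 111; 96; 97; 98; 99; 107; 106; 105; 104];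
 [:: 23; 22; 21; 20; 28; 29; 30; 31; 16; 17; 18; 19; 27; 26; 25; 24; 7; 6; 5; 4; 12; 13; 14; 15; 0; 1; 2; 3; 11; 10; 9; 8; 55; 54; 53; 52; 60; 61; 62; 63; 48; 49; 50; 51; 59; 58; 57; 56; 39; 38; 37; 36; 44; 45; 46; 47; 32; 33; 34; 35; 43; 42; 41; 40; 86; 87; 84; 85; 93; 92; 95; 94; 81; 80; 83; 82; 90; 91; 88; 89; 70; 71; 68; 69; 77; 76; 79; 78; 65; 64; 67; 66; 74; 75; 72; 73; 118; 119; 116; 117; 125; 124; 127; 126; 113; 112; 115; 114; 122; 123; 120; 121; 102; 103; 100; 101; 109; 108; 111; 110; 97; 96; 99; 98; 106; 107; 104; 105];
 [:: 24; 25; 26; 27; 19; 18; 17; 16; 31; 30; 29; 28; 20; 21; 22; 23; 8; 9; 10; 11; 3; 2; 1; 0; 15; 14; 13; 12; 4; 5; 6; 7; 56; 57; 58; 59; 51; 50; 49; 48; 63; 62; 61; 60; 52; 53; 54; 55; 40; 41; 42; 43; 35; 34; 33; 32; 47; 46; 45; 44; 36; 37; 38; 39; 89; 88; 91; 90; 82; 83; 80; 81; 94; 95; 92; 93; 85; 84; 87; 86; 73; 72; 75; 74; 66; 67; 64; 65; 78; 79; 76; 77; 69; 68; 71; 70; 121; 120; 123; 122; 114; 115; 112; 113; 126; 127; 124; 125; 117; 116; 119; 118; 105; 104; 107; 106; 98; 99; 96; 97; 110; 111; 108; 109; 101; 100; 103; 102];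
 [:: 25; 24; 27; 26; 18; 19; 16; 17; 30; 31; 28; 29; 21; 20; 23; 22; 9; 8; 11; 10; 2; 3; 0; 1; 14; 15; 12; 13; 5; 4; 7; 6; 57; 56; 59; 58; 50; 51; 48; 49; 62; 63; 60; 61; 53; 52; 55; 54; 41; 40; 43; 42; 34; 35; 32; 33; 46; 47; 44; 45; 37; 36; 39; 38; 88; 89; 90; 91; 83; 82; 81; 80; 95; 94; 93; 92; 84; 85; 86; 87; 72; 73; 74; 75; 67; 66; 65; 64; 79; 78; 77; 76; 68; 69; 70; 71; 120; 121; 122; 123; 115; 114; 113; 112; 127; 126; 125; 124; 116; 117; 118; 119; 104; 105; 106; 107; 99; 98; 97; 96; 111; 110; 109; 108; 100; 101; 102; 103];
 [:: 26; 27; 24; 25; 17; 16; 19; 18; 29; 28; 31; 30; 22; 23; 20; 21; 10; 11; 8; 9; 1; 0; 3; 2; 13; 12; 15; 14; 6; 7; 4; 5; 58; 59; 56; 57; 49; 48; 51; 50; 61; 60; 63; 62; 54; 55; 52; 53; 42; 43; 40; 41; 33; 32; 35; 34; 45; 44; 47; 46; 38; 39; 36; 37; 91; 90; 89; 88; 80; 81; 82; 83; 92; 93; 94; 95; 87; 86; 85; 84; 75; 74; 73; 72; 64; 65; 66; 67; 76; 77; 78; 79; 71; 70; 69; 68; 123; 122; 121; 120; 112; 113; 114; 115; 124; 125; 126; 127; 119; 118; 117; 116; 107; 106; 105; 104; 96; 97; 98; 99; 108; 109; 110; 111; 103; 102; 101; 100];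
 [:: 27; 26; 25; 24; 16; 17; 18; 19; 28; 29; 30; 31; 23; 22; 21; 20; 11; 10; 9; 8; 0; 1; 2; 3; 12; 13; 14; 15; 7; 6; 5; 4; 59; 58; 57; 56; 48; 49; 50; 51; 60; 61; 62; 63; 55; 54; 53; 52; 43; 42; 41; 40; 32; 33; 34; 35; 44; 45; 46; 47; 39; 38; 37; 36; 90; 91; 88; 89; 81; 80; 83; 82; 93; 92; 95; 94; 86; 87; 84; 85; 74; 75; 72; 73; 65; 64; 67; 66; 77; 76; 79; 78; 70; 71; 68; 69; 122; 123; 120; 121; 113; 112; 115; 114; 125; 124; 127; 126; 118; 119; 116; 117; 106; 107; 104; 105; 97; 96; 99; 98; 109; 108; 111; 110; 102; 103; 100; 101];
 [:: 28; 29; 30; 31; 23; 22; 21; 20; 27; 26; 25; 24; 16; 17; 18; 19; 12; 13; 14; 15; 7; 6; 5; 4; 11; 10; 9; 8; 0; 1; 2; 3; 60; 61; 62; 63; 55; 54; 53; 52; 59; 58; 57; 56; 48; 49; 50; 51; 44; 45; 46; 47; 39; 38; 37; 36; 43; 42; 41; 40; 32; 33; 34; 35; 93; 92; 95; 94; 86; 87; 84; 85; 90; 91; 88; 89; 81; 80; 83; 82; 77; 76; 79; 78; 70; 71; 68; 69; 74; 75; 72; 73; 65; 64; 67; 66; 125; 124; 127; 126; 118; 119; 116; 117; 122; 123; 120; 121; 113; 112; 115; 114; 109; 108; 111; 110; 102; 103; 100; 101; 106; 107; 104; 105; 97; 96; 99; 98];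
 [:: 29; 28; 31; 30; 22; 23; 20; 21; 26; 27; 24; 25; 17; 16; 19; 18; 13; 12; 15; 14; 6; 7; 4; 5; 10; 11; 8; 9; 1; 0; 3; 2; 61; 60; 63; 62; 54; 55; 52; 53; 58; 59; 56; 57; 49; 48; 51; 50; 45; 44; 47; 46; 38; 39; 36; 37; 42; 43; 40; 41; 33; 32; 35; 34; 92; 93; 94; 95; 87; 86; 85; 84; 91; 90; 89; 88; 80; 81; 82; 83; 76; 77; 78; 79; 71; 70; 69; 68; 75; 74; 73; 72; 64; 65; 66; 67; 124; 125; 126; 127; 119; 118; 117; 116; 123; 122; 121; 120; 112; 113; 114; 115; 108; 109; 110; 111; 103; 102; 101; 100; 107; 106; 105; 104; 96; 97; 98; 99];
 [:: 30; 31; 28; 29; 21; 20; 23; 22; 25; 24; 27; 26; 18; 19; 16; 17; 14; 15; 12; 13; 5; 4; 7; 6; 9; 8; 11; 10; 2; 3; 0; 1; 62; 63; 60; 61; 53; 52; 55; 54; 57; 56; 59; 58; 50; 51; 48; 49; 46; 47; 44; 45; 37; 36; 39; 38; 41; 40; 43; 42; 34; 35; 32; 33; 95; 94; 93; 92; 84; 85; 86; 87; 88; 89; 90; 91; 83; 82; 81; 80; 79; 78; 77; 76; 68; 69; 70; 71; 72; 73; 74; 75; 67; 66; 65; 64; 127; 126; 125; 124; 116; 117; 118; 119; 120; 121; 122; 123; 115; 114; 113; 112; 111; 110; 109; 108; 100; 101; 102; 103; 104; 105; 106; 107; 99; 98; 97; 96];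
 [:: 31; 30; 29; 28; 20; 21; 22; 23; 24; 25; 26; 27; 19; 18; 17; 16; 15; 14; 13; 12; 4; 5; 6; 7; 8; 9; 10; 11; 3; 2; 1; 0; 63; 62; 61; 60; 52; 53; 54; 55; 56; 57; 58; 59; 51; 50; 49; 48; 47; 46; 45; 44; 36; 37; 38; 39; 40; 41; 42; 43; 35; 34; 33; 32; 94; 95; 92; 93; 85; 84; 87; 86; 89; 88; 91; 90; 82; 83; 80; 81; 78; 79; 76; 77; 69; 68; 71; 70; 73; 72; 75; 74; 66; 67; 64; 65; 126; 127; 124; 125; 117; 116; 119; 118; 121; 120; 123; 122; 114; 115; 112; 113; 110; 111; 108; 109; 101; 100; 103; 102; 105; 104; 107; 106; 98; 99; 96; 97];
 [:: 32; 33; 45; 44; 37; 36; 40; 41; 38; 39; 43; 42; 35; 34; 46; 47; 49; 48; 60; 61; 52; 53; 57; 56; 55; 54; 58; 59; 50; 51; 63; 62; 0; 1; 13; 12; 5; 4; 8; 9; 6; 7; 11; 10; 3; 2; 14; 15; 17; 16; 28; 29; 20; 21; 25; 24; 23; 22; 26; 27; 18; 19; 31; 30; 97; 96; 108; 109; 100; 101; 105; 104; 103; 102; 106; 107; 98; 99; 111; 110; 112; 113; 125; 124; 117; 116; 120; 121; 118; 119; 123; 122; 115; 114; 126; 127; 65; 64; 76; 77; 68; 69; 73; 72; 71; 70; 74; 75; 66; 67; 79; 78; 80; 81; 93; 92; 85; 84; 88; 89; 86; 87; 91; 90; 83; 82; 94; 95];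
 [:: 33; 32; 44; 45; 36; 37; 41; 40; 39; 38; 42; 43; 34; 35; 47; 46; 48; 49; 61; 60; 53; 52; 56; 57; 54; 55; 59; 58; 51; 50; 62; 63; 1; 0; 12; 13; 4; 5; 9; 8; 7; 6; 10; 11; 2; 3; 15; 14; 16; 17; 29; 28; 21; 20; 24; 25; 22; 23; 27; 26; 19; 18; 30; 31; 96; 97; 109; 108; 101; 100; 104; 105; 102; 103; 107; 106; 99; 98; 110; 111; 113; 112; 124; 125; 116; 117; 121; 120; 119; 118; 122; 123; 114; 115; 127; 126; 64; 65; 77; 76; 69; 68; 72; 73; 70; 71; 75; 74; 67; 66; 78; 79; 81; 80; 92; 93; 84; 85; 89; 88; 87; 86; 90; 91; 82; 83; 95; 94];
 [:: 34; 35; 47; 46; 39; 38; 42; 43; 36; 37; 41; 40; 33; 32; 44; 45; 51; 50; 62; 63; 54; 55; 59; 58; 53; 52; 56; 57; 48; 49; 61; 60; 2; 3; 15; 14; 7; 6; 10; 11; 4; 5; 9; 8; 1; 0; 12; 13; 19; 18; 30; 31; 22; 23; 27; 26; 21; 20; 24; 25; 16; 17; 29; 28; 99; 98; 110; 111; 102; 103; 107; 106; 101; 100; 104; 105; 96; 97; 109; 108; 114; 115; 127; 126; 119; 118; 122; 123; 116; 117; 121; 120; 113; 112; 124; 125; 67; 66; 78; 79; 70; 71; 75; 74; 69; 68; 72; 73; 64; 65; 77; 76; 82; 83; 95; 94; 87; 86; 90; 91; 84; 85; 89; 88; 81; 80; 92; 93];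
 [:: 35; 34; 46; 47; 38; 39; 43; 42; 37; 36; 40; 41; 32; 33; 45; 44; 50; 51; 63; 62; 55; 54; 58; 59; 52; 53; 57; 56; 49; 48; 60; 61; 3; 2; 14; 15; 6; 7; 11; 10; 5; 4; 8; 9; 0; 1; 13; 12; 18; 19; 31; 30; 23; 22; 26; 27; 20; 21; 25; 24; 17; 16; 28; 29; 98; 99; 111; 110; 103; 102; 106; 107; 100; 101; 105; 104; 97; 96; 108; 109; 115; 114; 126; 127; 118; 119; 123; 122; 117; 116; 120; 121; 112; 113; 125; 124; 66; 67; 79; 78; 71; 70; 74; 75; 68; 69; 73; 72; 65; 64; 76; 77; 83; 82; 94; 95; 86; 87; 91; 90; 85; 84; 88; 89; 80; 81; 93; 92];
 [:: 36; 37; 41; 40; 33; 32; 44; 45; 34; 35; 47; 46; 39; 38; 42; 43; 53; 52; 56; 57; 48; 49; 61; 60; 51; 50; 62; 63; 54; 55; 59; 58; 4; 5; 9; 8; 1; 0; 12; 13; 2; 3; 15; 14; 7; 6; 10; 11; 21; 20; 24; 25; 16; 17; 29; 28; 19; 18; 30; 31; 22; 23; 27; 26; 101; 100; 104; 105; 96; 97; 109; 108; 99; 98; 110; 111; 102; 103; 107; 106; 116; 117; 121; 120; 113; 112; 124; 125; 114; 115; 127; 126; 119; 118; 122; 123; 69; 68; 72; 73; 64; 65; 77; 76; 67; 66; 78; 79; 70; 71; 75; 74; 84; 85; 89; 88; 81; 80; 92; 93; 82; 83; 95; 94; 87; 86; 90; 91];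
 [:: 37; 36; 40; 41; 32; 33; 45; 44; 35; 34; 46; 47; 38; 39; 43; 42; 52; 53; 57; 56; 49; 48; 60; 61; 50; 51; 63; 62; 55; 54; 58; 59; 5; 4; 8; 9; 0; 1; 13; 12; 3; 2; 14; 15; 6; 7; 11; 10; 20; 21; 25; 24; 17; 16; 28; 29; 18; 19; 31; 30; 23; 22; 26; 27; 100; 101; 105; 104; 97; 96; 108; 109; 98; 99; 111; 110; 103; 102; 106; 107; 117; 116; 120; 121; 112; 113; 125; 124; 115; 114; 126; 127; 118; 119; 123; 122; 68; 69; 73; 72; 65; 64; 76; 77; 66; 67; 79; 78; 71; 70; 74; 75; 85; 84; 88; 89; 80; 81; 93; 92; 83; 82; 94; 95; 86; 87; 91; 90];
 [:: 38; 39; 43; 42; 35; 34; 46; 47; 32; 33; 45; 44; 37; 36; 40; 41; 55; 54; 58; 59; 50; 51; 63; 62; 49; 48; 60; 61; 52; 53; 57; 56; 6; 7; 11; 10; 3; 2; 14; 15; 0; 1; 13; 12; 5; 4; 8; 9; 23; 22; 26; 27; 18; 19; 31; 30; 17; 16; 28; 29; 20; 21; 25; 24; 103; 102; 106; 107; 98; 99; 111; 110; 97; 96; 108; 109; 100; 101; 105; 104; 118; 119; 123; 122; 115; 114; 126; 127; 112; 113; 125; 124; 117; 116; 120; 121; 71; 70; 74; 75; 66; 67; 79; 78; 65; 64; 76; 77; 68; 69; 73; 72; 86; 87; 91; 90; 83; 82; 94; 95; 80; 81; 93; 92; 85; 84; 88; 89];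
 [:: 39; 38; 42; 43; 34; 35; 47; 46; 33; 32; 44; 45; 36; 37; 41; 40; 54; 55; 59; 58; 51; 50; 62; 63; 48; 49; 61; 60; 53; 52; 56; 57; 7; 6; 10; 11; 2; 3; 15; 14; 1; 0; 12; 13; 4; 5; 9; 8; 22; 23; 27; 26; 19; 18; 30; 31; 16; 17; 29; 28; 21; 20; 24; 25; 102; 103; 107; 106; 99; 98; 110; 111; 96; 97; 109; 108; 101; 100; 104; 105; 119; 118; 122; 123; 114; 115; 127; 126; 113; 112; 124; 125; 116; 117; 121; 120; 70; 71; 75; 74; 67; 66; 78; 79; 64; 65; 77; 76; 69; 68; 72; 73; 87; 86; 90; 91; 82; 83; 95; 94; 81; 80; 92; 93; 84; 85; 89; 88];
 [:: 40; 41; 37; 36; 45; 44; 32; 33; 46; 47; 35; 34; 43; 42; 38; 39; 57; 56; 52; 53; 60; 61; 49; 48; 63; 62; 50; 51; 58; 59; 55; 54; 8; 9; 5; 4; 13; 12; 0; 1; 14; 15; 3; 2; 11; 10; 6; 7; 25; 24; 20; 21; 28; 29; 17; 16; 31; 30; 18; 19; 26; 27; 23; 22; 105; 104; 100; 101; 108; 109; 97; 96; 111; 110; 98; 99; 106; 107; 103; 102; 120; 121; 117; 116; 125; 124; 112; 113; 126; 127; 115; 114; 123; 122; 118; 119; 73; 72; 68; 69; 76; 77; 65; 64; 79; 78; 66; 67; 74; 75; 71; 70; 88; 89; 85; 84; 93; 92; 80; 81; 94; 95; 83; 82; 91; 90; 86; 87];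
 [:: 41; 40; 36; 37; 44; 45; 33; 32; 47; 46; 34; 35; 42; 43; 39; 38; 56; 57; 53; 52; 61; 60; 48; 49; 62; 63; 51; 50; 59; 58; 54; 55; 9; 8; 4; 5; 12; 13; 1; 0; 15; 14; 2; 3; 10; 11; 7; 6; 24; 25; 21; 20; 29; 28; 16; 17; 30; 31; 19; 18; 27; 26; 22; 23; 104; 105; 101; 100; 109; 108; 96; 97; 110; 111; 99; 98; 107; 106; 102; 103; 121; 120; 116; 117; 124; 125; 113; 112; 127; 126; 114; 115; 122; 123; 119; 118; 72; 73; 69; 68; 77; 76; 64; 65; 78; 79; 67; 66; 75; 74; 70; 71; 89; 88; 84; 85; 92; 93; 81; 80; 95; 94; 82; 83; 90; 91; 87; 86];
 [:: 42; 43; 39; 38; 47; 46; 34; 35; 44; 45; 33; 32; 41; 40; 36; 37; 59; 58; 54; 55; 62; 63; 51; 50; 61; 60; 48; 49; 56; 57; 53; 52; 10; 11; 7; 6; 15; 14; 2; 3; 12; 13; 1; 0; 9; 8; 4; 5; 27; 26; 22; 23; 30; 31; 19; 18; 29; 28; 16; 17; 24; 25; 21; 20; 107; 106; 102; 103; 110; 111; 99; 98; 109; 108; 96; 97; 104; 105; 101; 100; 122; 123; 119; 118; 127; 126; 114; 115; 124; 125; 113; 112; 121; 120; 116; 117; 75; 74; 70; 71; 78; 79; 67; 66; 77; 76; 64; 65; 72; 73; 69; 68; 90; 91; 87; 86; 95; 94; 82; 83; 92; 93; 81; 80; 89; 88; 84; 85];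
 [:: 43; 42; 38; 39; 46; 47; 35; 34; 45; 44; 32; 33; 40; 41; 37; 36; 58; 59; 55; 54; 63; 62; 50; 51; 60; 61; 49; 48; 57; 56; 52; 53; 11; 10; 6; 7; 14; 15; 3; 2; 13; 12; 0; 1; 8; 9; 5; 4; 26; 27; 23; 22; 31; 30; 18; 19; 28; 29; 17; 16; 25; 24; 20; 21; 106; 107; 103; 102; 111; 110; 98; 99; 108; 109; 97; 96; 105; 104; 100; 101; 123; 122; 118; 119; 126; 127; 115; 114; 125; 124; 112; 113; 120; 121; 117; 116; 74; 75; 71; 70; 79; 78; 66; 67; 76; 77; 65; 64; 73; 72; 68; 69; 91; 90; 86; 87; 94; 95; 83; 82; 93; 92; 80; 81; 88; 89; 85; 84];
 [:: 44; 45; 33; 32; 41; 40; 36; 37; 42; 43; 39; 38; 47; 46; 34; 35; 61; 60; 48; 49; 56; 57; 53; 52; 59; 58; 54; 55; 62; 63; 51; 50; 12; 13; 1; 0; 9; 8; 4; 5; 10; 11; 7; 6; 15; 14; 2; 3; 29; 28; 16; 17; 24; 25; 21; 20; 27; 26; 22; 23; 30; 31; 19; 18; 109; 108; 96; 97; 104; 105; 101; 100; 107; 106; 102; 103; 110; 111; 99; 98; 124; 125; 113; 112; 121; 120; 116; 117; 122; 123; 119; 118; 127; 126; 114; 115; 77; 76; 64; 65; 72; 73; 69; 68; 75; 74; 70; 71; 78; 79; 67; 66; 92; 93; 81; 80; 89; 88; 84; 85; 90; 91; 87; 86; 95; 94; 82; 83];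
 [:: 45; 44; 32; 33; 40; 41; 37; 36; 43; 42; 38; 39; 46; 47; 35; 34; 60; 61; 49; 48; 57; 56; 52; 53; 58; 59; 55; 54; 63; 62; 50; 51; 13; 12; 0; 1; 8; 9; 5; 4; 11; 10; 6; 7; 14; 15; 3; 2; 28; 29; 17; 16; 25; 24; 20; 21; 26; 27; 23; 22; 31; 30; 18; 19; 108; 109; 97; 96; 105; 104; 100; 101; 106; 107; 103; 102; 111; 110; 98; 99; 125; 124; 112; 113; 120; 121; 117; 116; 123; 122; 118; 119; 126; 127; 115; 114; 76; 77; 65; 64; 73; 72; 68; 69; 74; 75; 71; 70; 79; 78; 66; 67; 93; 92; 80; 81; 88; 89; 85; 84; 91; 90; 86; 87; 94; 95; 83; 82];
 [:: 46; 47; 35; 34; 43; 42; 38; 39; 40; 41; 37; 36; 45; 44; 32; 33; 63; 62; 50; 51; 58; 59; 55; 54; 57; 56; 52; 53; 60; 61; 49; 48; 14; 15; 3; 2; 11; 10; 6; 7; 8; 9; 5; 4; 13; 12; 0; 1; 31; 30; 18; 19; 26; 27; 23; 22; 25; 24; 20; 21; 28; 29; 17; 16; 111; 110; 98; 99; 106; 107; 103; 102; 105; 104; 100; 101; 108; 109; 97; 96; 126; 127; 115; 114; 123; 122; 118; 119; 120; 121; 117; 116; 125; 124; 112; 113; 79; 78; 66; 67; 74; 75; 71; 70; 73; 72; 68; 69; 76; 77; 65; 64; 94; 95; 83; 82; 91; 90; 86; 87; 88; 89; 85; 84; 93; 92; 80; 81];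
 [:: 47; 46; 34; 35; 42; 43; 39; 38; 41; 40; 36; 37; 44; 45; 33; 32; 62; 63; 51; 50; 59; 58; 54; 55; 56; 57; 53; 52; 61; 60; 48; 49; 15; 14; 2; 3; 10; 11; 7; 6; 9; 8; 4; 5; 12; 13; 1; 0; 30; 31; 19; 18; 27; 26; 22; 23; 24; 25; 21; 20; 29; 28; 16; 17; 110; 111; 99; 98; 107; 106; 102; 103; 104; 105; 101; 100; 109; 108; 96; 97; 127; 126; 114; 115; 122; 123; 119; 118; 121; 120; 116; 117; 124; 125; 113; 112; 78; 79; 67; 66; 75; 74; 70; 71; 72; 73; 69; 68; 77; 76; 64; 65; 95; 94; 82; 83; 90; 91; 87; 86; 89; 88; 84; 85; 92; 93; 81; 80];
 [:: 48; 49; 61; 60; 58; 59; 55; 54; 57; 56; 52; 53; 51; 50; 62; 63; 33; 32; 44; 45; 43; 42; 38; 39; 40; 41; 37; 36; 34; 35; 47; 46; 16; 17; 29; 28; 26; 27; 23; 22; 25; 24; 20; 21; 19; 18; 30; 31; 1; 0; 12; 13; 11; 10; 6; 7; 8; 9; 5; 4; 2; 3; 15; 14; 112; 113; 125; 124; 122; 123; 119; 118; 121; 120; 116; 117; 115; 114; 126; 127; 97; 96; 108; 109; 107; 106; 102; 103; 104; 105; 101; 100; 98; 99; 111; 110; 80; 81; 93; 92; 90; 91; 87; 86; 89; 88; 84; 85; 83; 82; 94; 95; 65; 64; 76; 77; 75; 74; 70; 71; 72; 73; 69; 68; 66; 67; 79; 78];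
 [:: 49; 48; 60; 61; 59; 58; 54; 55; 56; 57; 53; 52; 50; 51; 63; 62; 32; 33; 45; 44; 42; 43; 39; 38; 41; 40; 36; 37; 35; 34; 46; 47; 17; 16; 28; 29; 27; 26; 22; 23; 24; 25; 21; 20; 18; 19; 31; 30; 0; 1; 13; 12; 10; 11; 7; 6; 9; 8; 4; 5; 3; 2; 14; 15; 113; 112; 124; 125; 123; 122; 118; 119; 120; 121; 117; 116; 114; 115; 127; 126; 96; 97; 109; 108; 106; 107; 103; 102; 105; 104; 100; 101; 99; 98; 110; 111; 81; 80; 92; 93; 91; 90; 86; 87; 88; 89; 85; 84; 82; 83; 95; 94; 64; 65; 77; 76; 74; 75; 71; 70; 73; 72; 68; 69; 67; 66; 78; 79];
 [:: 50; 51; 63; 62; 56; 57; 53; 52; 59; 58; 54; 55; 49; 48; 60; 61; 35; 34; 46; 47; 41; 40; 36; 37; 42; 43; 39; 38; 32; 33; 45; 44; 18; 19; 31; 30; 24; 25; 21; 20; 27; 26; 22; 23; 17; 16; 28; 29; 3; 2; 14; 15; 9; 8; 4; 5; 10; 11; 7; 6; 0; 1; 13; 12; 114; 115; 127; 126; 120; 121; 117; 116; 123; 122; 118; 119; 113; 112; 124; 125; 99; 98; 110; 111; 105; 104; 100; 101; 106; 107; 103; 102; 96; 97; 109; 108; 82; 83; 95; 94; 88; 89; 85; 84; 91; 90; 86; 87; 81; 80; 92; 93; 67; 66; 78; 79; 73; 72; 68; 69; 74; 75; 71; 70; 64; 65; 77; 76];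
 [:: 51; 50; 62; 63; 57; 56; 52; 53; 58; 59; 55; 54; 48; 49; 61; 60; 34; 35; 47; 46; 40; 41; 37; 36; 43; 42; 38; 39; 33; 32; 44; 45; 19; 18; 30; 31; 25; 24; 20; 21; 26; 27; 23; 22; 16; 17; 29; 28; 2; 3; 15; 14; 8; 9; 5; 4; 11; 10; 6; 7; 1; 0; 12; 13; 115; 114; 126; 127; 121; 120; 116; 117; 122; 123; 119; 118; 112; 113; 125; 124; 98; 99; 111; 110; 104; 105; 101; 100; 107; 106; 102; 103; 97; 96; 108; 109; 83; 82; 94; 95; 89; 88; 84; 85; 90; 91; 87; 86; 80; 81; 93; 92; 66; 67; 79; 78; 72; 73; 69; 68; 75; 74; 70; 71; 65; 64; 76; 77];
 [:: 52; 53; 57; 56; 62; 63; 51; 50; 61; 60; 48; 49; 55; 54; 58; 59; 37; 36; 40; 41; 47; 46; 34; 35; 44; 45; 33; 32; 38; 39; 43; 42; 20; 21; 25; 24; 30; 31; 19; 18; 29; 28; 16; 17; 23; 22; 26; 27; 5; 4; 8; 9; 15; 14; 2; 3; 12; 13; 1; 0; 6; 7; 11; 10; 116; 117; 121; 120; 126; 127; 115; 114; 125; 124; 112; 113; 119; 118; 122; 123; 101; 100; 104; 105; 111; 110; 98; 99; 108; 109; 97; 96; 102; 103; 107; 106; 84; 85; 89; 88; 94; 95; 83; 82; 93; 92; 80; 81; 87; 86; 90; 91; 69; 68; 72; 73; 79; 78; 66; 67; 76; 77; 65; 64; 70; 71; 75; 74];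
 [:: 53; 52; 56; 57; 63; 62; 50; 51; 60; 61; 49; 48; 54; 55; 59; 58; 36; 37; 41; 40; 46; 47; 35; 34; 45; 44; 32; 33; 39; 38; 42; 43; 21; 20; 24; 25; 31; 30; 18; 19; 28; 29; 17; 16; 22; 23; 27; 26; 4; 5; 9; 8; 14; 15; 3; 2; 13; 12; 0; 1; 7; 6; 10; 11; 117; 116; 120; 121; 127; 126; 114; 115; 124; 125; 113; 112; 118; 119; 123; 122; 100; 101; 105; 104; 110; 111; 99; 98; 109; 108; 96; 97; 103; 102; 106; 107; 85; 84; 88; 89; 95; 94; 82; 83; 92; 93; 81; 80; 86; 87; 91; 90; 68; 69; 73; 72; 78; 79; 67; 66; 77; 76; 64; 65; 71; 70; 74; 75];
 [:: 54; 55; 59; 58; 60; 61; 49; 48; 63; 62; 50; 51; 53; 52; 56; 57; 39; 38; 42; 43; 45; 44; 32; 33; 46; 47; 35; 34; 36; 37; 41; 40; 22; 23; 27; 26; 28; 29; 17; 16; 31; 30; 18; 19; 21; 20; 24; 25; 7; 6; 10; 11; 13; 12; 0; 1; 14; 15; 3; 2; 4; 5; 9; 8; 118; 119; 123; 122; 124; 125; 113; 112; 127; 126; 114; 115; 117; 116; 120; 121; 103; 102; 106; 107; 109; 108; 96; 97; 110; 111; 99; 98; 100; 101; 105; 104; 86; 87; 91; 90; 92; 93; 81; 80; 95; 94; 82; 83; 85; 84; 88; 89; 71; 70; 74; 75; 77; 76; 64; 65; 78; 79; 67; 66; 68; 69; 73; 72];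
 [:: 55; 54; 58; 59; 61; 60; 48; 49; 62; 63; 51; 50; 52; 53; 57; 56; 38; 39; 43; 42; 44; 45; 33; 32; 47; 46; 34; 35; 37; 36; 40; 41; 23; 22; 26; 27; 29; 28; 16; 17; 30; 31; 19; 18; 20; 21; 25; 24; 6; 7; 11; 10; 12; 13; 1; 0; 15; 14; 2; 3; 5; 4; 8; 9; 119; 118; 122; 123; 125; 124; 112; 113; 126; 127; 115; 114; 116; 117; 121; 120; 102; 103; 107; 106; 108; 109; 97; 96; 111; 110; 98; 99; 101; 100; 104; 105; 87; 86; 90; 91; 93; 92; 80; 81; 94; 95; 83; 82; 84; 85; 89; 88; 70; 71; 75; 74; 76; 77; 65; 64; 79; 78; 66; 67; 69; 68; 72; 73];
 [:: 56; 57; 53; 52; 50; 51; 63; 62; 49; 48; 60; 61; 59; 58; 54; 55; 41; 40; 36; 37; 35; 34; 46; 47; 32; 33; 45; 44; 42; 43; 39; 38; 24; 25; 21; 20; 18; 19; 31; 30; 17; 16; 28; 29; 27; 26; 22; 23; 9; 8; 4; 5; 3; 2; 14; 15; 0; 1; 13; 12; 10; 11; 7; 6; 120; 121; 117; 116; 114; 115; 127; 126; 113; 112; 124; 125; 123; 122; 118; 119; 105; 104; 100; 101; 99; 98; 110; 111; 96; 97; 109; 108; 106; 107; 103; 102; 88; 89; 85; 84; 82; 83; 95; 94; 81; 80; 92; 93; 91; 90; 86; 87; 73; 72; 68; 69; 67; 66; 78; 79; 64; 65; 77; 76; 74; 75; 71; 70];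
 [:: 57; 56; 52; 53; 51; 50; 62; 63; 48; 49; 61; 60; 58; 59; 55; 54; 40; 41; 37; 36; 34; 35; 47; 46; 33; 32; 44; 45; 43; 42; 38; 39; 25; 24; 20; 21; 19; 18; 30; 31; 16; 17; 29; 28; 26; 27; 23; 22; 8; 9; 5; 4; 2; 3; 15; 14; 1; 0; 12; 13; 11; 10; 6; 7; 121; 120; 116; 117; 115; 114; 126; 127; 112; 113; 125; 124; 122; 123; 119; 118; 104; 105; 101; 100; 98; 99; 111; 110; 97; 96; 108; 109; 107; 106; 102; 103; 89; 88; 84; 85; 83; 82; 94; 95; 80; 81; 93; 92; 90; 91; 87; 86; 72; 73; 69; 68; 66; 67; 79; 78; 65; 64; 76; 77; 75; 74; 70; 71];
 [:: 58; 59; 55; 54; 48; 49; 61; 60; 51; 50; 62; 63; 57; 56; 52; 53; 43; 42; 38; 39; 33; 32; 44; 45; 34; 35; 47; 46; 40; 41; 37; 36; 26; 27; 23; 22; 16; 17; 29; 28; 19; 18; 30; 31; 25; 24; 20; 21; 11; 10; 6; 7; 1; 0; 12; 13; 2; 3; 15; 14; 8; 9; 5; 4; 122; 123; 119; 118; 112; 113; 125; 124; 115; 114; 126; 127; 121; 120; 116; 117; 107; 106; 102; 103; 97; 96; 108; 109; 98; 99; 111; 110; 104; 105; 101; 100; 90; 91; 87; 86; 80; 81; 93; 92; 83; 82; 94; 95; 89; 88; 84; 85; 75; 74; 70; 71; 65; 64; 76; 77; 66; 67; 79; 78; 72; 73; 69; 68];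
 [:: 59; 58; 54; 55; 49; 48; 60; 61; 50; 51; 63; 62; 56; 57; 53; 52; 42; 43; 39; 38; 32; 33; 45; 44; 35; 34; 46; 47; 41; 40; 36; 37; 27; 26; 22; 23; 17; 16; 28; 29; 18; 19; 31; 30; 24; 25; 21; 20; 10; 11; 7; 6; 0; 1; 13; 12; 3; 2; 14; 15; 9; 8; 4; 5; 123; 122; 118; 119; 113; 112; 124; 125; 114; 115; 127; 126; 120; 121; 117; 116; 106; 107; 103; 102; 96; 97; 109; 108; 99; 98; 110; 111; 105; 104; 100; 101; 91; 90; 86; 87; 81; 80; 92; 93; 82; 83; 95; 94; 88; 89; 85; 84; 74; 75; 71; 70; 64; 65; 77; 76; 67; 66; 78; 79; 73; 72; 68; 69];
 [:: 60; 61; 49; 48; 54; 55; 59; 58; 53; 52; 56; 57; 63; 62; 50; 51; 45; 44; 32; 33; 39; 38; 42; 43; 36; 37; 41; 40; 46; 47; 35; 34; 28; 29; 17; 16; 22; 23; 27; 26; 21; 20; 24; 25; 31; 30; 18; 19; 13; 12; 0; 1; 7; 6; 10; 11; 4; 5; 9; 8; 14; 15; 3; 2; 124; 125; 113; 112; 118; 119; 123; 122; 117; 116; 120; 121; 127; 126; 114; 115; 109; 108; 96; 97; 103; 102; 106; 107; 100; 101; 105; 104; 110; 111; 99; 98; 92; 93; 81; 80; 86; 87; 91; 90; 85; 84; 88; 89; 95; 94; 82; 83; 77; 76; 64; 65; 71; 70; 74; 75; 68; 69; 73; 72; 78; 79; 67; 66];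
 [:: 61; 60; 48; 49; 55; 54; 58; 59; 52; 53; 57; 56; 62; 63; 51; 50; 44; 45; 33; 32; 38; 39; 43; 42; 37; 36; 40; 41; 47; 46; 34; 35; 29; 28; 16; 17; 23; 22; 26; 27; 20; 21; 25; 24; 30; 31; 19; 18; 12; 13; 1; 0; 6; 7; 11; 10; 5; 4; 8; 9; 15; 14; 2; 3; 125; 124; 112; 113; 119; 118; 122; 123; 116; 117; 121; 120; 126; 127; 115; 114; 108; 109; 97; 96; 102; 103; 107; 106; 101; 100; 104; 105; 111; 110; 98; 99; 93; 92; 80; 81; 87; 86; 90; 91; 84; 85; 89; 88; 94; 95; 83; 82; 76; 77; 65; 64; 70; 71; 75; 74; 69; 68; 72; 73; 79; 78; 66; 67];
 [:: 62; 63; 51; 50; 52; 53; 57; 56; 55; 54; 58; 59; 61; 60; 48; 49; 47; 46; 34; 35; 37; 36; 40; 41; 38; 39; 43; 42; 44; 45; 33; 32; 30; 31; 19; 18; 20; 21; 25; 24; 23; 22; 26; 27; 29; 28; 16; 17; 15; 14; 2; 3; 5; 4; 8; 9; 6; 7; 11; 10; 12; 13; 1; 0; 126; 127; 115; 114; 116; 117; 121; 120; 119; 118; 122; 123; 125; 124; 112; 113; 111; 110; 98; 99; 101; 100; 104; 105; 102; 103; 107; 106; 108; 109; 97; 96; 94; 95; 83; 82; 84; 85; 89; 88; 87; 86; 90; 91; 93; 92; 80; 81; 79; 78; 66; 67; 69; 68; 72; 73; 70; 71; 75; 74; 76; 77; 65; 64];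
 [:: 63; 62; 50; 51; 53; 52; 56; 57; 54; 55; 59; 58; 60; 61; 49; 48; 46; 47; 35; 34; 36; 37; 41; 40; 39; 38; 42; 43; 45; 44; 32; 33; 31; 30; 18; 19; 21; 20; 24; 25; 22; 23; 27; 26; 28; 29; 17; 16; 14; 15; 3; 2; 4; 5; 9; 8; 7; 6; 10; 11; 13; 12; 0; 1; 127; 126; 114; 115; 117; 116; 120; 121; 118; 119; 123; 122; 124; 125; 113; 112; 110; 111; 99; 98; 100; 101; 105; 104; 103; 102; 106; 107; 109; 108; 96; 97; 95; 94; 82; 83; 85; 84; 88; 89; 86; 87; 91; 90; 92; 93; 81; 80; 78; 79; 67; 66; 68; 69; 73; 72; 71; 70; 74; 75; 77; 76; 64; 65];
 [:: 64; 78; 67; 77; 71; 73; 68; 74; 69; 75; 70; 72; 66; 76; 65; 79; 82; 92; 81; 95; 85; 91; 86; 88; 87; 89; 84; 90; 80; 94; 83; 93; 96; 110; 99; 109; 103; 105; 100; 106; 101; 107; 102; 104; 98; 108; 97; 111; 114; 124; 113; 127; 117; 123; 118; 120; 119; 121; 116; 122; 112; 126; 115; 125; 54; 56; 53; 59; 49; 63; 50; 60; 51; 61; 48; 62; 52; 58; 55; 57; 36; 42; 39; 41; 35; 45; 32; 46; 33; 47; 34; 44; 38; 40; 37; 43; 22; 24; 21; 27; 17; 31; 18; 28; 19; 29; 16; 30; 20; 26; 23; 25; 4; 10; 7; 9; 3; 13; 0; 14; 1; 15; 2; 12; 6; 8; 5; 11];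
 [:: 65; 79; 66; 76; 70; 72; 69; 75; 68; 74; 71; 73; 67; 77; 64; 78; 83; 93; 80; 94; 84; 90; 87; 89; 86; 88; 85; 91; 81; 95; 82; 92; 97; 111; 98; 108; 102; 104; 101; 107; 100; 106; 103; 105; 99; 109; 96; 110; 115; 125; 112; 126; 116; 122; 119; 121; 118; 120; 117; 123; 113; 127; 114; 124; 55; 57; 52; 58; 48; 62; 51; 61; 50; 60; 49; 63; 53; 59; 54; 56; 37; 43; 38; 40; 34; 44; 33; 47; 32; 46; 35; 45; 39; 41; 36; 42; 23; 25; 20; 26; 16; 30; 19; 29; 18; 28; 17; 31; 21; 27; 22; 24; 5; 11; 6; 8; 2; 12; 1; 15; 0; 14; 3; 13; 7; 9; 4; 10];
 [:: 66; 76; 65; 79; 69; 75; 70; 72; 71; 73; 68; 74; 64; 78; 67; 77; 80; 94; 83; 93; 87; 89; 84; 90; 85; 91; 86; 88; 82; 92; 81; 95; 98; 108; 97; 111; 101; 107; 102; 104; 103; 105; 100; 106; 96; 110; 99; 109; 112; 126; 115; 125; 119; 121; 116; 122; 117; 123; 118; 120; 114; 124; 113; 127; 52; 58; 55; 57; 51; 61; 48; 62; 49; 63; 50; 60; 54; 56; 53; 59; 38; 40; 37; 43; 33; 47; 34; 44; 35; 45; 32; 46; 36; 42; 39; 41; 20; 26; 23; 25; 19; 29; 16; 30; 17; 31; 18; 28; 22; 24; 21; 27; 6; 8; 5; 11; 1; 15; 2; 12; 3; 13; 0; 14; 4; 10; 7; 9];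
 [:: 67; 77; 64; 78; 68; 74; 71; 73; 70; 72; 69; 75; 65; 79; 66; 76; 81; 95; 82; 92; 86; 88; 85; 91; 84; 90; 87; 89; 83; 93; 80; 94; 99; 109; 96; 110; 100; 106; 103; 105; 102; 104; 101; 107; 97; 111; 98; 108; 113; 127; 114; 124; 118; 120; 117; 123; 116; 122; 119; 121; 115; 125; 112; 126; 53; 59; 54; 56; 50; 60; 49; 63; 48; 62; 51; 61; 55; 57; 52; 58; 39; 41; 36; 42; 32; 46; 35; 45; 34; 44; 33; 47; 37; 43; 38; 40; 21; 27; 22; 24; 18; 28; 17; 31; 16; 30; 19; 29; 23; 25; 20; 26; 7; 9; 4; 10; 0; 14; 3; 13; 2; 12; 1; 15; 5; 11; 6; 8];
 [:: 68; 74; 71; 73; 67; 77; 64; 78; 65; 79; 66; 76; 70; 72; 69; 75; 86; 88; 85; 91; 81; 95; 82; 92; 83; 93; 80; 94; 84; 90; 87; 89; 100; 106; 103; 105; 99; 109; 96; 110; 97; 111; 98; 108; 102; 104; 101; 107; 118; 120; 117; 123; 113; 127; 114; 124; 115; 125; 112; 126; 116; 122; 119; 121; 50; 60; 49; 63; 53; 59; 54; 56; 55; 57; 52; 58; 48; 62; 51; 61; 32; 46; 35; 45; 39; 41; 36; 42; 37; 43; 38; 40; 34; 44; 33; 47; 18; 28; 17; 31; 21; 27; 22; 24; 23; 25; 20; 26; 16; 30; 19; 29; 0; 14; 3; 13; 7; 9; 4; 10; 5; 11; 6; 8; 2; 12; 1; 15];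
 [:: 69; 75; 70; 72; 66; 76; 65; 79; 64; 78; 67; 77; 71; 73; 68; 74; 87; 89; 84; 90; 80; 94; 83; 93; 82; 92; 81; 95; 85; 91; 86; 88; 101; 107; 102; 104; 98; 108; 97; 111; 96; 110; 99; 109; 103; 105; 100; 106; 119; 121; 116; 122; 112; 126; 115; 125; 114; 124; 113; 127; 117; 123; 118; 120; 51; 61; 48; 62; 52; 58; 55; 57; 54; 56; 53; 59; 49; 63; 50; 60; 33; 47; 34; 44; 38; 40; 37; 43; 36; 42; 39; 41; 35; 45; 32; 46; 19; 29; 16; 30; 20; 26; 23; 25; 22; 24; 21; 27; 17; 31; 18; 28; 1; 15; 2; 12; 6; 8; 5; 11; 4; 10; 7; 9; 3; 13; 0; 14];
 [:: 70; 72; 69; 75; 65; 79; 66; 76; 67; 77; 64; 78; 68; 74; 71; 73; 84; 90; 87; 89; 83; 93; 80; 94; 81; 95; 82; 92; 86; 88; 85; 91; 102; 104; 101; 107; 97; 111; 98; 108; 99; 109; 96; 110; 100; 106; 103; 105; 116; 122; 119; 121; 115; 125; 112; 126; 113; 127; 114; 124; 118; 120; 117; 123; 48; 62; 51; 61; 55; 57; 52; 58; 53; 59; 54; 56; 50; 60; 49; 63; 34; 44; 33; 47; 37; 43; 38; 40; 39; 41; 36; 42; 32; 46; 35; 45; 16; 30; 19; 29; 23; 25; 20; 26; 21; 27; 22; 24; 18; 28; 17; 31; 2; 12; 1; 15; 5; 11; 6; 8; 7; 9; 4; 10; 0; 14; 3; 13];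
 [:: 71; 73; 68; 74; 64; 78; 67; 77; 66; 76; 65; 79; 69; 75; 70; 72; 85; 91; 86; 88; 82; 92; 81; 95; 80; 94; 83; 93; 87; 89; 84; 90; 103; 105; 100; 106; 96; 110; 99; 109; 98; 108; 97; 111; 101; 107; 102; 104; 117; 123; 118; 120; 114; 124; 113; 127; 112; 126; 115; 125; 119; 121; 116; 122; 49; 63; 50; 60; 54; 56; 53; 59; 52; 58; 55; 57; 51; 61; 48; 62; 35; 45; 32; 46; 36; 42; 39; 41; 38; 40; 37; 43; 33; 47; 34; 44; 17; 31; 18; 28; 22; 24; 21; 27; 20; 26; 23; 25; 19; 29; 16; 30; 3; 13; 0; 14; 4; 10; 7; 9; 6; 8; 5; 11; 1; 15; 2; 12];
 [:: 72; 70; 75; 69; 79; 65; 76; 66; 77; 67; 78; 64; 74; 68; 73; 71; 90; 84; 89; 87; 93; 83; 94; 80; 95; 81; 92; 82; 88; 86; 91; 85; 104; 102; 107; 101; 111; 97; 108; 98; 109; 99; 110; 96; 106; 100; 105; 103; 122; 116; 121; 119; 125; 115; 126; 112; 127; 113; 124; 114; 120; 118; 123; 117; 62; 48; 61; 51; 57; 55; 58; 52; 59; 53; 56; 54; 60; 50; 63; 49; 44; 34; 47; 33; 43; 37; 40; 38; 41; 39; 42; 36; 46; 32; 45; 35; 30; 16; 29; 19; 25; 23; 26; 20; 27; 21; 24; 22; 28; 18; 31; 17; 12; 2; 15; 1; 11; 5; 8; 6; 9; 7; 10; 4; 14; 0; 13; 3];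
 [:: 73; 71; 74; 68; 78; 64; 77; 67; 76; 66; 79; 65; 75; 69; 72; 70; 91; 85; 88; 86; 92; 82; 95; 81; 94; 80; 93; 83; 89; 87; 90; 84; 105; 103; 106; 100; 110; 96; 109; 99; 108; 98; 111; 97; 107; 101; 104; 102; 123; 117; 120; 118; 124; 114; 127; 113; 126; 112; 125; 115; 121; 119; 122; 116; 63; 49; 60; 50; 56; 54; 59; 53; 58; 52; 57; 55; 61; 51; 62; 48; 45; 35; 46; 32; 42; 36; 41; 39; 40; 38; 43; 37; 47; 33; 44; 34; 31; 17; 28; 18; 24; 22; 27; 21; 26; 20; 25; 23; 29; 19; 30; 16; 13; 3; 14; 0; 10; 4; 9; 7; 8; 6; 11; 5; 15; 1; 12; 2];
 [:: 74; 68; 73; 71; 77; 67; 78; 64; 79; 65; 76; 66; 72; 70; 75; 69; 88; 86; 91; 85; 95; 81; 92; 82; 93; 83; 94; 80; 90; 84; 89; 87; 106; 100; 105; 103; 109; 99; 110; 96; 111; 97; 108; 98; 104; 102; 107; 101; 120; 118; 123; 117; 127; 113; 124; 114; 125; 115; 126; 112; 122; 116; 121; 119; 60; 50; 63; 49; 59; 53; 56; 54; 57; 55; 58; 52; 62; 48; 61; 51; 46; 32; 45; 35; 41; 39; 42; 36; 43; 37; 40; 38; 44; 34; 47; 33; 28; 18; 31; 17; 27; 21; 24; 22; 25; 23; 26; 20; 30; 16; 29; 19; 14; 0; 13; 3; 9; 7; 10; 4; 11; 5; 8; 6; 12; 2; 15; 1];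
 [:: 75; 69; 72; 70; 76; 66; 79; 65; 78; 64; 77; 67; 73; 71; 74; 68; 89; 87; 90; 84; 94; 80; 93; 83; 92; 82; 95; 81; 91; 85; 88; 86; 107; 101; 104; 102; 108; 98; 111; 97; 110; 96; 109; 99; 105; 103; 106; 100; 121; 119; 122; 116; 126; 112; 125; 115; 124; 114; 127; 113; 123; 117; 120; 118; 61; 51; 62; 48; 58; 52; 57; 55; 56; 54; 59; 53; 63; 49; 60; 50; 47; 33; 44; 34; 40; 38; 43; 37; 42; 36; 41; 39; 45; 35; 46; 32; 29; 19; 30; 16; 26; 20; 25; 23; 24; 22; 27; 21; 31; 17; 28; 18; 15; 1; 12; 2; 8; 6; 11; 5; 10; 4; 9; 7; 13; 3; 14; 0];
 [:: 76; 66; 79; 65; 75; 69; 72; 70; 73; 71; 74; 68; 78; 64; 77; 67; 94; 80; 93; 83; 89; 87; 90; 84; 91; 85; 88; 86; 92; 82; 95; 81; 108; 98; 111; 97; 107; 101; 104; 102; 105; 103; 106; 100; 110; 96; 109; 99; 126; 112; 125; 115; 121; 119; 122; 116; 123; 117; 120; 118; 124; 114; 127; 113; 58; 52; 57; 55; 61; 51; 62; 48; 63; 49; 60; 50; 56; 54; 59; 53; 40; 38; 43; 37; 47; 33; 44; 34; 45; 35; 46; 32; 42; 36; 41; 39; 26; 20; 25; 23; 29; 19; 30; 16; 31; 17; 28; 18; 24; 22; 27; 21; 8; 6; 11; 5; 15; 1; 12; 2; 13; 3; 14; 0; 10; 4; 9; 7];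
 [:: 77; 67; 78; 64; 74; 68; 73; 71; 72; 70; 75; 69; 79; 65; 76; 66; 95; 81; 92; 82; 88; 86; 91; 85; 90; 84; 89; 87; 93; 83; 94; 80; 109; 99; 110; 96; 106; 100; 105; 103; 104; 102; 107; 101; 111; 97; 108; 98; 127; 113; 124; 114; 120; 118; 123; 117; 122; 116; 121; 119; 125; 115; 126; 112; 59; 53; 56; 54; 60; 50; 63; 49; 62; 48; 61; 51; 57; 55; 58; 52; 41; 39; 42; 36; 46; 32; 45; 35; 44; 34; 47; 33; 43; 37; 40; 38; 27; 21; 24; 22; 28; 18; 31; 17; 30; 16; 29; 19; 25; 23; 26; 20; 9; 7; 10; 4; 14; 0; 13; 3; 12; 2; 15; 1; 11; 5; 8; 6];
 [:: 78; 64; 77; 67; 73; 71; 74; 68; 75; 69; 72; 70; 76; 66; 79; 65; 92; 82; 95; 81; 91; 85; 88; 86; 89; 87; 90; 84; 94; 80; 93; 83; 110; 96; 109; 99; 105; 103; 106; 100; 107; 101; 104; 102; 108; 98; 111; 97; 124; 114; 127; 113; 123; 117; 120; 118; 121; 119; 122; 116; 126; 112; 125; 115; 56; 54; 59; 53; 63; 49; 60; 50; 61; 51; 62; 48; 58; 52; 57; 55; 42; 36; 41; 39; 45; 35; 46; 32; 47; 33; 44; 34; 40; 38; 43; 37; 24; 22; 27; 21; 31; 17; 28; 18; 29; 19; 30; 16; 26; 20; 25; 23; 10; 4; 9; 7; 13; 3; 14; 0; 15; 1; 12; 2; 8; 6; 11; 5];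
 [:: 79; 65; 76; 66; 72; 70; 75; 69; 74; 68; 73; 71; 77; 67; 78; 64; 93; 83; 94; 80; 90; 84; 89; 87; 88; 86; 91; 85; 95; 81; 92; 82; 111; 97; 108; 98; 104; 102; 107; 101; 106; 100; 105; 103; 109; 99; 110; 96; 125; 115; 126; 112; 122; 116; 121; 119; 120; 118; 123; 117; 127; 113; 124; 114; 57; 55; 58; 52; 62; 48; 61; 51; 60; 50; 63; 49; 59; 53; 56; 54; 43; 37; 40; 38; 44; 34; 47; 33; 46; 32; 45; 35; 41; 39; 42; 36; 25; 23; 26; 20; 30; 16; 29; 19; 28; 18; 31; 17; 27; 21; 24; 22; 11; 5; 8; 6; 12; 2; 15; 1; 14; 0; 13; 3; 9; 7; 10; 4];
 [:: 80; 94; 83; 93; 88; 86; 91; 85; 90; 84; 89; 87; 82; 92; 81; 95; 66; 76; 65; 79; 74; 68; 73; 71; 72; 70; 75; 69; 64; 78; 67; 77; 112; 126; 115; 125; 120; 118; 123; 117; 122; 116; 121; 119; 114; 124; 113; 127; 98; 108; 97; 111; 106; 100; 105; 103; 104; 102; 107; 101; 96; 110; 99; 109; 40; 38; 43; 37; 32; 46; 35; 45; 34; 44; 33; 47; 42; 36; 41; 39; 58; 52; 57; 55; 50; 60; 49; 63; 48; 62; 51; 61; 56; 54; 59; 53; 8; 6; 11; 5; 0; 14; 3; 13; 2; 12; 1; 15; 10; 4; 9; 7; 26; 20; 25; 23; 18; 28; 17; 31; 16; 30; 19; 29; 24; 22; 27; 21];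
 [:: 81; 95; 82; 92; 89; 87; 90; 84; 91; 85; 88; 86; 83; 93; 80; 94; 67; 77; 64; 78; 75; 69; 72; 70; 73; 71; 74; 68; 65; 79; 66; 76; 113; 127; 114; 124; 121; 119; 122; 116; 123; 117; 120; 118; 115; 125; 112; 126; 99; 109; 96; 110; 107; 101; 104; 102; 105; 103; 106; 100; 97; 111; 98; 108; 41; 39; 42; 36; 33; 47; 34; 44; 35; 45; 32; 46; 43; 37; 40; 38; 59; 53; 56; 54; 51; 61; 48; 62; 49; 63; 50; 60; 57; 55; 58; 52; 9; 7; 10; 4; 1; 15; 2; 12; 3; 13; 0; 14; 11; 5; 8; 6; 27; 21; 24; 22; 19; 29; 16; 30; 17; 31; 18; 28; 25; 23; 26; 20];
 [:: 82; 92; 81; 95; 90; 84; 89; 87; 88; 86; 91; 85; 80; 94; 83; 93; 64; 78; 67; 77; 72; 70; 75; 69; 74; 68; 73; 71; 66; 76; 65; 79; 114; 124; 113; 127; 122; 116; 121; 119; 120; 118; 123; 117; 112; 126; 115; 125; 96; 110; 99; 109; 104; 102; 107; 101; 106; 100; 105; 103; 98; 108; 97; 111; 42; 36; 41; 39; 34; 44; 33; 47; 32; 46; 35; 45; 40; 38; 43; 37; 56; 54; 59; 53; 48; 62; 51; 61; 50; 60; 49; 63; 58; 52; 57; 55; 10; 4; 9; 7; 2; 12; 1; 15; 0; 14; 3; 13; 8; 6; 11; 5; 24; 22; 27; 21; 16; 30; 19; 29; 18; 28; 17; 31; 26; 20; 25; 23];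
 [:: 83; 93; 80; 94; 91; 85; 88; 86; 89; 87; 90; 84; 81; 95; 82; 92; 65; 79; 66; 76; 73; 71; 74; 68; 75; 69; 72; 70; 67; 77; 64; 78; 115; 125; 112; 126; 123; 117; 120; 118; 121; 119; 122; 116; 113; 127; 114; 124; 97; 111; 98; 108; 105; 103; 106; 100; 107; 101; 104; 102; 99; 109; 96; 110; 43; 37; 40; 38; 35; 45; 32; 46; 33; 47; 34; 44; 41; 39; 42; 36; 57; 55; 58; 52; 49; 63; 50; 60; 51; 61; 48; 62; 59; 53; 56; 54; 11; 5; 8; 6; 3; 13; 0; 14; 1; 15; 2; 12; 9; 7; 10; 4; 25; 23; 26; 20; 17; 31; 18; 28; 19; 29; 16; 30; 27; 21; 24; 22];
 [:: 84; 90; 87; 89; 92; 82; 95; 81; 94; 80; 93; 83; 86; 88; 85; 91; 70; 72; 69; 75; 78; 64; 77; 67; 76; 66; 79; 65; 68; 74; 71; 73; 116; 122; 119; 121; 124; 114; 127; 113; 126; 112; 125; 115; 118; 120; 117; 123; 102; 104; 101; 107; 110; 96; 109; 99; 108; 98; 111; 97; 100; 106; 103; 105; 44; 34; 47; 33; 36; 42; 39; 41; 38; 40; 37; 43; 46; 32; 45; 35; 62; 48; 61; 51; 54; 56; 53; 59; 52; 58; 55; 57; 60; 50; 63; 49; 12; 2; 15; 1; 4; 10; 7; 9; 6; 8; 5; 11; 14; 0; 13; 3; 30; 16; 29; 19; 22; 24; 21; 27; 20; 26; 23; 25; 28; 18; 31; 17];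
 [:: 85; 91; 86; 88; 93; 83; 94; 80; 95; 81; 92; 82; 87; 89; 84; 90; 71; 73; 68; 74; 79; 65; 76; 66; 77; 67; 78; 64; 69; 75; 70; 72; 117; 123; 118; 120; 125; 115; 126; 112; 127; 113; 124; 114; 119; 121; 116; 122; 103; 105; 100; 106; 111; 97; 108; 98; 109; 99; 110; 96; 101; 107; 102; 104; 45; 35; 46; 32; 37; 43; 38; 40; 39; 41; 36; 42; 47; 33; 44; 34; 63; 49; 60; 50; 55; 57; 52; 58; 53; 59; 54; 56; 61; 51; 62; 48; 13; 3; 14; 0; 5; 11; 6; 8; 7; 9; 4; 10; 15; 1; 12; 2; 31; 17; 28; 18; 23; 25; 20; 26; 21; 27; 22; 24; 29; 19; 30; 16];
 [:: 86; 88; 85; 91; 94; 80; 93; 83; 92; 82; 95; 81; 84; 90; 87; 89; 68; 74; 71; 73; 76; 66; 79; 65; 78; 64; 77; 67; 70; 72; 69; 75; 118; 120; 117; 123; 126; 112; 125; 115; 124; 114; 127; 113; 116; 122; 119; 121; 100; 106; 103; 105; 108; 98; 111; 97; 110; 96; 109; 99; 102; 104; 101; 107; 46; 32; 45; 35; 38; 40; 37; 43; 36; 42; 39; 41; 44; 34; 47; 33; 60; 50; 63; 49; 52; 58; 55; 57; 54; 56; 53; 59; 62; 48; 61; 51; 14; 0; 13; 3; 6; 8; 5; 11; 4; 10; 7; 9; 12; 2; 15; 1; 28; 18; 31; 17; 20; 26; 23; 25; 22; 24; 21; 27; 30; 16; 29; 19];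
 [:: 87; 89; 84; 90; 95; 81; 92; 82; 93; 83; 94; 80; 85; 91; 86; 88; 69; 75; 70; 72; 77; 67; 78; 64; 79; 65; 76; 66; 71; 73; 68; 74; 119; 121; 116; 122; 127; 113; 124; 114; 125; 115; 126; 112; 117; 123; 118; 120; 101; 107; 102; 104; 109; 99; 110; 96; 111; 97; 108; 98; 103; 105; 100; 106; 47; 33; 44; 34; 39; 41; 36; 42; 37; 43; 38; 40; 45; 35; 46; 32; 61; 51; 62; 48; 53; 59; 54; 56; 55; 57; 52; 58; 63; 49; 60; 50; 15; 1; 12; 2; 7; 9; 4; 10; 5; 11; 6; 8; 13; 3; 14; 0; 29; 19; 30; 16; 21; 27; 22; 24; 23; 25; 20; 26; 31; 17; 28; 18];
 [:: 88; 86; 91; 85; 80; 94; 83; 93; 82; 92; 81; 95; 90; 84; 89; 87; 74; 68; 73; 71; 66; 76; 65; 79; 64; 78; 67; 77; 72; 70; 75; 69; 120; 118; 123; 117; 112; 126; 115; 125; 114; 124; 113; 127; 122; 116; 121; 119; 106; 100; 105; 103; 98; 108; 97; 111; 96; 110; 99; 109; 104; 102; 107; 101; 32; 46; 35; 45; 40; 38; 43; 37; 42; 36; 41; 39; 34; 44; 33; 47; 50; 60; 49; 63; 58; 52; 57; 55; 56; 54; 59; 53; 48; 62; 51; 61; 0; 14; 3; 13; 8; 6; 11; 5; 10; 4; 9; 7; 2; 12; 1; 15; 18; 28; 17; 31; 26; 20; 25; 23; 24; 22; 27; 21; 16; 30; 19; 29];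
 [:: 89; 87; 90; 84; 81; 95; 82; 92; 83; 93; 80; 94; 91; 85; 88; 86; 75; 69; 72; 70; 67; 77; 64; 78; 65; 79; 66; 76; 73; 71; 74; 68; 121; 119; 122; 116; 113; 127; 114; 124; 115; 125; 112; 126; 123; 117; 120; 118; 107; 101; 104; 102; 99; 109; 96; 110; 97; 111; 98; 108; 105; 103; 106; 100; 33; 47; 34; 44; 41; 39; 42; 36; 43; 37; 40; 38; 35; 45; 32; 46; 51; 61; 48; 62; 59; 53; 56; 54; 57; 55; 58; 52; 49; 63; 50; 60; 1; 15; 2; 12; 9; 7; 10; 4; 11; 5; 8; 6; 3; 13; 0; 14; 19; 29; 16; 30; 27; 21; 24; 22; 25; 23; 26; 20; 17; 31; 18; 28];
 [:: 90; 84; 89; 87; 82; 92; 81; 95; 80; 94; 83; 93; 88; 86; 91; 85; 72; 70; 75; 69; 64; 78; 67; 77; 66; 76; 65; 79; 74; 68; 73; 71; 122; 116; 121; 119; 114; 124; 113; 127; 112; 126; 115; 125; 120; 118; 123; 117; 104; 102; 107; 101; 96; 110; 99; 109; 98; 108; 97; 111; 106; 100; 105; 103; 34; 44; 33; 47; 42; 36; 41; 39; 40; 38; 43; 37; 32; 46; 35; 45; 48; 62; 51; 61; 56; 54; 59; 53; 58; 52; 57; 55; 50; 60; 49; 63; 2; 12; 1; 15; 10; 4; 9; 7; 8; 6; 11; 5; 0; 14; 3; 13; 16; 30; 19; 29; 24; 22; 27; 21; 26; 20; 25; 23; 18; 28; 17; 31];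
 [:: 91; 85; 88; 86; 83; 93; 80; 94; 81; 95; 82; 92; 89; 87; 90; 84; 73; 71; 74; 68; 65; 79; 66; 76; 67; 77; 64; 78; 75; 69; 72; 70; 123; 117; 120; 118; 115; 125; 112; 126; 113; 127; 114; 124; 121; 119; 122; 116; 105; 103; 106; 100; 97; 111; 98; 108; 99; 109; 96; 110; 107; 101; 104; 102; 35; 45; 32; 46; 43; 37; 40; 38; 41; 39; 42; 36; 33; 47; 34; 44; 49; 63; 50; 60; 57; 55; 58; 52; 59; 53; 56; 54; 51; 61; 48; 62; 3; 13; 0; 14; 11; 5; 8; 6; 9; 7; 10; 4; 1; 15; 2; 12; 17; 31; 18; 28; 25; 23; 26; 20; 27; 21; 24; 22; 19; 29; 16; 30];
 [:: 92; 82; 95; 81; 84; 90; 87; 89; 86; 88; 85; 91; 94; 80; 93; 83; 78; 64; 77; 67; 70; 72; 69; 75; 68; 74; 71; 73; 76; 66; 79; 65; 124; 114; 127; 113; 116; 122; 119; 121; 118; 120; 117; 123; 126; 112; 125; 115; 110; 96; 109; 99; 102; 104; 101; 107; 100; 106; 103; 105; 108; 98; 111; 97; 36; 42; 39; 41; 44; 34; 47; 33; 46; 32; 45; 35; 38; 40; 37; 43; 54; 56; 53; 59; 62; 48; 61; 51; 60; 50; 63; 49; 52; 58; 55; 57; 4; 10; 7; 9; 12; 2; 15; 1; 14; 0; 13; 3; 6; 8; 5; 11; 22; 24; 21; 27; 30; 16; 29; 19; 28; 18; 31; 17; 20; 26; 23; 25];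
 [:: 93; 83; 94; 80; 85; 91; 86; 88; 87; 89; 84; 90; 95; 81; 92; 82; 79; 65; 76; 66; 71; 73; 68; 74; 69; 75; 70; 72; 77; 67; 78; 64; 125; 115; 126; 112; 117; 123; 118; 120; 119; 121; 116; 122; 127; 113; 124; 114; 111; 97; 108; 98; 103; 105; 100; 106; 101; 107; 102; 104; 109; 99; 110; 96; 37; 43; 38; 40; 45; 35; 46; 32; 47; 33; 44; 34; 39; 41; 36; 42; 55; 57; 52; 58; 63; 49; 60; 50; 61; 51; 62; 48; 53; 59; 54; 56; 5; 11; 6; 8; 13; 3; 14; 0; 15; 1; 12; 2; 7; 9; 4; 10; 23; 25; 20; 26; 31; 17; 28; 18; 29; 19; 30; 16; 21; 27; 22; 24];
 [:: 94; 80; 93; 83; 86; 88; 85; 91; 84; 90; 87; 89; 92; 82; 95; 81; 76; 66; 79; 65; 68; 74; 71; 73; 70; 72; 69; 75; 78; 64; 77; 67; 126; 112; 125; 115; 118; 120; 117; 123; 116; 122; 119; 121; 124; 114; 127; 113; 108; 98; 111; 97; 100; 106; 103; 105; 102; 104; 101; 107; 110; 96; 109; 99; 38; 40; 37; 43; 46; 32; 45; 35; 44; 34; 47; 33; 36; 42; 39; 41; 52; 58; 55; 57; 60; 50; 63; 49; 62; 48; 61; 51; 54; 56; 53; 59; 6; 8; 5; 11; 14; 0; 13; 3; 12; 2; 15; 1; 4; 10; 7; 9; 20; 26; 23; 25; 28; 18; 31; 17; 30; 16; 29; 19; 22; 24; 21; 27];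
 [:: 95; 81; 92; 82; 87; 89; 84; 90; 85; 91; 86; 88; 93; 83; 94; 80; 77; 67; 78; 64; 69; 75; 70; 72; 71; 73; 68; 74; 79; 65; 76; 66; 127; 113; 124; 114; 119; 121; 116; 122; 117; 123; 118; 120; 125; 115; 126; 112; 109; 99; 110; 96; 101; 107; 102; 104; 103; 105; 100; 106; 111; 97; 108; 98; 39; 41; 36; 42; 47; 33; 44; 34; 45; 35; 46; 32; 37; 43; 38; 40; 53; 59; 54; 56; 61; 51; 62; 48; 63; 49; 60; 50; 55; 57; 52; 58; 7; 9; 4; 10; 15; 1; 12; 2; 13; 3; 14; 0; 5; 11; 6; 8; 21; 27; 22; 24; 29; 19; 30; 16; 31; 17; 28; 18; 23; 25; 20; 26];
 [:: 96; 110; 108; 98; 105; 103; 101; 107; 100; 106; 104; 102; 109; 99; 97; 111; 124; 114; 112; 126; 117; 123; 121; 119; 120; 118; 116; 122; 113; 127; 125; 115; 64; 78; 76; 66; 73; 71; 69; 75; 68; 74; 72; 70; 77; 67; 65; 79; 92; 82; 80; 94; 85; 91; 89; 87; 88; 86; 84; 90; 81; 95; 93; 83; 24; 22; 20; 26; 17; 31; 29; 19; 28; 18; 16; 30; 21; 27; 25; 23; 4; 10; 8; 6; 13; 3; 1; 15; 0; 14; 12; 2; 9; 7; 5; 11; 56; 54; 52; 58; 49; 63; 61; 51; 60; 50; 48; 62; 53; 59; 57; 55; 36; 42; 40; 38; 45; 35; 33; 47; 32; 46; 44; 34; 41; 39; 37; 43];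
 [:: 97; 111; 109; 99; 104; 102; 100; 106; 101; 107; 105; 103; 108; 98; 96; 110; 125; 115; 113; 127; 116; 122; 120; 118; 121; 119; 117; 123; 112; 126; 124; 114; 65; 79; 77; 67; 72; 70; 68; 74; 69; 75; 73; 71; 76; 66; 64; 78; 93; 83; 81; 95; 84; 90; 88; 86; 89; 87; 85; 91; 80; 94; 92; 82; 25; 23; 21; 27; 16; 30; 28; 18; 29; 19; 17; 31; 20; 26; 24; 22; 5; 11; 9; 7; 12; 2; 0; 14; 1; 15; 13; 3; 8; 6; 4; 10; 57; 55; 53; 59; 48; 62; 60; 50; 61; 51; 49; 63; 52; 58; 56; 54; 37; 43; 41; 39; 44; 34; 32; 46; 33; 47; 45; 35; 40; 38; 36; 42];
 [:: 98; 108; 110; 96; 107; 101; 103; 105; 102; 104; 106; 100; 111; 97; 99; 109; 126; 112; 114; 124; 119; 121; 123; 117; 122; 116; 118; 120; 115; 125; 127; 113; 66; 76; 78; 64; 75; 69; 71; 73; 70; 72; 74; 68; 79; 65; 67; 77; 94; 80; 82; 92; 87; 89; 91; 85; 90; 84; 86; 88; 83; 93; 95; 81; 26; 20; 22; 24; 19; 29; 31; 17; 30; 16; 18; 28; 23; 25; 27; 21; 6; 8; 10; 4; 15; 1; 3; 13; 2; 12; 14; 0; 11; 5; 7; 9; 58; 52; 54; 56; 51; 61; 63; 49; 62; 48; 50; 60; 55; 57; 59; 53; 38; 40; 42; 36; 47; 33; 35; 45; 34; 44; 46; 32; 43; 37; 39; 41];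
 [:: 99; 109; 111; 97; 106; 100; 102; 104; 103; 105; 107; 101; 110; 96; 98; 108; 127; 113; 115; 125; 118; 120; 122; 116; 123; 117; 119; 121; 114; 124; 126; 112; 67; 77; 79; 65; 74; 68; 70; 72; 71; 73; 75; 69; 78; 64; 66; 76; 95; 81; 83; 93; 86; 88; 90; 84; 91; 85; 87; 89; 82; 92; 94; 80; 27; 21; 23; 25; 18; 28; 30; 16; 31; 17; 19; 29; 22; 24; 26; 20; 7; 9; 11; 5; 14; 0; 2; 12; 3; 13; 15; 1; 10; 4; 6; 8; 59; 53; 55; 57; 50; 60; 62; 48; 63; 49; 51; 61; 54; 56; 58; 52; 39; 41; 43; 37; 46; 32; 34; 44; 35; 45; 47; 33; 42; 36; 38; 40];
 [:: 100; 106; 104; 102; 109; 99; 97; 111; 96; 110; 108; 98; 105; 103; 101; 107; 120; 118; 116; 122; 113; 127; 125; 115; 124; 114; 112; 126; 117; 123; 121; 119; 68; 74; 72; 70; 77; 67; 65; 79; 64; 78; 76; 66; 73; 71; 69; 75; 88; 86; 84; 90; 81; 95; 93; 83; 92; 82; 80; 94; 85; 91; 89; 87; 28; 18; 16; 30; 21; 27; 25; 23; 24; 22; 20; 26; 17; 31; 29; 19; 0; 14; 12; 2; 9; 7; 5; 11; 4; 10; 8; 6; 13; 3; 1; 15; 60; 50; 48; 62; 53; 59; 57; 55; 56; 54; 52; 58; 49; 63; 61; 51; 32; 46; 44; 34; 41; 39; 37; 43; 36; 42; 40; 38; 45; 35; 33; 47];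
 [:: 101; 107; 105; 103; 108; 98; 96; 110; 97; 111; 109; 99; 104; 102; 100; 106; 121; 119; 117; 123; 112; 126; 124; 114; 125; 115; 113; 127; 116; 122; 120; 118; 69; 75; 73; 71; 76; 66; 64; 78; 65; 79; 77; 67; 72; 70; 68; 74; 89; 87; 85; 91; 80; 94; 92; 82; 93; 83; 81; 95; 84; 90; 88; 86; 29; 19; 17; 31; 20; 26; 24; 22; 25; 23; 21; 27; 16; 30; 28; 18; 1; 15; 13; 3; 8; 6; 4; 10; 5; 11; 9; 7; 12; 2; 0; 14; 61; 51; 49; 63; 52; 58; 56; 54; 57; 55; 53; 59; 48; 62; 60; 50; 33; 47; 45; 35; 40; 38; 36; 42; 37; 43; 41; 39; 44; 34; 32; 46];
 [:: 102; 104; 106; 100; 111; 97; 99; 109; 98; 108; 110; 96; 107; 101; 103; 105; 122; 116; 118; 120; 115; 125; 127; 113; 126; 112; 114; 124; 119; 121; 123; 117; 70; 72; 74; 68; 79; 65; 67; 77; 66; 76; 78; 64; 75; 69; 71; 73; 90; 84; 86; 88; 83; 93; 95; 81; 94; 80; 82; 92; 87; 89; 91; 85; 30; 16; 18; 28; 23; 25; 27; 21; 26; 20; 22; 24; 19; 29; 31; 17; 2; 12; 14; 0; 11; 5; 7; 9; 6; 8; 10; 4; 15; 1; 3; 13; 62; 48; 50; 60; 55; 57; 59; 53; 58; 52; 54; 56; 51; 61; 63; 49; 34; 44; 46; 32; 43; 37; 39; 41; 38; 40; 42; 36; 47; 33; 35; 45];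
 [:: 103; 105; 107; 101; 110; 96; 98; 108; 99; 109; 111; 97; 106; 100; 102; 104; 123; 117; 119; 121; 114; 124; 126; 112; 127; 113; 115; 125; 118; 120; 122; 116; 71; 73; 75; 69; 78; 64; 66; 76; 67; 77; 79; 65; 74; 68; 70; 72; 91; 85; 87; 89; 82; 92; 94; 80; 95; 81; 83; 93; 86; 88; 90; 84; 31; 17; 19; 29; 22; 24; 26; 20; 27; 21; 23; 25; 18; 28; 30; 16; 3; 13; 15; 1; 10; 4; 6; 8; 7; 9; 11; 5; 14; 0; 2; 12; 63; 49; 51; 61; 54; 56; 58; 52; 59; 53; 55; 57; 50; 60; 62; 48; 35; 45; 47; 33; 42; 36; 38; 40; 39; 41; 43; 37; 46; 32; 34; 44];
 [:: 104; 102; 100; 106; 97; 111; 109; 99; 108; 98; 96; 110; 101; 107; 105; 103; 116; 122; 120; 118; 125; 115; 113; 127; 112; 126; 124; 114; 121; 119; 117; 123; 72; 70; 68; 74; 65; 79; 77; 67; 76; 66; 64; 78; 69; 75; 73; 71; 84; 90; 88; 86; 93; 83; 81; 95; 80; 94; 92; 82; 89; 87; 85; 91; 16; 30; 28; 18; 25; 23; 21; 27; 20; 26; 24; 22; 29; 19; 17; 31; 12; 2; 0; 14; 5; 11; 9; 7; 8; 6; 4; 10; 1; 15; 13; 3; 48; 62; 60; 50; 57; 55; 53; 59; 52; 58; 56; 54; 61; 51; 49; 63; 44; 34; 32; 46; 37; 43; 41; 39; 40; 38; 36; 42; 33; 47; 45; 35];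
 [:: 105; 103; 101; 107; 96; 110; 108; 98; 109; 99; 97; 111; 100; 106; 104; 102; 117; 123; 121; 119; 124; 114; 112; 126; 113; 127; 125; 115; 120; 118; 116; 122; 73; 71; 69; 75; 64; 78; 76; 66; 77; 67; 65; 79; 68; 74; 72; 70; 85; 91; 89; 87; 92; 82; 80; 94; 81; 95; 93; 83; 88; 86; 84; 90; 17; 31; 29; 19; 24; 22; 20; 26; 21; 27; 25; 23; 28; 18; 16; 30; 13; 3; 1; 15; 4; 10; 8; 6; 9; 7; 5; 11; 0; 14; 12; 2; 49; 63; 61; 51; 56; 54; 52; 58; 53; 59; 57; 55; 60; 50; 48; 62; 45; 35; 33; 47; 36; 42; 40; 38; 41; 39; 37; 43; 32; 46; 44; 34];
 [:: 106; 100; 102; 104; 99; 109; 111; 97; 110; 96; 98; 108; 103; 105; 107; 101; 118; 120; 122; 116; 127; 113; 115; 125; 114; 124; 126; 112; 123; 117; 119; 121; 74; 68; 70; 72; 67; 77; 79; 65; 78; 64; 66; 76; 71; 73; 75; 69; 86; 88; 90; 84; 95; 81; 83; 93; 82; 92; 94; 80; 91; 85; 87; 89; 18; 28; 30; 16; 27; 21; 23; 25; 22; 24; 26; 20; 31; 17; 19; 29; 14; 0; 2; 12; 7; 9; 11; 5; 10; 4; 6; 8; 3; 13; 15; 1; 50; 60; 62; 48; 59; 53; 55; 57; 54; 56; 58; 52; 63; 49; 51; 61; 46; 32; 34; 44; 39; 41; 43; 37; 42; 36; 38; 40; 35; 45; 47; 33];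
 [:: 107; 101; 103; 105; 98; 108; 110; 96; 111; 97; 99; 109; 102; 104; 106; 100; 119; 121; 123; 117; 126; 112; 114; 124; 115; 125; 127; 113; 122; 116; 118; 120; 75; 69; 71; 73; 66; 76; 78; 64; 79; 65; 67; 77; 70; 72; 74; 68; 87; 89; 91; 85; 94; 80; 82; 92; 83; 93; 95; 81; 90; 84; 86; 88; 19; 29; 31; 17; 26; 20; 22; 24; 23; 25; 27; 21; 30; 16; 18; 28; 15; 1; 3; 13; 6; 8; 10; 4; 11; 5; 7; 9; 2; 12; 14; 0; 51; 61; 63; 49; 58; 52; 54; 56; 55; 57; 59; 53; 62; 48; 50; 60; 47; 33; 35; 45; 38; 40; 42; 36; 43; 37; 39; 41; 34; 44; 46; 32];
 [:: 108; 98; 96; 110; 101; 107; 105; 103; 104; 102; 100; 106; 97; 111; 109; 99; 112; 126; 124; 114; 121; 119; 117; 123; 116; 122; 120; 118; 125; 115; 113; 127; 76; 66; 64; 78; 69; 75; 73; 71; 72; 70; 68; 74; 65; 79; 77; 67; 80; 94; 92; 82; 89; 87; 85; 91; 84; 90; 88; 86; 93; 83; 81; 95; 20; 26; 24; 22; 29; 19; 17; 31; 16; 30; 28; 18; 25; 23; 21; 27; 8; 6; 4; 10; 1; 15; 13; 3; 12; 2; 0; 14; 5; 11; 9; 7; 52; 58; 56; 54; 61; 51; 49; 63; 48; 62; 60; 50; 57; 55; 53; 59; 40; 38; 36; 42; 33; 47; 45; 35; 44; 34; 32; 46; 37; 43; 41; 39];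
 [:: 109; 99; 97; 111; 100; 106; 104; 102; 105; 103; 101; 107; 96; 110; 108; 98; 113; 127; 125; 115; 120; 118; 116; 122; 117; 123; 121; 119; 124; 114; 112; 126; 77; 67; 65; 79; 68; 74; 72; 70; 73; 71; 69; 75; 64; 78; 76; 66; 81; 95; 93; 83; 88; 86; 84; 90; 85; 91; 89; 87; 92; 82; 80; 94; 21; 27; 25; 23; 28; 18; 16; 30; 17; 31; 29; 19; 24; 22; 20; 26; 9; 7; 5; 11; 0; 14; 12; 2; 13; 3; 1; 15; 4; 10; 8; 6; 53; 59; 57; 55; 60; 50; 48; 62; 49; 63; 61; 51; 56; 54; 52; 58; 41; 39; 37; 43; 32; 46; 44; 34; 45; 35; 33; 47; 36; 42; 40; 38];
 [:: 110; 96; 98; 108; 103; 105; 107; 101; 106; 100; 102; 104; 99; 109; 111; 97; 114; 124; 126; 112; 123; 117; 119; 121; 118; 120; 122; 116; 127; 113; 115; 125; 78; 64; 66; 76; 71; 73; 75; 69; 74; 68; 70; 72; 67; 77; 79; 65; 82; 92; 94; 80; 91; 85; 87; 89; 86; 88; 90; 84; 95; 81; 83; 93; 22; 24; 26; 20; 31; 17; 19; 29; 18; 28; 30; 16; 27; 21; 23; 25; 10; 4; 6; 8; 3; 13; 15; 1; 14; 0; 2; 12; 7; 9; 11; 5; 54; 56; 58; 52; 63; 49; 51; 61; 50; 60; 62; 48; 59; 53; 55; 57; 42; 36; 38; 40; 35; 45; 47; 33; 46; 32; 34; 44; 39; 41; 43; 37];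
 [:: 111; 97; 99; 109; 102; 104; 106; 100; 107; 101; 103; 105; 98; 108; 110; 96; 115; 125; 127; 113; 122; 116; 118; 120; 119; 121; 123; 117; 126; 112; 114; 124; 79; 65; 67; 77; 70; 72; 74; 68; 75; 69; 71; 73; 66; 76; 78; 64; 83; 93; 95; 81; 90; 84; 86; 88; 87; 89; 91; 85; 94; 80; 82; 92; 23; 25; 27; 21; 30; 16; 18; 28; 19; 29; 31; 17; 26; 20; 22; 24; 11; 5; 7; 9; 2; 12; 14; 0; 15; 1; 3; 13; 6; 8; 10; 4; 55; 57; 59; 53; 62; 48; 50; 60; 51; 61; 63; 49; 58; 52; 54; 56; 43; 37; 39; 41; 34; 44; 46; 32; 47; 33; 35; 45; 38; 40; 42; 36];
 [:: 112; 126; 124; 114; 118; 120; 122; 116; 123; 117; 119; 121; 125; 115; 113; 127; 108; 98; 96; 110; 106; 100; 102; 104; 103; 105; 107; 101; 97; 111; 109; 99; 80; 94; 92; 82; 86; 88; 90; 84; 91; 85; 87; 89; 93; 83; 81; 95; 76; 66; 64; 78; 74; 68; 70; 72; 71; 73; 75; 69; 65; 79; 77; 67; 6; 8; 10; 4; 0; 14; 12; 2; 13; 3; 1; 15; 11; 5; 7; 9; 26; 20; 22; 24; 28; 18; 16; 30; 17; 31; 29; 19; 23; 25; 27; 21; 38; 40; 42; 36; 32; 46; 44; 34; 45; 35; 33; 47; 43; 37; 39; 41; 58; 52; 54; 56; 60; 50; 48; 62; 49; 63; 61; 51; 55; 57; 59; 53];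
 [:: 113; 127; 125; 115; 119; 121; 123; 117; 122; 116; 118; 120; 124; 114; 112; 126; 109; 99; 97; 111; 107; 101; 103; 105; 102; 104; 106; 100; 96; 110; 108; 98; 81; 95; 93; 83; 87; 89; 91; 85; 90; 84; 86; 88; 92; 82; 80; 94; 77; 67; 65; 79; 75; 69; 71; 73; 70; 72; 74; 68; 64; 78; 76; 66; 7; 9; 11; 5; 1; 15; 13; 3; 12; 2; 0; 14; 10; 4; 6; 8; 27; 21; 23; 25; 29; 19; 17; 31; 16; 30; 28; 18; 22; 24; 26; 20; 39; 41; 43; 37; 33; 47; 45; 35; 44; 34; 32; 46; 42; 36; 38; 40; 59; 53; 55; 57; 61; 51; 49; 63; 48; 62; 60; 50; 54; 56; 58; 52];
 [:: 114; 124; 126; 112; 116; 122; 120; 118; 121; 119; 117; 123; 127; 113; 115; 125; 110; 96; 98; 108; 104; 102; 100; 106; 101; 107; 105; 103; 99; 109; 111; 97; 82; 92; 94; 80; 84; 90; 88; 86; 89; 87; 85; 91; 95; 81; 83; 93; 78; 64; 66; 76; 72; 70; 68; 74; 69; 75; 73; 71; 67; 77; 79; 65; 4; 10; 8; 6; 2; 12; 14; 0; 15; 1; 3; 13; 9; 7; 5; 11; 24; 22; 20; 26; 30; 16; 18; 28; 19; 29; 31; 17; 21; 27; 25; 23; 36; 42; 40; 38; 34; 44; 46; 32; 47; 33; 35; 45; 41; 39; 37; 43; 56; 54; 52; 58; 62; 48; 50; 60; 51; 61; 63; 49; 53; 59; 57; 55];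
 [:: 115; 125; 127; 113; 117; 123; 121; 119; 120; 118; 116; 122; 126; 112; 114; 124; 111; 97; 99; 109; 105; 103; 101; 107; 100; 106; 104; 102; 98; 108; 110; 96; 83; 93; 95; 81; 85; 91; 89; 87; 88; 86; 84; 90; 94; 80; 82; 92; 79; 65; 67; 77; 73; 71; 69; 75; 68; 74; 72; 70; 66; 76; 78; 64; 5; 11; 9; 7; 3; 13; 15; 1; 14; 0; 2; 12; 8; 6; 4; 10; 25; 23; 21; 27; 31; 17; 19; 29; 18; 28; 30; 16; 20; 26; 24; 22; 37; 43; 41; 39; 35; 45; 47; 33; 46; 32; 34; 44; 40; 38; 36; 42; 57; 55; 53; 59; 63; 49; 51; 61; 50; 60; 62; 48; 52; 58; 56; 54];
 [:: 116; 122; 120; 118; 114; 124; 126; 112; 127; 113; 115; 125; 121; 119; 117; 123; 104; 102; 100; 106; 110; 96; 98; 108; 99; 109; 111; 97; 101; 107; 105; 103; 84; 90; 88; 86; 82; 92; 94; 80; 95; 81; 83; 93; 89; 87; 85; 91; 72; 70; 68; 74; 78; 64; 66; 76; 67; 77; 79; 65; 69; 75; 73; 71; 2; 12; 14; 0; 4; 10; 8; 6; 9; 7; 5; 11; 15; 1; 3; 13; 30; 16; 18; 28; 24; 22; 20; 26; 21; 27; 25; 23; 19; 29; 31; 17; 34; 44; 46; 32; 36; 42; 40; 38; 41; 39; 37; 43; 47; 33; 35; 45; 62; 48; 50; 60; 56; 54; 52; 58; 53; 59; 57; 55; 51; 61; 63; 49];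
 [:: 117; 123; 121; 119; 115; 125; 127; 113; 126; 112; 114; 124; 120; 118; 116; 122; 105; 103; 101; 107; 111; 97; 99; 109; 98; 108; 110; 96; 100; 106; 104; 102; 85; 91; 89; 87; 83; 93; 95; 81; 94; 80; 82; 92; 88; 86; 84; 90; 73; 71; 69; 75; 79; 65; 67; 77; 66; 76; 78; 64; 68; 74; 72; 70; 3; 13; 15; 1; 5; 11; 9; 7; 8; 6; 4; 10; 14; 0; 2; 12; 31; 17; 19; 29; 25; 23; 21; 27; 20; 26; 24; 22; 18; 28; 30; 16; 35; 45; 47; 33; 37; 43; 41; 39; 40; 38; 36; 42; 46; 32; 34; 44; 63; 49; 51; 61; 57; 55; 53; 59; 52; 58; 56; 54; 50; 60; 62; 48];
 [:: 118; 120; 122; 116; 112; 126; 124; 114; 125; 115; 113; 127; 123; 117; 119; 121; 106; 100; 102; 104; 108; 98; 96; 110; 97; 111; 109; 99; 103; 105; 107; 101; 86; 88; 90; 84; 80; 94; 92; 82; 93; 83; 81; 95; 91; 85; 87; 89; 74; 68; 70; 72; 76; 66; 64; 78; 65; 79; 77; 67; 71; 73; 75; 69; 0; 14; 12; 2; 6; 8; 10; 4; 11; 5; 7; 9; 13; 3; 1; 15; 28; 18; 16; 30; 26; 20; 22; 24; 23; 25; 27; 21; 17; 31; 29; 19; 32; 46; 44; 34; 38; 40; 42; 36; 43; 37; 39; 41; 45; 35; 33; 47; 60; 50; 48; 62; 58; 52; 54; 56; 55; 57; 59; 53; 49; 63; 61; 51];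
 [:: 119; 121; 123; 117; 113; 127; 125; 115; 124; 114; 112; 126; 122; 116; 118; 120; 107; 101; 103; 105; 109; 99; 97; 111; 96; 110; 108; 98; 102; 104; 106; 100; 87; 89; 91; 85; 81; 95; 93; 83; 92; 82; 80; 94; 90; 84; 86; 88; 75; 69; 71; 73; 77; 67; 65; 79; 64; 78; 76; 66; 70; 72; 74; 68; 1; 15; 13; 3; 7; 9; 11; 5; 10; 4; 6; 8; 12; 2; 0; 14; 29; 19; 17; 31; 27; 21; 23; 25; 22; 24; 26; 20; 16; 30; 28; 18; 33; 47; 45; 35; 39; 41; 43; 37; 42; 36; 38; 40; 44; 34; 32; 46; 61; 51; 49; 63; 59; 53; 55; 57; 54; 56; 58; 52; 48; 62; 60; 50];
 [:: 120; 118; 116; 122; 126; 112; 114; 124; 115; 125; 127; 113; 117; 123; 121; 119; 100; 106; 104; 102; 98; 108; 110; 96; 111; 97; 99; 109; 105; 103; 101; 107; 88; 86; 84; 90; 94; 80; 82; 92; 83; 93; 95; 81; 85; 91; 89; 87; 68; 74; 72; 70; 66; 76; 78; 64; 79; 65; 67; 77; 73; 71; 69; 75; 14; 0; 2; 12; 8; 6; 4; 10; 5; 11; 9; 7; 3; 13; 15; 1; 18; 28; 30; 16; 20; 26; 24; 22; 25; 23; 21; 27; 31; 17; 19; 29; 46; 32; 34; 44; 40; 38; 36; 42; 37; 43; 41; 39; 35; 45; 47; 33; 50; 60; 62; 48; 52; 58; 56; 54; 57; 55; 53; 59; 63; 49; 51; 61];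
 [:: 121; 119; 117; 123; 127; 113; 115; 125; 114; 124; 126; 112; 116; 122; 120; 118; 101; 107; 105; 103; 99; 109; 111; 97; 110; 96; 98; 108; 104; 102; 100; 106; 89; 87; 85; 91; 95; 81; 83; 93; 82; 92; 94; 80; 84; 90; 88; 86; 69; 75; 73; 71; 67; 77; 79; 65; 78; 64; 66; 76; 72; 70; 68; 74; 15; 1; 3; 13; 9; 7; 5; 11; 4; 10; 8; 6; 2; 12; 14; 0; 19; 29; 31; 17; 21; 27; 25; 23; 24; 22; 20; 26; 30; 16; 18; 28; 47; 33; 35; 45; 41; 39; 37; 43; 36; 42; 40; 38; 34; 44; 46; 32; 51; 61; 63; 49; 53; 59; 57; 55; 56; 54; 52; 58; 62; 48; 50; 60];
 [:: 122; 116; 118; 120; 124; 114; 112; 126; 113; 127; 125; 115; 119; 121; 123; 117; 102; 104; 106; 100; 96; 110; 108; 98; 109; 99; 97; 111; 107; 101; 103; 105; 90; 84; 86; 88; 92; 82; 80; 94; 81; 95; 93; 83; 87; 89; 91; 85; 70; 72; 74; 68; 64; 78; 76; 66; 77; 67; 65; 79; 75; 69; 71; 73; 12; 2; 0; 14; 10; 4; 6; 8; 7; 9; 11; 5; 1; 15; 13; 3; 16; 30; 28; 18; 22; 24; 26; 20; 27; 21; 23; 25; 29; 19; 17; 31; 44; 34; 32; 46; 42; 36; 38; 40; 39; 41; 43; 37; 33; 47; 45; 35; 48; 62; 60; 50; 54; 56; 58; 52; 59; 53; 55; 57; 61; 51; 49; 63];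
 [:: 123; 117; 119; 121; 125; 115; 113; 127; 112; 126; 124; 114; 118; 120; 122; 116; 103; 105; 107; 101; 97; 111; 109; 99; 108; 98; 96; 110; 106; 100; 102; 104; 91; 85; 87; 89; 93; 83; 81; 95; 80; 94; 92; 82; 86; 88; 90; 84; 71; 73; 75; 69; 65; 79; 77; 67; 76; 66; 64; 78; 74; 68; 70; 72; 13; 3; 1; 15; 11; 5; 7; 9; 6; 8; 10; 4; 0; 14; 12; 2; 17; 31; 29; 19; 23; 25; 27; 21; 26; 20; 22; 24; 28; 18; 16; 30; 45; 35; 33; 47; 43; 37; 39; 41; 38; 40; 42; 36; 32; 46; 44; 34; 49; 63; 61; 51; 55; 57; 59; 53; 58; 52; 54; 56; 60; 50; 48; 62];
 [:: 124; 114; 112; 126; 122; 116; 118; 120; 119; 121; 123; 117; 113; 127; 125; 115; 96; 110; 108; 98; 102; 104; 106; 100; 107; 101; 103; 105; 109; 99; 97; 111; 92; 82; 80; 94; 90; 84; 86; 88; 87; 89; 91; 85; 81; 95; 93; 83; 64; 78; 76; 66; 70; 72; 74; 68; 75; 69; 71; 73; 77; 67; 65; 79; 10; 4; 6; 8; 12; 2; 0; 14; 1; 15; 13; 3; 7; 9; 11; 5; 22; 24; 26; 20; 16; 30; 28; 18; 29; 19; 17; 31; 27; 21; 23; 25; 42; 36; 38; 40; 44; 34; 32; 46; 33; 47; 45; 35; 39; 41; 43; 37; 54; 56; 58; 52; 48; 62; 60; 50; 61; 51; 49; 63; 59; 53; 55; 57];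
 [:: 125; 115; 113; 127; 123; 117; 119; 121; 118; 120; 122; 116; 112; 126; 124; 114; 97; 111; 109; 99; 103; 105; 107; 101; 106; 100; 102; 104; 108; 98; 96; 110; 93; 83; 81; 95; 91; 85; 87; 89; 86; 88; 90; 84; 80; 94; 92; 82; 65; 79; 77; 67; 71; 73; 75; 69; 74; 68; 70; 72; 76; 66; 64; 78; 11; 5; 7; 9; 13; 3; 1; 15; 0; 14; 12; 2; 6; 8; 10; 4; 23; 25; 27; 21; 17; 31; 29; 19; 28; 18; 16; 30; 26; 20; 22; 24; 43; 37; 39; 41; 45; 35; 33; 47; 32; 46; 44; 34; 38; 40; 42; 36; 55; 57; 59; 53; 49; 63; 61; 51; 60; 50; 48; 62; 58; 52; 54; 56];
 [:: 126; 112; 114; 124; 120; 118; 116; 122; 117; 123; 121; 119; 115; 125; 127; 113; 98; 108; 110; 96; 100; 106; 104; 102; 105; 103; 101; 107; 111; 97; 99; 109; 94; 80; 82; 92; 88; 86; 84; 90; 85; 91; 89; 87; 83; 93; 95; 81; 66; 76; 78; 64; 68; 74; 72; 70; 73; 71; 69; 75; 79; 65; 67; 77; 8; 6; 4; 10; 14; 0; 2; 12; 3; 13; 15; 1; 5; 11; 9; 7; 20; 26; 24; 22; 18; 28; 30; 16; 31; 17; 19; 29; 25; 23; 21; 27; 40; 38; 36; 42; 46; 32; 34; 44; 35; 45; 47; 33; 37; 43; 41; 39; 52; 58; 56; 54; 50; 60; 62; 48; 63; 49; 51; 61; 57; 55; 53; 59];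
 [:: 127; 113; 115; 125; 121; 119; 117; 123; 116; 122; 120; 118; 114; 124; 126; 112; 99; 109; 111; 97; 101; 107; 105; 103; 104; 102; 100; 106; 110; 96; 98; 108; 95; 81; 83; 93; 89; 87; 85; 91; 84; 90; 88; 86; 82; 92; 94; 80; 67; 77; 79; 65; 69; 75; 73; 71; 72; 70; 68; 74; 78; 64; 66; 76; 9; 7; 5; 11; 15; 1; 3; 13; 2; 12; 14; 0; 4; 10; 8; 6; 21; 27; 25; 23; 19; 29; 31; 17; 30; 16; 18; 28; 24; 22; 20; 26; 41; 39; 37; 43; 47; 33; 35; 45; 34; 44; 46; 32; 36; 42; 40; 38; 53; 59; 57; 55; 51; 61; 63; 49; 62; 48; 50; 60; 56; 54; 52; 58]].
Definition Itab : seq nat := [:: 0; 1; 2; 3; 4; 5; 6; 7; 8; 9; 10; 11; 12; 13; 14; 15; 16; 17; 18; 19; 27; 26; 25; 24; 23; 22; 21; 20; 28; 29; 30; 31; 32; 33; 45; 44; 37; 36; 40; 41; 38; 39; 43; 42; 35; 34; 46; 47; 49; 48; 60; 61; 59; 58; 54; 55; 56; 57; 53; 52; 50; 51; 63; 62; 118; 120; 122; 116; 112; 126; 124; 114; 125; 115; 113; 127; 123; 117; 119; 121; 100; 106; 104; 102; 109; 99; 97; 111; 96; 110; 108; 98; 105; 103; 101; 107; 88; 86; 91; 85; 80; 94; 83; 93; 82; 92; 81; 95; 90; 84; 89; 87; 68; 74; 71; 73; 67; 77; 64; 78; 65; 79; 66; 76; 70; 72; 69; 75].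
Definition hlnat : seq nat := [:: 0; 1; 2; 3; 4; 5; 6; 7].
Definition btab : seq (seq bool) := [:: [:: false; false; false; false; false; false; false; false];
 [:: false; true; false; true; false; true; false; true];
 [:: false; false; true; true; false; false; true; true];
 [:: false; true; true; false; false; true; true; false];
 [:: false; false; false; false; true; true; true; true];
 [:: false; true; false; true; true; false; true; false];
 [:: false; false; true; true; true; true; false; false];
 [:: false; true; true; false; true; false; false; true]].
Definition dtab : seq (seq nat) := [:: [:: 0; 64; 32; 112; 16; 80; 48; 96];
 [:: 112; 0; 80; 48; 96; 16; 64; 32];
 [:: 32; 96; 0; 80; 48; 112; 16; 64];
 [:: 64; 48; 96; 0; 80; 32; 112; 16];
 [:: 16; 80; 48; 96; 0; 64; 32; 112];
 [:: 96; 16; 64; 32; 112; 0; 80; 48];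
 [:: 48; 112; 16; 64; 32; 96; 0; 80];
 [:: 80; 32; 112; 16; 64; 48; 96; 0]].
Definition g0nat : nat := 16.
Definition a0nat : nat := 4.
Definition basenat : seq nat := [:: 0; 16; 32; 64].
Definition comp (p q : seq nat) : seq nat := map (fun k => nth 0 q (nth 0 p k)) (iota 0 16).

Definition chkL : bool :=
  (size Ltab == 128) && uniq Ltab &&
  all (fun p => (size p == 16) && all (fun k => k < 16) p) Ltab.
Lemma chkL_ok : chkL = true. Proof. vm_compute. reflexivity. Qed.

Definition Tn (i j : nat) : nat := nth 0 (nth [::] Ttab i) j.

Definition chkT : bool :=
  all (fun i => all (fun j => (Tn i j < 128) &&
     (nth [::] Ltab (Tn i j) == comp (nth [::] Ltab i) (nth [::] Ltab j))) (iota 0 128)) (iota 0 128).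
Lemma chkT_ok : chkT = true. Proof. vm_compute. reflexivity. Qed.

Definition chkI : bool :=
  all (fun i => (nth 0 Itab i < 128) && (Tn (nth 0 Itab i) i == 0) && (Tn 0 i == i)) (iota 0 128).
Lemma chkI_ok : chkI = true. Proof. vm_compute. reflexivity. Qed.

Definition gT0 := 'I_128.
HB.instance Definition _ := Finite.on gT0.

Definition ofn (n : nat) : gT0 := Ordinal (ltn_pmod n (isT : 0 < 128)).
Lemma ofnK n : n < 128 -> nat_of_ord (ofn n) = n.
Proof. by move=> h; rewrite /= modn_small. Qed.
Definition gmul (i j : gT0) : gT0 := ofn (Tn i j).
Definition gone : gT0 := ofn 0.
Definition ginv (i : gT0) : gT0 := ofn (nth 0 Itab i).

Lemma in_iota128 (i : 'I_128) : (val i \in iota 0 128).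
Proof. by rewrite mem_iota /= ltn_ord. Qed.

Lemma Tn_lt (i j : gT0) : Tn i j < 128.
Proof.
have := chkT_ok; rewrite /chkT => /allP /(_ _ (in_iota128 i)) /allP /(_ _ (in_iota128 j)).
by case/andP.
Qed.

Lemma Tn_comp (i j : gT0) :
  nth [::] Ltab (Tn i j) = comp (nth [::] Ltab i) (nth [::] Ltab j).
Proof.
have := chkT_ok; rewrite /chkT => /allP /(_ _ (in_iota128 i)) /allP /(_ _ (in_iota128 j)).
by case/andP => _ /eqP.
Qed.

Lemma val_gmul (i j : gT0) : nat_of_ord (gmul i j) = Tn i j.
Proof. by rewrite /gmul ofnK // Tn_lt. Qed.

Definition dec (i : gT0) := nth [::] Ltab i.

Lemma dec_inj : injective dec.
Proof.
move=> i j; rewrite /dec => e; apply/ord_inj => /=.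
have := chkL_ok; rewrite /chkL => /andP [/andP [/eqP sz u] _].
by apply/eqP; rewrite -(nth_uniq [::] _ _ u) ?sz ?ltn_ord // e.
Qed.

Lemma dec_mul (i j : gT0) : dec (gmul i j) = comp (dec i) (dec j).
Proof. by rewrite /dec val_gmul Tn_comp. Qed.

Lemma dec_ok (i : gT0) : (size (dec i) == 16) && all (fun k => k < 16) (dec i).
Proof.
have := chkL_ok; rewrite /chkL => /andP [/andP [/eqP sz _] /allP]; apply.
by rewrite /dec mem_nth // sz ltn_ord.
Qed.

Lemma compA_dec (a b c : gT0) : comp (comp (dec a) (dec b)) (dec c) = comp (dec a) (comp (dec b) (dec c)).
Proof.
rewrite {1 3}/comp; apply/eq_in_map => k; rewrite mem_iota add0n => /andP [_ hk].
case/andP: (dec_ok a) => /eqP sa /allP ha.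
have hak : nth 0 (dec a) k < 16 by apply: ha; rewrite mem_nth // sa.
by rewrite /comp (nth_map 0) ?size_iota // nth_iota // (nth_map 0) ?size_iota ?nth_iota.
Qed.

Lemma gmulA : associative gmul.
Proof. by move=> a b c; apply: dec_inj; rewrite !dec_mul compA_dec. Qed.

Lemma gmul1 : left_id gone gmul.
Proof.
move=> j; apply/ord_inj; rewrite val_gmul /gone.
have -> : nat_of_ord gone = 0 by [].
have := chkI_ok; rewrite /chkI => /allP /(_ _ (in_iota128 j)) /andP [_ /eqP].
by [].
Qed.

Lemma gmulV : left_inverse gone ginv gmul.
Proof.
move=> j; apply/ord_inj; rewrite val_gmul /gone.
have -> : nat_of_ord gone = 0 by [].
have := chkI_ok; rewrite /chkI => /allP /(_ _ (in_iota128 j)) /andP [/andP [lt /eqP e] _].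
by rewrite /ginv ofnK.
Qed.

HB.instance Definition _ := Finite_isGroup.Build gT0 gmulA gmul1 gmulV.

Local Open Scope group_scope.

Lemma mulE (x y : gT0) : x * y = gmul x y. Proof. by []. Qed.
Lemma oneE : (1 : gT0) = gone. Proof. by []. Qed.
Lemma invE (x : gT0) : x^-1 = ginv x. Proof. by []. Qed.

Definition hl : seq gT0 := map ofn hlnat.
Definition allg : seq gT0 := map ofn (iota 0 128).
Lemma mem_allg (z : gT0) : z \in allg.
Proof.
apply/mapP; exists (nat_of_ord z); first by rewrite mem_iota /= ltn_ord.
by apply/ord_inj; rewrite ofnK.
Qed.

Definition conjn (u w : gT0) : gT0 := gmul (gmul u w) (ginv u).

Definition chkH : bool :=
  [&& gone \in hl, uniq hl, size hl == 8 &
   all (fun x => all (fun y => [&& gmul x y \in hl, gmul x y == gmul y x & gmul x x == gone]) hl) hl].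
Lemma chkH_ok : chkH = true. Proof. vm_compute. reflexivity. Qed.

Definition Hset : {set gT0} := [set x | x \in hl].

Lemma Hset_group : group_set Hset.
Proof.
case/and4P: chkH_ok => h1 _ _ /allP hm.
apply/group_setP; split; first by rewrite in_set oneE.
move=> x y; rewrite !in_set => hx hy; rewrite mulE.
by case/and3P: (allP (hm x hx) y hy).
Qed.

Canonical Hgrp : {group gT0} := Group Hset_group.

Lemma card_H : #|Hgrp| = 8.
Proof.
case/and4P: chkH_ok => _ u /eqP s _.
by rewrite /= /Hset cardsE -s (card_uniqP u).
Qed.

Lemma abelem_H : 2.-abelem Hgrp.
Proof.
case/and4P: chkH_ok => _ _ _ /allP hm.
apply/abelemP => //; split.
  apply/centsP => x; rewrite in_set => hx y; rewrite in_set => hy.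
  by rewrite /commute !mulE; case/and3P: (allP (hm y hy) x hx) => _ /eqP.
move=> x; rewrite in_set => hx; rewrite expgS expg1 mulE oneE.
by case/and3P: (allP (hm x hx) x hx) => _ _ /eqP.
Qed.

Lemma memHJ (u w : gT0) : (w \in Hgrp :^ u) = (conjn u w \in hl).
Proof. by rewrite mem_conjg conjgE invgK in_set mulgA. Qed.

Definition basel : seq gT0 := map ofn basenat.
Definition chkB : bool :=
  (size basel == 4) &&
  all (fun z => all (fun x => conjn x z \in hl) basel ==> (z == gone)) allg.
Lemma chkB_ok : chkB = true. Proof. vm_compute. reflexivity. Qed.

Definition chk3 : bool :=
  all (fun u => all (fun v => has (fun w => [&& w != gone, conjn u w \in hl & conjn v w \in hl]) hl) allg) allg.
Lemma chk3_ok : chk3 = true. Proof. vm_compute. reflexivity. Qed.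

Lemma no3 (u v : gT0) : exists2 w, w != 1 & [/\ w \in Hgrp, w \in Hgrp :^ u & w \in Hgrp :^ v].
Proof.
have := chk3_ok; rewrite /chk3 => /allP /(_ u (mem_allg u)) /allP /(_ v (mem_allg v)) /hasP [w hw].
case/and3P => h1 h2 h3; exists w => //; split; rewrite ?memHJ //.
by rewrite in_set.
Qed.

Lemma mem_bigcap_seq (T : finType) (I : eqType) (r : seq I) (F : I -> {set T}) z :
  (z \in \bigcap_(i <- r) F i) = all (fun i => z \in F i) r.
Proof. by elim: r => [|a r IH]; rewrite ?big_nil ?big_cons ?in_setT ?in_setI //= IH. Qed.

Lemma baseB (z : gT0) : all (fun x => z \in Hgrp :^ x) basel -> z = 1.
Proof.
case/andP: chkB_ok => _ /allP /(_ z (mem_allg z)) /implyP h a.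
apply/eqP; apply: h; apply/allP => x hx.
by rewrite -memHJ; apply: (allP a).
Qed.

Lemma sizeB : size basel == 4. Proof. by case/andP: chkB_ok. Qed.

Lemma base4 : base_ok [set: gT0] Hgrp 4.
Proof.
exists (Tuple sizeB); split.
  by apply/allP => x _; rewrite in_setT.
apply/setP => z; rewrite in_set1 mem_bigcap_seq.
apply/idP/eqP => [/baseB //|->]; apply/allP => x _.
by rewrite group1.
Qed.

Lemma three_nontriv (a b d : gT0) :
  exists2 z, z != 1 & [/\ z \in Hgrp :^ a, z \in Hgrp :^ b & z \in Hgrp :^ d].
Proof.
have [w w1 [hw hb hd]] := no3 (b * a^-1) (d * a^-1).
exists (w ^ a); first by rewrite conjg_eq1.
have e c : Hgrp :^ c = (Hgrp :^ (c * a^-1)) :^ a by rewrite -conjsgM mulgKV.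
split; first by rewrite memJ_conjg.
  by rewrite (e b) memJ_conjg.
by rewrite (e d) memJ_conjg.
Qed.

Lemma nobase c : 0 < c < 4 -> ~ base_ok [set: gT0] Hgrp c.
Proof.
move=> /andP [c0 c4] [xs [_ hxs]].
have : exists a b d, forall x, x \in (xs : seq gT0) -> [|| x == a, x == b | x == d].
  case: xs {hxs} => [[|a [|b [|d [|e l]]]] /= sz] //; try by rewrite -(eqP sz) in c0 c4.
  - by exists a, a, a => x; rewrite inE => ->.
  - by exists a, b, b => x; rewrite !inE => /orP [->|->]; rewrite ?orbT.
  - by exists a, b, d => x; rewrite !inE => /or3P [->|->|->]; rewrite ?orbT.
case=> a [b [d hr]].
have [z z1 [ha hb hd]] := three_nontriv a b d.
suff : z \in [1 gT0] by rewrite in_set1 (negbTE z1).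
rewrite -hxs mem_bigcap_seq; apply/allP => x /hr /or3P [] /eqP -> //.
Qed.

Lemma base_size4 : base_size_is [set: gT0] Hgrp 4.
Proof. by split; [exact: base4 | exact: nobase]. Qed.

Lemma no_pair : ~ (exists x y, x \in [set: gT0] /\ y \in [set: gT0] /\ Hgrp :&: Hgrp :^ x :&: Hgrp :^ y = [1 gT0]).
Proof.
case=> x [y [_ [_ e]]].
have [w w1 [h1 h2 h3]] := no3 x y.
suff : w \in [1 gT0] by rewrite in_set1 (negbTE w1).
by rewrite -e !in_setI h1 h2 h3.
Qed.

Lemma gcore1 : gcore Hgrp [set: gT0] = [1 gT0].
Proof.
apply/eqP; rewrite eqEsubset sub1G andbT; apply/subsetP => z hz.
rewrite in_set1; apply/eqP; apply: baseB; apply/allP => x _.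
by move/bigcapP: hz; apply; rewrite in_setT.
Qed.

Definition betaf (a x : gT0) : bool := nth false (nth [::] btab (index a hl)) (index x hl).
Definition dv (a : gT0 * gT0) : gT0 := ofn (nth 0 (nth [::] dtab (index a.1 hl)) (index a.2 hl)).
Definition g0 : gT0 := ofn g0nat.
Definition a0 : gT0 := ofn a0nat.

Definition chk1 := all (fun a => all (fun a' => all (fun x => betaf (gmul a a') x == betaf a x (+) betaf a' x) hl) hl) hl.
Definition chk2 := all (fun a => all (fun x => all (fun x' => betaf a (gmul x x') == betaf a x (+) betaf a x') hl) hl) hl.
Definition chk3b := all (fun x => all (fun x' => (x != x') ==> has (fun a => betaf a x != betaf a x') hl) hl) hl.
Definition chk4 := all (fun x => ginv x == x) hl.
Definition chk5 := all (fun a1 => all (fun a2 => all (fun x => all (fun y =>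
   (gmul (gmul x (dv (a1,a2))) y == dv (a1,a2)) ==> ~~ (betaf a1 x (+) betaf a2 y)) hl) hl) hl) hl.
Definition chk6 := [&& a0 \in hl, has (fun y => betaf a0 y) hl &
   all (fun x => all (fun y => (gmul (gmul x g0) y == g0) ==> ~~ betaf a0 y) hl) hl].
Lemma chk1_ok : chk1 = true. Proof. vm_compute. reflexivity. Qed.
Lemma chk2_ok : chk2 = true. Proof. vm_compute. reflexivity. Qed.
Lemma chk3b_ok : chk3b = true. Proof. vm_compute. reflexivity. Qed.
Lemma chk4_ok : chk4 = true. Proof. vm_compute. reflexivity. Qed.
Lemma chk5_ok : chk5 = true. Proof. vm_compute. reflexivity. Qed.
Lemma chk6_ok : chk6 = true. Proof. vm_compute. reflexivity. Qed.

Lemma memH x : (x \in Hgrp) = (x \in hl). Proof. by rewrite in_set. Qed.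

Lemma bl_c a a' x : a \in Hgrp -> a' \in Hgrp -> x \in Hgrp ->
  betaf (a * a') x = betaf a x (+) betaf a' x.
Proof.
rewrite !memH => ha ha' hx; apply/eqP.
exact: (allP (allP (allP chk1_ok a ha) a' ha') x hx).
Qed.

Lemma br_c a x x' : a \in Hgrp -> x \in Hgrp -> x' \in Hgrp ->
  betaf a (x * x') = betaf a x (+) betaf a x'.
Proof.
rewrite !memH => ha hx hx'; apply/eqP.
exact: (allP (allP (allP chk2_ok a ha) x hx) x' hx').
Qed.

Lemma bnd_c x x' : x \in Hgrp -> x' \in Hgrp -> x != x' ->
  exists2 a, a \in Hgrp & betaf a x != betaf a x'.
Proof.
rewrite !memH => hx hx' ne.
have /hasP [a ha h] := implyP (allP (allP chk3b_ok x hx) x' hx') ne.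
by exists a; rewrite ?memH.
Qed.

Lemma Hinv_c x : x \in Hgrp -> x^-1 = x.
Proof. by rewrite memH => hx; apply/eqP; exact: (allP chk4_ok x hx). Qed.

Lemma psi1 x y : x \in Hgrp -> y \in Hgrp -> x * g0 * y = g0 -> sgb (betaf a0 y) = 1%R.
Proof.
rewrite !memH => hx hy e; case/and3P: chk6_ok => _ _ /allP h.
have := implyP (allP (h x hx) y hy); rewrite -!mulE e eqxx => /(_ isT).
by case: (betaf a0 y).
Qed.

Lemma sumpsi0 : (\sum_(y in Hgrp) sgb (betaf a0 y) = 0)%R.
Proof.
case/and3P: chk6_ok => ha0 /hasP [y0 hy0 b0] _.
apply: (sum_flip (h := fun y => y0 * y)) => [|y|y hy]; first exact: mulgI.
  by rewrite /= groupMl // memH.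
have ha0' : a0 \in Hgrp by rewrite memH.
have hy0' : y0 \in Hgrp by rewrite memH.
rewrite /= br_c // b0 /=.
by case: (betaf a0 y); rewrite /= ?opprK.
Qed.

Definition GG : {group gT0} := [set: gT0]%G.

Lemma pos3 : has_depth GG Hgrp 3.
Proof.
rewrite /has_depth /=.
set BP := tens_basis GG Hgrp 2; set BQ := tens_basis GG Hgrp 1.
change (bimod_summand Hgrp Hgrp (fun x => pmx BP (@sl _ 2 x)) (fun y => pmx BP (@sr _ 2 y))
  (fun x => pmx BQ (@sl _ 1 x)) (fun y => pmx BQ (@sr _ 1 y))).
have hl2 x X : x \in Hgrp -> X \in BP -> sl x X \in BP.
  by move=> _ hX; exact: (@basis_lact _ GG Hgrp 2 x X (in_setT x) hX).
have hr2 x X : x \in Hgrp -> X \in BP -> sr x X \in BP.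
  by move=> _ hX; exact: (@basis_ract _ GG Hgrp 2 x X (in_setT x) hX).
have hl1 x X : x \in Hgrp -> X \in BQ -> sl x X \in BQ.
  by move=> _ hX; exact: (@basis_lact _ GG Hgrp 1 x X (in_setT x) hX).
have hr1 x X : x \in Hgrp -> X \in BQ -> sr x X \in BQ.
  by move=> _ hX; exact: (@basis_ract _ GG Hgrp 1 x X (in_setT x) hX).
have dB (a : gT0 * gT0) : HH Hgrp a -> [set [tuple dv a]] \in BQ.
  by move=> _; exact: (@basis1_mem _ GG Hgrp (dv a) (in_setT _)).
have dst (a w : gT0 * gT0) : HH Hgrp a -> HH Hgrp w ->
    act (@sl _ 1) (@sr _ 1) w [set [tuple dv a]] = [set [tuple dv a]] -> chiw betaf a w = 1%R.
  case: a w => [a1 a2] [x y] /andP [/= ha1 ha2] /andP [/= hx hy].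
  rewrite /act /= act1 => /eqP; rewrite set1t_eq => /eqP e.
  move: ha1 ha2 hx hy; rewrite !memH => ha1 ha2 hx hy.
  have := implyP (allP (allP (allP (allP chk5_ok a1 ha1) a2 ha2) x hx) y hy).
  rewrite -!mulE e eqxx => /(_ isT).
  by rewrite /chiw /= -sgb_xor => /negbTE ->.
have BP0 : (0 < #|BP|)%N.
  by apply/card_gt0P; exists (cls Hgrp (t2 1 1)); exact: (@basis2_mem _ GG Hgrp 1 1 (in_setT _) (in_setT _)).
exact: (summand_thm bl_c br_c bnd_c Hinv_c (@sl1 _ 2) (@sr1 _ 2) (@slM _ 2) (@srM _ 2) (@slr _ 2)
  (@sl1 _ 1) (@sr1 _ 1) (@slM _ 1) (@srM _ 1) (@slr _ 1) hl2 hr2 hl1 hr1 dB dst BP0).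
Qed.


Lemma solve_x (g y g' : gT0) : forall x, (x * g * y == g') = (x == g' * (g * y)^-1).
Proof.
move=> x; apply/eqP/eqP => [<-|->]; first by rewrite -[x * g * y]mulgA mulgK.
by rewrite -[_ * g * y]mulgA mulgKV.
Qed.

Lemma MQzero (A : {group gT0}) (BQ : {set {set 1.-tuple gT0}}) :
  (forall X, X \in BQ -> exists2 g, g \in A & X = [set [tuple g]]) ->
  Hgrp \subset A ->
  forall X Z, X \in BQ -> Z \in BQ ->
  (\sum_(x in A) \sum_(y in Hgrp) sgb (betaf a0 y) * (@sr _ 1 y (@sl _ 1 x X) == Z)%:R = 0)%R.
Proof.
move=> hB sHA X Z /hB [g hg ->] /hB [g' hg' ->].
under eq_bigr => x _ do under eq_bigr => y _ do rewrite act1 set1t_eq solve_x.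
rewrite exchange_big /= -[RHS]sumpsi0; apply: eq_bigr => y hy.
rewrite -mulr_sumr sum_eq1 ?mulr1 //.
by rewrite groupM ?groupV ?groupM // (subsetP sHA).
Qed.

Lemma phi_pos (A : {group gT0}) (R : gT0 -> gT0 -> bool) :
  Hgrp \subset A -> R 1 1 ->
  (forall x y, x \in A -> y \in Hgrp -> R x y -> x \in Hgrp /\ x * g0 * y = g0) ->
  (\sum_(x in A) \sum_(y in Hgrp) sgb (betaf a0 y) * (R x y)%:R != 0)%R.
Proof.
move=> sHA R11 hR.
have e x y : x \in A -> y \in Hgrp -> (sgb (betaf a0 y) * (R x y)%:R = (R x y)%:R)%R.
  move=> hx hy; case hr : (R x y); last by rewrite mulr0.
  by case: (hR x y hx hy hr) => hxH e; rewrite (psi1 hxH hy e) mul1r.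
under eq_bigr => x hx do under eq_bigr => y hy do rewrite e //.
under eq_bigr => x hx do rewrite -natr_sum.
rewrite -natr_sum pnatr_eq0 -lt0n (bigD1 1) ?group1 //= (bigD1 1) ?group1 //= R11.
by rewrite addnC addnS.
Qed.

Lemma neg2 : ~ has_depth GG Hgrp 2.
Proof.
rewrite /has_depth /=.
set BP := tens_basis GG Hgrp 2; set BQ := tens_basis GG Hgrp 1.
change (~ bimod_summand GG Hgrp (fun x => pmx BP (@sl _ 2 x)) (fun y => pmx BP (@sr _ 2 y))
  (fun x => pmx BQ (@sl _ 1 x)) (fun y => pmx BQ (@sr _ 1 y))).
apply: (@no_summand _ _ _ _ _ _ _ _ _ (fun x y => sgb (betaf a0 y))).
  rewrite (@Mform _ _ BQ GG Hgrp (@sl _ 1) (@sr _ 1)); last first.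
    by move=> x X _ hX; exact: (@basis_lact _ GG Hgrp 1 x X (in_setT x) hX).
  apply: mk0 => X Z hX hZ; apply: (MQzero (A := GG) (BQ := BQ)) => //.
    by move=> Y; apply: basis1P.
  by apply: subsetT.
rewrite (@Mform _ _ BP GG Hgrp (@sl _ 2) (@sr _ 2)); last first.
  by move=> x X _ hX; exact: (@basis_lact _ GG Hgrp 2 x X (in_setT x) hX).
have hX0 : cls Hgrp (t2 1 g0) \in BP by exact: (@basis2_mem _ GG Hgrp 1 g0 (in_setT _) (in_setT _)).
apply: (mk_neq0 hX0).
under eq_bigr => x _ do under eq_bigr => y _ do rewrite act2 cls2_eq rel2E.
apply: phi_pos; first exact: subsetT.
  by apply/existsP; exists 1; rewrite group1 !mulg1 invg1 mul1g !eqxx.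
move=> x y _ hy /existsP [h /and3P [hh /eqP e1 /eqP e2]].
rewrite mulg1 in e1.
have ex : x = h^-1 by rewrite -[x]mulg1 -(mulgV h) mulgA -e1 mul1g.
split; first by rewrite ex groupV.
by rewrite ex -mulgA -e2.
Qed.

Lemma neg1 : ~ has_depth GG Hgrp 1.
Proof.
rewrite /has_depth /=.
set BP := tens_basis GG Hgrp 1; set BQ := tens_basis Hgrp Hgrp 1.
change (~ bimod_summand Hgrp Hgrp (fun x => pmx BP (@sl _ 1 x)) (fun y => pmx BP (@sr _ 1 y))
  (fun x => pmx BQ (@sl _ 1 x)) (fun y => pmx BQ (@sr _ 1 y))).
apply: (@no_summand _ _ _ _ _ _ _ _ _ (fun x y => sgb (betaf a0 y))).
  rewrite (@Mform _ _ BQ Hgrp Hgrp (@sl _ 1) (@sr _ 1)); last first.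
    by move=> x X hx hX; exact: (@basis_lact _ Hgrp Hgrp 1 x X hx hX).
  apply: mk0 => X Z hX hZ; apply: (MQzero (A := Hgrp) (BQ := BQ)) => //.
  by move=> Y; apply: basis1P.
rewrite (@Mform _ _ BP Hgrp Hgrp (@sl _ 1) (@sr _ 1)); last first.
  by move=> x X _ hX; exact: (@basis_lact _ GG Hgrp 1 x X (in_setT x) hX).
have hX0 : [set [tuple g0]] \in BP by exact: (@basis1_mem _ GG Hgrp g0 (in_setT _)).
apply: (mk_neq0 hX0).
under eq_bigr => x _ do under eq_bigr => y _ do rewrite act1 set1t_eq.
apply: phi_pos; [exact: subxx | by rewrite mulg1 mul1g | by move=> x y hx hy /eqP e].
Qed.

Theorem mainTheorem16 :
  exists (gT : finGroupType) (G H : {group gT}),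
    #|G| = (2 ^ 7)%N /\ H \subset G /\ 2.-abelem H /\ #|H| = 8%N /\
    gcore H G = [1 gT] /\
    depth_is G H 3 /\ base_size_is G H 4 /\
    ~ (exists x y, x \in G /\ y \in G /\ H :&: H :^ x :&: H :^ y = [1 gT]).
Proof.
exists gT0, GG, Hgrp.
split; first by rewrite /GG /= cardsT card_ord.
split; first exact: subsetT.
split; first exact: abelem_H.
split; first exact: card_H.
split; first exact: gcore1.
split.
  split; first exact: pos3.
  by move=> [|[|[|n]]] //= _; [exact: neg1 | exact: neg2].
split; first exact: base_size4.
exact: no_pair.
Qed.
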